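(* Each of the following third-order recursions is periodic with period $12$: $$z_n = \frac{-1 - 2 z_{n-3} + 2 z_{n-2} - 2 z_{n-1}}{2 z_{n-3}},$$ $$z_n = \frac{(1+\sqrt3\, i) z_{n-3} + 2 z_{n-2} + (1-\sqrt3\, i) z_{n-1} + (-1-\sqrt3\, i)}{2 z_{n-3}},$$ $$z_n = \frac{(1-\sqrt3\, i) z_{n-3} + 2 z_{n-2} + (1+\sqrt3\, i) z_{n-1} + (-1+\sqrt3\, i)}{2 z_{n-3}}.$$ That is, for the sequence defined from indeterminates $z_1,z_2,z_3$ one has $z_{13}=z_1$, $z_{14}=z_2$, $z_{15}=z_3$ in $\mathbb{C}(z_1,z_2,z_3)$, hence $z_{n+12}=z_n$ for all $n\ge1$.
   Context: Let $z_1,z_2,z_3$ be independent indeterminates over $\mathbb{C}$ and define $z_n\in\mathbb{C}(z_1,z_2,z_3)$ for $n\ge4$ by the given recursion. A third-order recursion is periodic with period $k$ if all iterates are well-defined elements of $\mathbb{C}(z_1,z_2,z_3)$ (no denominator identically zero) and $z_{k+1}=z_1$, $z_{k+2}=z_2$, $z_{k+3}=z_3$; equivalently every complex sequence satisfying the recursion with no vanishing denominator satisfies $z_{n+k}=z_n$ for all $n$. *)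

(* Defs.v *)
From HB Require Import structures.
From mathcomp Require Import all_boot all_order all_algebra.
Set Implicit Arguments. Unset Strict Implicit. Unset Printing Implicit Defensive.
Import Order.TTheory GRing.Theory Num.Theory.
Local Open Scope ring_scope.

(* The field of rational functions C(z1,z2,z3), realized as the fraction
   field of the iterated polynomial ring C[z3][z2][z1]. *)
Definition ratfun3 (C : fieldType) := {fraction {poly {poly {poly C}}}}.

Definition indet1 (C : fieldType) : ratfun3 C :=
  FracField.tofrac ('X : {poly {poly {poly C}}}).
Definition indet2 (C : fieldType) : ratfun3 C :=
  FracField.tofrac (('X : {poly {poly C}})%:P : {poly {poly {poly C}}}).
Definition indet3 (C : fieldType) : ratfun3 C :=
  FracField.tofrac ((('X : {poly C})%:P)%:P : {poly {poly {poly C}}}).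

(* The sequence of a third-order recursion  z_n = N(z_{n-3},z_{n-2},z_{n-1}) / D(z_{n-3},z_{n-2},z_{n-1}),
   0-indexed: rec3 N D x1 x2 x3 0 = x1 (= z_1), ..., rec3 ... n = z_{n+1}. *)
Definition rec3_step (K : fieldType) (N D : K -> K -> K -> K) (t : K * K * K) : K * K * K :=
  let: (a, b, c) := t in (b, c, N a b c / D a b c).

Definition rec3 (K : fieldType) (N D : K -> K -> K -> K) (x1 x2 x3 : K) (n : nat) : K :=
  (iter n (rec3_step N D) (x1, x2, x3)).1.1.

(* Periodicity with period k of the recursion, started at x1 x2 x3:
   every denominator D(z_{n}, z_{n+1}, z_{n+2}) is nonzero (all iterates are
   well defined) and z_{k+1} = z_1, z_{k+2} = z_2, z_{k+3} = z_3. *)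
Definition periodic3 (K : fieldType) (N D : K -> K -> K -> K) (x1 x2 x3 : K) (k : nat) : Prop :=
  [/\ (forall n, D (rec3 N D x1 x2 x3 n) (rec3 N D x1 x2 x3 n.+1) (rec3 N D x1 x2 x3 n.+2) != 0),
      rec3 N D x1 x2 x3 k = x1,
      rec3 N D x1 x2 x3 k.+1 = x2 &
      rec3 N D x1 x2 x3 k.+2 = x3].

Definition rec3_periodic (C : fieldType) (N D : ratfun3 C -> ratfun3 C -> ratfun3 C -> ratfun3 C) (k : nat) : Prop :=
  periodic3 N D (indet1 C) (indet2 C) (indet3 C) k.

(* Main.v *)
Require Import Defs.
From HB Require Import structures.
From mathcomp Require Import all_boot all_order all_algebra.
From mathcomp Require Import ring zify.
Import Order.TTheory GRing.Theory Num.Theory.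
Local Open Scope ring_scope.

Lemma periodic_from_w (K : fieldType) (N D : K -> K -> K -> K) (x1 x2 x3 : K)
  (wb : nat -> K) :
  wb 0%N = x1 -> wb 1%N = x2 -> wb 2%N = x3 ->
  wb 12%N = x1 -> wb 13%N = x2 -> wb 14%N = x3 ->
  (forall a b c, D a b c = 2 * a) ->
  (forall m, (m < 12)%N -> 2 * wb m != 0) ->
  (forall m, (m < 12)%N -> wb m.+3 = N (wb m) (wb m.+1) (wb m.+2) / (2 * wb m)) ->
  periodic3 N D x1 x2 x3 12.
Proof.
move=> w0 w1 w2 w12 w13 w14 hD hnz hst.
pose w n := wb (n %% 12)%N.
have wmod k : (k < 15)%N -> wb k = wb (k %% 12)%N.
  move=> hk; case: (ltnP k 12) => hk12; first by rewrite modn_small.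
  have: k \in [:: 12; 13; 14]%N.
    by rewrite !inE; move: hk hk12; do 15 (case: k => // k).
  by rewrite !inE => /or3P [] /eqP ->; rewrite /= ?w12 ?w13 ?w14 ?w0 ?w1 ?w2.
have wS n k : (k < 4)%N -> w (n + k)%N = wb ((n %% 12) + k)%N.
  move=> hk; rewrite /w -modnDml -wmod //.
  have := ltn_pmod n (isT : (0 < 12)%N); lia.
have wst n : w n.+3 = N (w n) (w n.+1) (w n.+2) / (2 * w n).
  have h12 := ltn_pmod n (isT : (0 < 12)%N).
  have e1 : w n.+1 = wb (n %% 12).+1 by rewrite -addn1 wS // addn1.
  have e2 : w n.+2 = wb (n %% 12).+2 by rewrite -(addn2 n) wS // addn2.
  have e3 : w n.+3 = wb (n %% 12).+3 by rewrite -(addn3 n) wS // addn3.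
  rewrite e1 e2 e3; exact: hst.
have iterE n : iter n (rec3_step N D) (x1, x2, x3) = (w n, w n.+1, w n.+2).
  elim: n => [|n IH]; first by rewrite /w /= w0 w1 w2.
  by rewrite iterS IH /= hD wst.
have recE n : rec3 N D x1 x2 x3 n = w n by rewrite /rec3 iterE.
split.
- move=> n; rewrite !recE hD /w; apply: hnz; exact: ltn_pmod.
- by rewrite recE /w /= w0.
- by rewrite recE /w /= w1.
- by rewrite recE /w /= w2.
Qed.

Definition ev (C : comNzRingType) : {rmorphism {poly {poly {poly C}}} -> C} :=
  (horner_eval 0 \o horner_eval 0 \o horner_eval 0)%FUN.

Lemma evX1 (C : comNzRingType) : ev C 'X = 0.
Proof. by rewrite /ev /= /horner_eval hornerX horner0 horner0. Qed.
Lemma evX2 (C : comNzRingType) : ev C ('X%:P) = 0.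
Proof. by rewrite /ev /= /horner_eval hornerC hornerX horner0. Qed.
Lemma evX3 (C : comNzRingType) : ev C ('X%:P%:P) = 0.
Proof. by rewrite /ev /= /horner_eval !hornerC hornerX. Qed.
Lemma evc (C : comNzRingType) (t : C) : ev C (t%:P%:P%:P) = t.
Proof. by rewrite /ev /= /horner_eval !hornerC. Qed.

Lemma nz_from_ev (C : numClosedFieldType) (p : {poly {poly {poly C}}}) :
  ev C p != 0 -> (FracField.tofrac p : ratfun3 C) != 0.
Proof. by move=> h; rewrite tofrac_eq0; apply: contraNneq h => ->; rewrite rmorph0. Qed.

Lemma nz_lin (C : numClosedFieldType) (t : C) (a b : int) :
  t ^+ 2 = -3 -> (a != 0) || (b != 0) -> a%:~R + b%:~R * t != 0.
Proof.
move=> ht hab; apply/eqP => h.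
have : (a * a + 3 * (b * b))%:~R = 0 :> C.
  have e : a%:~R = - (b%:~R * t) :> C by apply/eqP; rewrite -subr_eq0 opprK h.
  rewrite intrD !intrM e mulrNN mulrACA (_ : t * t = -3); last by rewrite -expr2.
  have h3 : (3 : int)%:~R = 3 :> C by [].
  by rewrite h3 mulrN mulrC addNr.
move/eqP; rewrite intr_eq0 => /eqP h2.
move: hab; have : a = 0 /\ b = 0 by nia.
by case=> -> ->.
Qed.

Lemma nz_int (C : numClosedFieldType) (a : int) : a != 0 -> a%:~R != 0 :> C.
Proof. by rewrite intr_eq0. Qed.

Lemma natnz (C : numClosedFieldType) (n : nat) : (n.+1)%:R != 0 :> ratfun3 C.
Proof.
rewrite -(rmorph_nat (@FracField.tofrac _)) tofrac_eq0 -!polyC_natr !polyC_eq0.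
by rewrite pnatr_eq0.
Qed.

Lemma indet1_nz (C : numClosedFieldType) : indet1 C != 0.
Proof. by rewrite /indet1 tofrac_eq0 polyX_eq0. Qed.
Lemma indet2_nz (C : numClosedFieldType) : indet2 C != 0.
Proof. by rewrite /indet2 tofrac_eq0 polyC_eq0 polyX_eq0. Qed.
Lemma indet3_nz (C : numClosedFieldType) : indet3 C != 0.
Proof. by rewrite /indet3 tofrac_eq0 !polyC_eq0 polyX_eq0. Qed.

Inductive pexpr := PV of nat | PC of nat | P1 | PN of pexpr | PA of pexpr & pexpr
  | PM of pexpr & pexpr | PX of pexpr & nat.

Fixpoint peval {R : comNzRingType} (env : nat -> R) (e : pexpr) : R :=
  match e with
  | PV i => env i
  | PC n => n%:R
  | P1 => 1
  | PN a => - peval env a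
  | PA a b => peval env a + peval env b
  | PM a b => peval env a * peval env b
  | PX a n => peval env a ^+ n
  end.

Definition env4 {R : comNzRingType} (s a b c : R) (i : nat) : R :=
  match i with 0 => s | 1 => a | 2 => b | _ => c end.

Lemma peval_morph (R S : comNzRingType) (f : {rmorphism R -> S}) (s a b c : R) e :
  f (peval (env4 s a b c) e) = peval (env4 (f s) (f a) (f b) (f c)) e.
Proof.
elim: e => [i|n||x IH|x IHx y IHy|x IHx y IHy|x IH n] /=.
- by case: i => [|[|[|i]]].
- by rewrite rmorph_nat.
- by rewrite rmorph1.
- by rewrite rmorphN IH.
- by rewrite rmorphD IHx IHy.
- by rewrite rmorphM IHx IHy.
- by rewrite rmorphXn IH.
Qed.

Lemma peval_tofrac (R : idomainType) (s a b c : R) e :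
  FracField.tofrac (peval (env4 s a b c) e) =
  peval (env4 (FracField.tofrac s) (FracField.tofrac a) (FracField.tofrac b) (FracField.tofrac c)) e.
Proof.
elim: e => [i|n||x IH|x IHx y IHy|x IHx y IHy|x IH n] /=.
- by case: i => [|[|[|i]]].
- by rewrite rmorph_nat.
- by rewrite rmorph1.
- by rewrite -IH rmorphN.
- by rewrite -IHx -IHy rmorphD.
- by rewrite -IHx -IHy rmorphM.
- by rewrite -IH rmorphXn.
Qed.

Lemma nz_via (C : numClosedFieldType) (e : pexpr) (t : C) :
  peval (env4 t 0 0 0) e != 0 ->
  peval (env4 (FracField.tofrac (t%:P%:P%:P) : ratfun3 C) (indet1 C) (indet2 C) (indet3 C)) e != 0.
Proof.
move=> h; rewrite /indet1 /indet2 /indet3 -peval_tofrac.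
apply: nz_from_ev.
rewrite (peval_morph _ _ (ev C)).
rewrite (evc C t).
rewrite evX1.
rewrite evX2.
by rewrite evX3.
Qed.

Lemma eq_via (K : fieldType) (s X Y R Dn : K) :
  s ^+ 2 = -3 -> X - Y = (s ^+ 2 + 3) * R / Dn -> X = Y.
Proof. by move=> hs; rewrite hs addNr mul0r mul0r => /eqP; rewrite subr_eq0 => /eqP. Qed.

Lemma neq0_ring {K : fieldType} {P Q : K} : Q != 0 -> Q = P -> P != 0.
Proof. by move=> h <-. Qed.

Ltac nzt hn := repeat (apply/andP; split);
  repeat first [ assumption | apply: mulf_neq0 | apply: invr_neq0 | apply: expf_neq0 | apply: hn ].
Definition m1F3 {R : comNzRingType} (x1 x2 x3 : R) : R :=
  (- 2 * x1 + 2 * x2 - 2 * x3 - 1).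
Definition m1e3 : pexpr := (PA (PA (PA (PM (PN (PC 2)) (PV 1)) (PM (PC 2) (PV 2))) (PN (PM (PC 2) (PV 3)))) (PN P1)).
Lemma m1F3E {R : comNzRingType} (u a b c : R) : m1F3 a b c = peval (env4 u a b c) m1e3.
Proof. by []. Qed.
Lemma m1F3_nz (C : numClosedFieldType) :
  m1F3 (indet1 C) (indet2 C) (indet3 C) != 0.
Proof.
rewrite (m1F3E (FracField.tofrac ((0 : C)%:P%:P%:P))); apply: nz_via; rewrite -(m1F3E (0 : C)).
rewrite (_ : m1F3 (0 : C) 0 0 = (-1)%:~R); last by rewrite /m1F3; ring.
exact: nz_int.
Qed.
Definition m1F4 {R : comNzRingType} (x1 x2 x3 : R) : R :=
  (- 2 * x1 * x2 + 2 * x1 * x3 + x1 - 2 * x2 + 2 * x3 + 1).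
Definition m1e4 : pexpr := (PA (PA (PA (PA (PA (PM (PM (PN (PC 2)) (PV 1)) (PV 2)) (PM (PM (PC 2) (PV 1)) (PV 3))) (PV 1)) (PN (PM (PC 2) (PV 2)))) (PM (PC 2) (PV 3))) P1).
Lemma m1F4E {R : comNzRingType} (u a b c : R) : m1F4 a b c = peval (env4 u a b c) m1e4.
Proof. by []. Qed.
Lemma m1F4_nz (C : numClosedFieldType) :
  m1F4 (indet1 C) (indet2 C) (indet3 C) != 0.
Proof.
rewrite (m1F4E (FracField.tofrac ((0 : C)%:P%:P%:P))); apply: nz_via; rewrite -(m1F4E (0 : C)).
rewrite (_ : m1F4 (0 : C) 0 0 = (1)%:~R); last by rewrite /m1F4; ring.
exact: nz_int.
Qed.
Definition m1F5 {R : comNzRingType} (x1 x2 x3 : R) : R :=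
  (- 2 * x1 * x2 * x3 - x1 * x2 - 2 * x1 * x3 - x1 + 2 * x2 ^+ 2 - 2 * x2 * x3 + x2 - 2 * x3 - 1).
Definition m1e5 : pexpr := (PA (PA (PA (PA (PA (PA (PA (PA (PM (PM (PM (PN (PC 2)) (PV 1)) (PV 2)) (PV 3)) (PN (PM (PV 1) (PV 2)))) (PN (PM (PM (PC 2) (PV 1)) (PV 3)))) (PN (PV 1))) (PM (PC 2) (PX (PV 2) 2))) (PN (PM (PM (PC 2) (PV 2)) (PV 3)))) (PV 2)) (PN (PM (PC 2) (PV 3)))) (PN P1)).
Lemma m1F5E {R : comNzRingType} (u a b c : R) : m1F5 a b c = peval (env4 u a b c) m1e5.
Proof. by []. Qed.
Lemma m1F5_nz (C : numClosedFieldType) :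
  m1F5 (indet1 C) (indet2 C) (indet3 C) != 0.
Proof.
rewrite (m1F5E (FracField.tofrac ((0 : C)%:P%:P%:P))); apply: nz_via; rewrite -(m1F5E (0 : C)).
rewrite (_ : m1F5 (0 : C) 0 0 = (-1)%:~R); last by rewrite /m1F5; ring.
exact: nz_int.
Qed.
Definition m1F6 {R : comNzRingType} (x1 x2 x3 : R) : R :=
  (x1 * x2 * x3 + x1 * x2 + 2 * x1 * x3 ^+ 2 + 3 * x1 * x3 + x1 - 2 * x2 ^+ 2 * x3 - 2 * x2 ^+ 2 + 2 * x2 * x3 ^+ 2 + x2 * x3 - x2 + 2 * x3 ^+ 2 + 3 * x3 + 1).
Definition m1e6 : pexpr := (PA (PA (PA (PA (PA (PA (PA (PA (PA (PA (PA (PA (PM (PM (PV 1) (PV 2)) (PV 3)) (PM (PV 1) (PV 2))) (PM (PM (PC 2) (PV 1)) (PX (PV 3) 2))) (PM (PM (PC 3) (PV 1)) (PV 3))) (PV 1)) (PN (PM (PM (PC 2) (PX (PV 2) 2)) (PV 3)))) (PN (PM (PC 2) (PX (PV 2) 2)))) (PM (PM (PC 2) (PV 2)) (PX (PV 3) 2))) (PM (PV 2) (PV 3))) (PN (PV 2))) (PM (PC 2) (PX (PV 3) 2))) (PM (PC 3) (PV 3))) P1).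
Lemma m1F6E {R : comNzRingType} (u a b c : R) : m1F6 a b c = peval (env4 u a b c) m1e6.
Proof. by []. Qed.
Lemma m1F6_nz (C : numClosedFieldType) :
  m1F6 (indet1 C) (indet2 C) (indet3 C) != 0.
Proof.
rewrite (m1F6E (FracField.tofrac ((0 : C)%:P%:P%:P))); apply: nz_via; rewrite -(m1F6E (0 : C)).
rewrite (_ : m1F6 (0 : C) 0 0 = (1)%:~R); last by rewrite /m1F6; ring.
exact: nz_int.
Qed.
Definition m1F7 {R : comNzRingType} (x1 x2 x3 : R) : R :=
  (2 * x1 * x2 ^+ 2 * x3 - 2 * x1 * x2 ^+ 2 - 6 * x1 * x2 * x3 ^+ 2 - 5 * x1 * x2 * x3 - x1 * x2 + 4 * x1 * x3 ^+ 3 + 8 * x1 * x3 ^+ 2 + 5 * x1 * x3 + x1 + 4 * x2 ^+ 3 - 4 * x2 ^+ 2 * x3 - 4 * x2 * x3 ^+ 2 - 8 * x2 * x3 - 3 * x2 + 4 * x3 ^+ 3 + 8 * x3 ^+ 2 + 5 * x3 + 1).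
Definition m1e7 : pexpr := (PA (PA (PA (PA (PA (PA (PA (PA (PA (PA (PA (PA (PA (PA (PA (PA (PA (PM (PM (PM (PC 2) (PV 1)) (PX (PV 2) 2)) (PV 3)) (PN (PM (PM (PC 2) (PV 1)) (PX (PV 2) 2)))) (PN (PM (PM (PM (PC 6) (PV 1)) (PV 2)) (PX (PV 3) 2)))) (PN (PM (PM (PM (PC 5) (PV 1)) (PV 2)) (PV 3)))) (PN (PM (PV 1) (PV 2)))) (PM (PM (PC 4) (PV 1)) (PX (PV 3) 3))) (PM (PM (PC 8) (PV 1)) (PX (PV 3) 2))) (PM (PM (PC 5) (PV 1)) (PV 3))) (PV 1)) (PM (PC 4) (PX (PV 2) 3))) (PN (PM (PM (PC 4) (PX (PV 2) 2)) (PV 3)))) (PN (PM (PM (PC 4) (PV 2)) (PX (PV 3) 2)))) (PN (PM (PM (PC 8) (PV 2)) (PV 3)))) (PN (PM (PC 3) (PV 2)))) (PM (PC 4) (PX (PV 3) 3))) (PM (PC 8) (PX (PV 3) 2))) (PM (PC 5) (PV 3))) P1).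
Lemma m1F7E {R : comNzRingType} (u a b c : R) : m1F7 a b c = peval (env4 u a b c) m1e7.
Proof. by []. Qed.
Lemma m1F7_nz (C : numClosedFieldType) :
  m1F7 (indet1 C) (indet2 C) (indet3 C) != 0.
Proof.
rewrite (m1F7E (FracField.tofrac ((0 : C)%:P%:P%:P))); apply: nz_via; rewrite -(m1F7E (0 : C)).
rewrite (_ : m1F7 (0 : C) 0 0 = (1)%:~R); last by rewrite /m1F7; ring.
exact: nz_int.
Qed.
Definition m1F8 {R : comNzRingType} (x1 x2 x3 : R) : R :=
  (- 8 * x1 ^+ 3 * x2 * x3 ^+ 2 - 4 * x1 ^+ 3 * x2 * x3 + 8 * x1 ^+ 3 * x3 ^+ 3 + 8 * x1 ^+ 3 * x3 ^+ 2 + 2 * x1 ^+ 3 * x3 + 4 * x1 ^+ 2 * x2 ^+ 2 * x3 ^+ 2 + 14 * x1 ^+ 2 * x2 ^+ 2 * x3 + 2 * x1 ^+ 2 * x2 ^+ 2 - 4 * x1 ^+ 2 * x2 * x3 ^+ 3 - 24 * x1 ^+ 2 * x2 * x3 ^+ 2 - 9 * x1 ^+ 2 * x2 * x3 + x1 ^+ 2 * x2 + 8 * x1 ^+ 2 * x3 ^+ 3 + 4 * x1 ^+ 2 * x3 ^+ 2 - 2 * x1 ^+ 2 * x3 - x1 ^+ 2 - 12 * x1 * x2 ^+ 3 * x3 - 8 * x1 * x2 ^+ 3 + 24 * x1 * x2 ^+ 2 * x3 ^+ 2 + 20 * x1 * x2 ^+ 2 * x3 - 12 * x1 * x2 * x3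 ^+ 3 - 4 * x1 * x2 * x3 ^+ 2 + 13 * x1 * x2 * x3 + 6 * x1 * x2 - 8 * x1 * x3 ^+ 3 - 16 * x1 * x3 ^+ 2 - 10 * x1 * x3 - 2 * x1 + 8 * x2 ^+ 4 - 24 * x2 ^+ 3 * x3 - 4 * x2 ^+ 3 + 24 * x2 ^+ 2 * x3 ^+ 2 - 6 * x2 ^+ 2 - 8 * x2 * x3 ^+ 3 + 12 * x2 * x3 ^+ 2 + 18 * x2 * x3 + 5 * x2 - 8 * x3 ^+ 3 - 12 * x3 ^+ 2 - 6 * x3 - 1).
Definition m1e8 : pexpr := (PA (PA (PA (PA (PA (PA (PA (PA (PA (PA (PA (PA (PA (PA (PA (PA (PA (PA (PA (PA (PA (PA (PA (PA (PA (PA (PA (PA (PA (PA (PA (PA (PA (PA (PA (PA (PA (PA (PA (PA (PM (PM (PM (PN (PC 8)) (PX (PV 1) 3)) (PV 2)) (PX (PV 3) 2)) (PN (PM (PM (PM (PC 4) (PX (PV 1) 3)) (PV 2)) (PV 3)))) (PM (PM (PC 8) (PX (PV 1) 3)) (PX (PV 3) 3))) (PM (PM (PC 8) (PX (PV 1) 3)) (PX (PV 3) 2))) (PM (PM (PC 2) (PX (PV 1) 3)) (PV 3))) (PM (PM (PM (PC 4) (PX (PV 1) 2)) (PX (PV 2) 2)) (PX (PV 3) 2))) (PM (PM (PM (PC 14) (PX (PV 1) 2)) (PX (PV 2) 2)) (PV 3))) (PM (PM (PC 2) (PX (PV 1) 2)) (PX (PV 2) 2))) (PN (PM (PM (PM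 (PC 4) (PX (PV 1) 2)) (PV 2)) (PX (PV 3) 3)))) (PN (PM (PM (PM (PC 24) (PX (PV 1) 2)) (PV 2)) (PX (PV 3) 2)))) (PN (PM (PM (PM (PC 9) (PX (PV 1) 2)) (PV 2)) (PV 3)))) (PM (PX (PV 1) 2) (PV 2))) (PM (PM (PC 8) (PX (PV 1) 2)) (PX (PV 3) 3))) (PM (PM (PC 4) (PX (PV 1) 2)) (PX (PV 3) 2))) (PN (PM (PM (PC 2) (PX (PV 1) 2)) (PV 3)))) (PN (PX (PV 1) 2))) (PN (PM (PM (PM (PC 12) (PV 1)) (PX (PV 2) 3)) (PV 3)))) (PN (PM (PM (PC 8) (PV 1)) (PX (PV 2) 3)))) (PM (PM (PM (PC 24) (PV 1)) (PX (PV 2) 2)) (PX (PV 3) 2))) (PM (PM (PM (PC 20) (PV 1)) (PX (PV 2) 2)) (PV 3))) (PN (PM (PM (PM (PC 12) (PV 1)) (PV 2)) (PX (PV 3) 3)))) (PN (PM (PM (PM (PC 4) (PV 1)) (PV 2)) (PX (PV 3) 2)))) (PM (PM (PM (PC 13) (PV 1)) (PV 2)) (PV 3))) (PM (PM (PC 6) (PV 1)) (PV 2))) (PN (PM (PM (PC 8) (PV 1)) (PX (PV 3) 3)))) (PN (PM (PM (PC 16) (PV 1)) (PX (PV 3) 2)))) (PN (PM (PM (PC 10) (PV 1)) (PV 3)))) (PN (PM (PC 2) (PV 1)))) (PM (PC 8) (PX (PV 2) 4))) (PN (PM (PM (PC 24) (PX (PV 2) 3)) (PV 3)))) (PN (PM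 (PC 4) (PX (PV 2) 3)))) (PM (PM (PC 24) (PX (PV 2) 2)) (PX (PV 3) 2))) (PN (PM (PC 6) (PX (PV 2) 2)))) (PN (PM (PM (PC 8) (PV 2)) (PX (PV 3) 3)))) (PM (PM (PC 12) (PV 2)) (PX (PV 3) 2))) (PM (PM (PC 18) (PV 2)) (PV 3))) (PM (PC 5) (PV 2))) (PN (PM (PC 8) (PX (PV 3) 3)))) (PN (PM (PC 12) (PX (PV 3) 2)))) (PN (PM (PC 6) (PV 3)))) (PN P1)).
Lemma m1F8E {R : comNzRingType} (u a b c : R) : m1F8 a b c = peval (env4 u a b c) m1e8.
Proof. by []. Qed.
Lemma m1F8_nz (C : numClosedFieldType) :
  m1F8 (indet1 C) (indet2 C) (indet3 C) != 0.
Proof.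
rewrite (m1F8E (FracField.tofrac ((0 : C)%:P%:P%:P))); apply: nz_via; rewrite -(m1F8E (0 : C)).
rewrite (_ : m1F8 (0 : C) 0 0 = (-1)%:~R); last by rewrite /m1F8; ring.
exact: nz_int.
Qed.
Definition m1F9 {R : comNzRingType} (x1 x2 x3 : R) : R :=
  (- 8 * x1 ^+ 3 * x2 ^+ 3 * x3 - 4 * x1 ^+ 3 * x2 ^+ 3 - 16 * x1 ^+ 3 * x2 ^+ 2 * x3 ^+ 2 - 20 * x1 ^+ 3 * x2 ^+ 2 * x3 - 6 * x1 ^+ 3 * x2 ^+ 2 + 8 * x1 ^+ 3 * x2 * x3 ^+ 3 + 8 * x1 ^+ 3 * x2 * x3 ^+ 2 + 2 * x1 ^+ 3 * x2 * x3 + 16 * x1 ^+ 3 * x3 ^+ 4 + 40 * x1 ^+ 3 * x3 ^+ 3 + 36 * x1 ^+ 3 * x3 ^+ 2 + 14 * x1 ^+ 3 * x3 + 2 * x1 ^+ 3 + 24 * x1 ^+ 2 * x2 ^+ 4 * x3 + 20 * x1 ^+ 2 * x2 ^+ 4 - 12 * x1 ^+ 2 * x2 ^+ 3 * x3 ^+ 2 + 22 * x1 ^+ 2 * x2 ^+ 3 * x3 + 18 * x1 ^+ 2 * x2 ^+ 3 - 36 * x1 ^+ 2 * x2 ^+ 2 * x3 ^+ 3 - 116 * x1 ^+ 2 * x2 ^+ 2 * x3 ^+ 2 - 85 * x1 ^+ 2 * x2 ^+ 2 * x3 - 18 * x1 ^+ 2 * x2 ^+ 2 + 24 * x1 ^+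 2 * x2 * x3 ^+ 4 + 20 * x1 ^+ 2 * x2 * x3 ^+ 3 - 38 * x1 ^+ 2 * x2 * x3 ^+ 2 - 41 * x1 ^+ 2 * x2 * x3 - 10 * x1 ^+ 2 * x2 + 48 * x1 ^+ 2 * x3 ^+ 4 + 120 * x1 ^+ 2 * x3 ^+ 3 + 108 * x1 ^+ 2 * x3 ^+ 2 + 42 * x1 ^+ 2 * x3 + 6 * x1 ^+ 2 - 16 * x1 * x2 ^+ 5 * x3 - 32 * x1 * x2 ^+ 5 + 40 * x1 * x2 ^+ 4 * x3 ^+ 2 + 56 * x1 * x2 ^+ 4 * x3 - 8 * x1 * x2 ^+ 4 - 32 * x1 * x2 ^+ 3 * x3 ^+ 3 + 40 * x1 * x2 ^+ 3 * x3 ^+ 2 + 132 * x1 * x2 ^+ 3 * x3 + 48 * x1 * x2 ^+ 3 + 8 * x1 * x2 ^+ 2 * x3 ^+ 4 - 112 * x1 * x2 ^+ 2 * x3 ^+ 3 - 190 * x1 * x2 ^+ 2 * x3 ^+ 2 - 70 * x1 * x2 ^+ 2 * x3 - 2 * x1 * x2 ^+ 2 + 48 * x1 * x2 * x3 ^+ 4 + 16 * x1 * x2 * x3 ^+ 3 - 100 * x1 * x2 * x3 ^+ 2 - 88 * x1 * x2 * x3 - 20 * x1 * x2 + 48 * x1 * x3 ^+ 4 + 120 * x1 * x3 ^+ 3 + 108 * x1 * x3 ^+ 2 + 42 * x1 * x3 + 6 * x1 + 16 * x2 ^+ 6 - 56 * x2 ^+ 5 * x3 - 8 * x2 ^+ 5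 + 72 * x2 ^+ 4 * x3 ^+ 2 - 12 * x2 ^+ 4 * x3 - 28 * x2 ^+ 4 - 40 * x2 ^+ 3 * x3 ^+ 3 + 72 * x2 ^+ 3 * x3 ^+ 2 + 98 * x2 ^+ 3 * x3 + 18 * x2 ^+ 3 + 8 * x2 ^+ 2 * x3 ^+ 4 - 76 * x2 ^+ 2 * x3 ^+ 3 - 90 * x2 ^+ 2 * x3 ^+ 2 - 5 * x2 ^+ 2 * x3 + 10 * x2 ^+ 2 + 24 * x2 * x3 ^+ 4 + 4 * x2 * x3 ^+ 3 - 54 * x2 * x3 ^+ 2 - 45 * x2 * x3 - 10 * x2 + 16 * x3 ^+ 4 + 40 * x3 ^+ 3 + 36 * x3 ^+ 2 + 14 * x3 + 2).
Definition m1e9 : pexpr := (PA (PA (PA (PA (PA (PA (PA (PA (PA (PA (PA (PA (PA (PA (PA (PA (PA (PA (PA (PA (PA (PA (PA (PA (PA (PA (PA (PA (PA (PA (PA (PA (PA (PA (PA (PA (PA (PA (PA (PA (PA (PA (PA (PA (PA (PA (PA (PA (PA (PA (PA (PA (PA (PA (PA (PA (PA (PA (PA (PA (PA (PA (PA (PA (PA (PA (PA (PA (PA (PA (PA (PA (PA (PA (PA (PA (PA (PA (PA (PA (PM (PM (PM (PN (PC 8)) (PX (PV 1) 3)) (PX (PV 2) 3)) (PV 3)) (PN (PM (PM (PC 4) (PX (PV 1) 3)) (PX (PV 2) 3)))) (PN (PM (PM (PM (PC 16) (PX (PV 1) 3)) (PX (PV 2) 2)) (PX (PV 3) 2)))) (PN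 (PM (PM (PM (PC 20) (PX (PV 1) 3)) (PX (PV 2) 2)) (PV 3)))) (PN (PM (PM (PC 6) (PX (PV 1) 3)) (PX (PV 2) 2)))) (PM (PM (PM (PC 8) (PX (PV 1) 3)) (PV 2)) (PX (PV 3) 3))) (PM (PM (PM (PC 8) (PX (PV 1) 3)) (PV 2)) (PX (PV 3) 2))) (PM (PM (PM (PC 2) (PX (PV 1) 3)) (PV 2)) (PV 3))) (PM (PM (PC 16) (PX (PV 1) 3)) (PX (PV 3) 4))) (PM (PM (PC 40) (PX (PV 1) 3)) (PX (PV 3) 3))) (PM (PM (PC 36) (PX (PV 1) 3)) (PX (PV 3) 2))) (PM (PM (PC 14) (PX (PV 1) 3)) (PV 3))) (PM (PC 2) (PX (PV 1) 3))) (PM (PM (PM (PC 24) (PX (PV 1) 2)) (PX (PV 2) 4)) (PV 3))) (PM (PM (PC 20) (PX (PV 1) 2)) (PX (PV 2) 4))) (PN (PM (PM (PM (PC 12) (PX (PV 1) 2)) (PX (PV 2) 3)) (PX (PV 3) 2)))) (PM (PM (PM (PC 22) (PX (PV 1) 2)) (PX (PV 2) 3)) (PV 3))) (PM (PM (PC 18) (PX (PV 1) 2)) (PX (PV 2) 3))) (PN (PM (PM (PM (PC 36) (PX (PV 1) 2)) (PX (PV 2) 2)) (PX (PV 3) 3)))) (PN (PM (PM (PM (PC 116) (PX (PV 1) 2)) (PX (PV 2) 2)) (PX (PV 3) 2)))) (PN (PM (PM (PM (PC 85) (PX (PV 1) 2)) (PX (PV 2) 2)) (PV 3)))) (PN (PM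 (PM (PC 18) (PX (PV 1) 2)) (PX (PV 2) 2)))) (PM (PM (PM (PC 24) (PX (PV 1) 2)) (PV 2)) (PX (PV 3) 4))) (PM (PM (PM (PC 20) (PX (PV 1) 2)) (PV 2)) (PX (PV 3) 3))) (PN (PM (PM (PM (PC 38) (PX (PV 1) 2)) (PV 2)) (PX (PV 3) 2)))) (PN (PM (PM (PM (PC 41) (PX (PV 1) 2)) (PV 2)) (PV 3)))) (PN (PM (PM (PC 10) (PX (PV 1) 2)) (PV 2)))) (PM (PM (PC 48) (PX (PV 1) 2)) (PX (PV 3) 4))) (PM (PM (PC 120) (PX (PV 1) 2)) (PX (PV 3) 3))) (PM (PM (PC 108) (PX (PV 1) 2)) (PX (PV 3) 2))) (PM (PM (PC 42) (PX (PV 1) 2)) (PV 3))) (PM (PC 6) (PX (PV 1) 2))) (PN (PM (PM (PM (PC 16) (PV 1)) (PX (PV 2) 5)) (PV 3)))) (PN (PM (PM (PC 32) (PV 1)) (PX (PV 2) 5)))) (PM (PM (PM (PC 40) (PV 1)) (PX (PV 2) 4)) (PX (PV 3) 2))) (PM (PM (PM (PC 56) (PV 1)) (PX (PV 2) 4)) (PV 3))) (PN (PM (PM (PC 8) (PV 1)) (PX (PV 2) 4)))) (PN (PM (PM (PM (PC 32) (PV 1)) (PX (PV 2) 3)) (PX (PV 3) 3)))) (PM (PM (PM (PC 40) (PV 1)) (PX (PV 2) 3)) (PX (PV 3) 2))) (PM (PM (PM (PC 132) (PV 1)) (PX (PV 2) 3)) (PV 3))) (PM (PM (PC 48) (PV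 1)) (PX (PV 2) 3))) (PM (PM (PM (PC 8) (PV 1)) (PX (PV 2) 2)) (PX (PV 3) 4))) (PN (PM (PM (PM (PC 112) (PV 1)) (PX (PV 2) 2)) (PX (PV 3) 3)))) (PN (PM (PM (PM (PC 190) (PV 1)) (PX (PV 2) 2)) (PX (PV 3) 2)))) (PN (PM (PM (PM (PC 70) (PV 1)) (PX (PV 2) 2)) (PV 3)))) (PN (PM (PM (PC 2) (PV 1)) (PX (PV 2) 2)))) (PM (PM (PM (PC 48) (PV 1)) (PV 2)) (PX (PV 3) 4))) (PM (PM (PM (PC 16) (PV 1)) (PV 2)) (PX (PV 3) 3))) (PN (PM (PM (PM (PC 100) (PV 1)) (PV 2)) (PX (PV 3) 2)))) (PN (PM (PM (PM (PC 88) (PV 1)) (PV 2)) (PV 3)))) (PN (PM (PM (PC 20) (PV 1)) (PV 2)))) (PM (PM (PC 48) (PV 1)) (PX (PV 3) 4))) (PM (PM (PC 120) (PV 1)) (PX (PV 3) 3))) (PM (PM (PC 108) (PV 1)) (PX (PV 3) 2))) (PM (PM (PC 42) (PV 1)) (PV 3))) (PM (PC 6) (PV 1))) (PM (PC 16) (PX (PV 2) 6))) (PN (PM (PM (PC 56) (PX (PV 2) 5)) (PV 3)))) (PN (PM (PC 8) (PX (PV 2) 5)))) (PM (PM (PC 72) (PX (PV 2) 4)) (PX (PV 3) 2))) (PN (PM (PM (PC 12) (PX (PV 2) 4)) (PV 3)))) (PN (PM (PC 28) (PX (PV 2) 4)))) (PN (PM (PM (PC 40) (PX (PV 2) 3))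 (PX (PV 3) 3)))) (PM (PM (PC 72) (PX (PV 2) 3)) (PX (PV 3) 2))) (PM (PM (PC 98) (PX (PV 2) 3)) (PV 3))) (PM (PC 18) (PX (PV 2) 3))) (PM (PM (PC 8) (PX (PV 2) 2)) (PX (PV 3) 4))) (PN (PM (PM (PC 76) (PX (PV 2) 2)) (PX (PV 3) 3)))) (PN (PM (PM (PC 90) (PX (PV 2) 2)) (PX (PV 3) 2)))) (PN (PM (PM (PC 5) (PX (PV 2) 2)) (PV 3)))) (PM (PC 10) (PX (PV 2) 2))) (PM (PM (PC 24) (PV 2)) (PX (PV 3) 4))) (PM (PM (PC 4) (PV 2)) (PX (PV 3) 3))) (PN (PM (PM (PC 54) (PV 2)) (PX (PV 3) 2)))) (PN (PM (PM (PC 45) (PV 2)) (PV 3)))) (PN (PM (PC 10) (PV 2)))) (PM (PC 16) (PX (PV 3) 4))) (PM (PC 40) (PX (PV 3) 3))) (PM (PC 36) (PX (PV 3) 2))) (PM (PC 14) (PV 3))) (PC 2)).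
Lemma m1F9E {R : comNzRingType} (u a b c : R) : m1F9 a b c = peval (env4 u a b c) m1e9.
Proof. by []. Qed.
Lemma m1F9_nz (C : numClosedFieldType) :
  m1F9 (indet1 C) (indet2 C) (indet3 C) != 0.
Proof.
rewrite (m1F9E (FracField.tofrac ((0 : C)%:P%:P%:P))); apply: nz_via; rewrite -(m1F9E (0 : C)).
rewrite (_ : m1F9 (0 : C) 0 0 = (2)%:~R); last by rewrite /m1F9; ring.
exact: nz_int.
Qed.
Definition m1F10 {R : comNzRingType} (x1 x2 x3 : R) : R :=
  (4 * x1 ^+ 3 * x2 * x3 ^+ 2 + 2 * x1 ^+ 3 * x2 * x3 + 8 * x1 ^+ 3 * x3 ^+ 3 + 8 * x1 ^+ 3 * x3 ^+ 2 + 2 * x1 ^+ 3 * x3 - 8 * x1 ^+ 2 * x2 ^+ 2 * x3 ^+ 2 - 4 * x1 ^+ 2 * x2 ^+ 2 * x3 + 2 * x1 ^+ 2 * x2 ^+ 2 + 8 * x1 ^+ 2 * x2 * x3 ^+ 3 + 6 * x1 ^+ 2 * x2 * x3 ^+ 2 + 9 * x1 ^+ 2 * x2 * x3 + 4 * x1 ^+ 2 * x2 + 20 * x1 ^+ 2 * x3 ^+ 3 + 28 * x1 ^+ 2 * x3 ^+ 2 + 13 * x1 ^+ 2 * x3 + 2 * x1 ^+ 2 - 8 * x1 * x2 ^+ 3 - 12 * x1 * x2 ^+ 2 * x3 ^+ 2 - 16 * x1 * x2 ^+ 2 * x3 - 12 * x1 * x2 ^+ 2 + 12 * x1 * x2 *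 x3 ^+ 3 + 14 * x1 * x2 * x3 ^+ 2 + 4 * x1 * x2 * x3 + 16 * x1 * x3 ^+ 3 + 32 * x1 * x3 ^+ 2 + 20 * x1 * x3 + 4 * x1 + 8 * x2 ^+ 4 - 12 * x2 ^+ 3 * x3 + 8 * x2 ^+ 3 - 24 * x2 ^+ 2 * x3 - 6 * x2 ^+ 2 + 4 * x2 * x3 ^+ 3 + 12 * x2 * x3 ^+ 2 - 3 * x2 * x3 - 4 * x2 + 4 * x3 ^+ 3 + 12 * x3 ^+ 2 + 9 * x3 + 2).
Definition m1e10 : pexpr := (PA (PA (PA (PA (PA (PA (PA (PA (PA (PA (PA (PA (PA (PA (PA (PA (PA (PA (PA (PA (PA (PA (PA (PA (PA (PA (PA (PA (PA (PA (PA (PA (PA (PA (PA (PA (PA (PA (PA (PM (PM (PM (PC 4) (PX (PV 1) 3)) (PV 2)) (PX (PV 3) 2)) (PM (PM (PM (PC 2) (PX (PV 1) 3)) (PV 2)) (PV 3))) (PM (PM (PC 8) (PX (PV 1) 3)) (PX (PV 3) 3))) (PM (PM (PC 8) (PX (PV 1) 3)) (PX (PV 3) 2))) (PM (PM (PC 2) (PX (PV 1) 3)) (PV 3))) (PN (PM (PM (PM (PC 8) (PX (PV 1) 2)) (PX (PV 2) 2)) (PX (PV 3) 2)))) (PN (PM (PM (PM (PC 4) (PX (PV 1) 2)) (PX (PV 2) 2)) (PV 3)))) (PM (PM (PC 2) (PX (PV 1) 2)) (PX (PV 2) 2))) (PM (PM (PM (PC 8) (PX (PV 1) 2)) (PV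 2)) (PX (PV 3) 3))) (PM (PM (PM (PC 6) (PX (PV 1) 2)) (PV 2)) (PX (PV 3) 2))) (PM (PM (PM (PC 9) (PX (PV 1) 2)) (PV 2)) (PV 3))) (PM (PM (PC 4) (PX (PV 1) 2)) (PV 2))) (PM (PM (PC 20) (PX (PV 1) 2)) (PX (PV 3) 3))) (PM (PM (PC 28) (PX (PV 1) 2)) (PX (PV 3) 2))) (PM (PM (PC 13) (PX (PV 1) 2)) (PV 3))) (PM (PC 2) (PX (PV 1) 2))) (PN (PM (PM (PC 8) (PV 1)) (PX (PV 2) 3)))) (PN (PM (PM (PM (PC 12) (PV 1)) (PX (PV 2) 2)) (PX (PV 3) 2)))) (PN (PM (PM (PM (PC 16) (PV 1)) (PX (PV 2) 2)) (PV 3)))) (PN (PM (PM (PC 12) (PV 1)) (PX (PV 2) 2)))) (PM (PM (PM (PC 12) (PV 1)) (PV 2)) (PX (PV 3) 3))) (PM (PM (PM (PC 14) (PV 1)) (PV 2)) (PX (PV 3) 2))) (PM (PM (PM (PC 4) (PV 1)) (PV 2)) (PV 3))) (PM (PM (PC 16) (PV 1)) (PX (PV 3) 3))) (PM (PM (PC 32) (PV 1)) (PX (PV 3) 2))) (PM (PM (PC 20) (PV 1)) (PV 3))) (PM (PC 4) (PV 1))) (PM (PC 8) (PX (PV 2) 4))) (PN (PM (PM (PC 12) (PX (PV 2) 3)) (PV 3)))) (PM (PC 8) (PX (PV 2) 3))) (PN (PM (PM (PC 24) (PX (PV 2) 2)) (PV 3)))) (PN (PM (PC 6) (PX (PV 2)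 2)))) (PM (PM (PC 4) (PV 2)) (PX (PV 3) 3))) (PM (PM (PC 12) (PV 2)) (PX (PV 3) 2))) (PN (PM (PM (PC 3) (PV 2)) (PV 3)))) (PN (PM (PC 4) (PV 2)))) (PM (PC 4) (PX (PV 3) 3))) (PM (PC 12) (PX (PV 3) 2))) (PM (PC 9) (PV 3))) (PC 2)).
Lemma m1F10E {R : comNzRingType} (u a b c : R) : m1F10 a b c = peval (env4 u a b c) m1e10.
Proof. by []. Qed.
Lemma m1F10_nz (C : numClosedFieldType) :
  m1F10 (indet1 C) (indet2 C) (indet3 C) != 0.
Proof.
rewrite (m1F10E (FracField.tofrac ((0 : C)%:P%:P%:P))); apply: nz_via; rewrite -(m1F10E (0 : C)).
rewrite (_ : m1F10 (0 : C) 0 0 = (2)%:~R); last by rewrite /m1F10; ring.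
exact: nz_int.
Qed.
Definition m1F11 {R : comNzRingType} (x1 x2 x3 : R) : R :=
  (2 * x1 ^+ 2 * x2 + 4 * x1 ^+ 2 * x3 + 2 * x1 ^+ 2 - 6 * x1 * x2 ^+ 2 - 5 * x1 * x2 + 2 * x1 * x3 + x1 + 4 * x2 ^+ 3 - 4 * x2 ^+ 2 * x3 + 4 * x2 ^+ 2 - 6 * x2 * x3 - x2 - 2 * x3 - 1).
Definition m1e11 : pexpr := (PA (PA (PA (PA (PA (PA (PA (PA (PA (PA (PA (PA (PA (PM (PM (PC 2) (PX (PV 1) 2)) (PV 2)) (PM (PM (PC 4) (PX (PV 1) 2)) (PV 3))) (PM (PC 2) (PX (PV 1) 2))) (PN (PM (PM (PC 6) (PV 1)) (PX (PV 2) 2)))) (PN (PM (PM (PC 5) (PV 1)) (PV 2)))) (PM (PM (PC 2) (PV 1)) (PV 3))) (PV 1)) (PM (PC 4) (PX (PV 2) 3))) (PN (PM (PM (PC 4) (PX (PV 2) 2)) (PV 3)))) (PM (PC 4) (PX (PV 2) 2))) (PN (PM (PM (PC 6) (PV 2)) (PV 3)))) (PN (PV 2))) (PN (PM (PC 2) (PV 3)))) (PN P1)).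
Lemma m1F11E {R : comNzRingType} (u a b c : R) : m1F11 a b c = peval (env4 u a b c) m1e11.
Proof. by []. Qed.
Lemma m1F11_nz (C : numClosedFieldType) :
  m1F11 (indet1 C) (indet2 C) (indet3 C) != 0.
Proof.
rewrite (m1F11E (FracField.tofrac ((0 : C)%:P%:P%:P))); apply: nz_via; rewrite -(m1F11E (0 : C)).
rewrite (_ : m1F11 (0 : C) 0 0 = (-1)%:~R); last by rewrite /m1F11; ring.
exact: nz_int.
Qed.
Ltac nzr1 hn h3 h4 h5 h6 h7 h8 h9 h10 h11 := repeat (apply/andP; split);
  repeat first [ assumption | (apply: (neq0_ring h3); ring) | (apply: (neq0_ring h4); ring) | (apply: (neq0_ring h5); ring) | (apply: (neq0_ring h6); ring) | (apply: (neq0_ring h7); ring) | (apply: (neq0_ring h8); ring) | (apply: (neq0_ring h9); ring) | (apply: (neq0_ring h10); ring) | (apply: (neq0_ring h11); ring) | apply: mulf_neq0 | apply: invr_neq0 | apply: hn | apply: expf_neq0 ].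
Definition m1wb {K : fieldType} (x1 x2 x3 : K) (n : nat) : K :=
  match n with
  | 0%N => x1
  | 1%N => x2
  | 2%N => x3
  | 3%N => (m1F3 x1 x2 x3) / (2 * x1)
  | 4%N => (m1F4 x1 x2 x3) / (2 * x1 * x2)
  | 5%N => (m1F5 x1 x2 x3) / (2 * x1 * x2 * x3)
  | 6%N => (m1F6 x1 x2 x3) / (x2 * x3 * (m1F3 x1 x2 x3))
  | 7%N => (m1F7 x1 x2 x3) / (x3 * (m1F3 x1 x2 x3) * (m1F4 x1 x2 x3))
  | 8%N => (m1F8 x1 x2 x3) / ((m1F3 x1 x2 x3) * (m1F4 x1 x2 x3) * (m1F5 x1 x2 x3))
  | 9%N => (m1F9 x1 x2 x3) / (2 * (m1F4 x1 x2 x3) * (m1F5 x1 x2 x3) * (m1F6 x1 x2 x3))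
  | 10%N => (m1F10 x1 x2 x3) / (2 * (m1F5 x1 x2 x3) * (m1F6 x1 x2 x3))
  | 11%N => (m1F11 x1 x2 x3) / (2 * (m1F6 x1 x2 x3))
  | 12%N => x1 | 13%N => x2 | 14%N => x3 | _ => 0 end.

Lemma m1_gen (K : fieldType) (N D : K -> K -> K -> K) (x1 x2 x3 : K) :
  (forall n : nat, (n.+1)%:R != 0 :> K) ->
  x1 != 0 -> x2 != 0 -> x3 != 0 -> (m1F3 x1 x2 x3) != 0 -> (m1F4 x1 x2 x3) != 0 -> (m1F5 x1 x2 x3) != 0 -> (m1F6 x1 x2 x3) != 0 -> (m1F7 x1 x2 x3) != 0 -> (m1F8 x1 x2 x3) != 0 -> (m1F9 x1 x2 x3) != 0 -> (m1F10 x1 x2 x3) != 0 -> (m1F11 x1 x2 x3) != 0 ->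
  (forall a b c, N a b c = -1 - 2 * a + 2 * b - 2 * c) ->
  (forall a b c, D a b c = 2 * a) -> periodic3 N D x1 x2 x3 12.
Proof.
move=> hn h0 h1 h2 h3 h4 h5 h6 h7 h8 h9 h10 h11 hN hD.
apply: (@periodic_from_w _ N D x1 x2 x3 (m1wb x1 x2 x3)) => //.
  move=> m hm; do 12 (case: m hm => [_|m hm]; first by rewrite /=; nzt hn).
  done.
move: h3 h4 h5 h6 h7 h8 h9 h10 h11; rewrite /m1F3 /m1F4 /m1F5 /m1F6 /m1F7 /m1F8 /m1F9 /m1F10 /m1F11 => h3 h4 h5 h6 h7 h8 h9 h10 h11.
move=> m hm; rewrite hN.
case: m hm => [|[|[|[|[|[|[|[|[|[|[|[|m]]]]]]]]]]]] hm //.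
- by rewrite /= /m1F3 /m1F4 /m1F5 /m1F6 /m1F7 /m1F8 /m1F9 /m1F10 /m1F11; field; nzr1 hn h3 h4 h5 h6 h7 h8 h9 h10 h11.
- by rewrite /= /m1F3 /m1F4 /m1F5 /m1F6 /m1F7 /m1F8 /m1F9 /m1F10 /m1F11; field; nzr1 hn h3 h4 h5 h6 h7 h8 h9 h10 h11.
- by rewrite /= /m1F3 /m1F4 /m1F5 /m1F6 /m1F7 /m1F8 /m1F9 /m1F10 /m1F11; field; nzr1 hn h3 h4 h5 h6 h7 h8 h9 h10 h11.
- by rewrite /= /m1F3 /m1F4 /m1F5 /m1F6 /m1F7 /m1F8 /m1F9 /m1F10 /m1F11; field; nzr1 hn h3 h4 h5 h6 h7 h8 h9 h10 h11.
- by rewrite /= /m1F3 /m1F4 /m1F5 /m1F6 /m1F7 /m1F8 /m1F9 /m1F10 /m1F11; field; nzr1 hn h3 h4 h5 h6 h7 h8 h9 h10 h11.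
- by rewrite /= /m1F3 /m1F4 /m1F5 /m1F6 /m1F7 /m1F8 /m1F9 /m1F10 /m1F11; field; nzr1 hn h3 h4 h5 h6 h7 h8 h9 h10 h11.
- by rewrite /= /m1F3 /m1F4 /m1F5 /m1F6 /m1F7 /m1F8 /m1F9 /m1F10 /m1F11; field; nzr1 hn h3 h4 h5 h6 h7 h8 h9 h10 h11.
- by rewrite /= /m1F3 /m1F4 /m1F5 /m1F6 /m1F7 /m1F8 /m1F9 /m1F10 /m1F11; field; nzr1 hn h3 h4 h5 h6 h7 h8 h9 h10 h11.
- by rewrite /= /m1F3 /m1F4 /m1F5 /m1F6 /m1F7 /m1F8 /m1F9 /m1F10 /m1F11; field; nzr1 hn h3 h4 h5 h6 h7 h8 h9 h10 h11.
- by rewrite /= /m1F3 /m1F4 /m1F5 /m1F6 /m1F7 /m1F8 /m1F9 /m1F10 /m1F11; field; nzr1 hn h3 h4 h5 h6 h7 h8 h9 h10 h11.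
- by rewrite /= /m1F3 /m1F4 /m1F5 /m1F6 /m1F7 /m1F8 /m1F9 /m1F10 /m1F11; field; nzr1 hn h3 h4 h5 h6 h7 h8 h9 h10 h11.
- by rewrite /= /m1F3 /m1F4 /m1F5 /m1F6 /m1F7 /m1F8 /m1F9 /m1F10 /m1F11; field; nzr1 hn h3 h4 h5 h6 h7 h8 h9 h10 h11.
Qed.
Definition m2F3 {R : comNzRingType} (s x1 x2 x3 : R) : R :=
  (s * x1 - s * x3 - s + x1 + 2 * x2 + x3 - 1).
Definition m2e3 : pexpr := (PA (PA (PA (PA (PA (PA (PM (PV 0) (PV 1)) (PN (PM (PV 0) (PV 3)))) (PN (PV 0))) (PV 1)) (PM (PC 2) (PV 2))) (PV 3)) (PN P1)).
Lemma m2F3E {R : comNzRingType} (s a b c : R) : m2F3 s a b c = peval (env4 s a b c) m2e3.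
Proof. by []. Qed.
Lemma m2F3_nz (C : numClosedFieldType) (t : C) : t ^+ 2 = -3 ->
  m2F3 (FracField.tofrac (t%:P%:P%:P) : ratfun3 C) (indet1 C) (indet2 C) (indet3 C) != 0.
Proof.
move=> ht; rewrite m2F3E; apply: nz_via; rewrite -m2F3E.
rewrite (_ : m2F3 t 0 0 0 = (-1)%:~R + (-1)%:~R * t); last by rewrite /m2F3; ring.
exact: nz_lin.
Qed.
Definition m2F4 {R : comNzRingType} (s x1 x2 x3 : R) : R :=
  (s * x1 * x2 - s * x1 - s * x2 - s * x3 + x1 * x2 + 2 * x1 * x3 + x1 + x2 - x3 - 2).
Definition m2e4 : pexpr := (PA (PA (PA (PA (PA (PA (PA (PA (PA (PM (PM (PV 0) (PV 1)) (PV 2)) (PN (PM (PV 0) (PV 1)))) (PN (PM (PV 0) (PV 2)))) (PN (PM (PV 0) (PV 3)))) (PM (PV 1) (PV 2))) (PM (PM (PC 2) (PV 1)) (PV 3))) (PV 1)) (PV 2)) (PN (PV 3))) (PN (PC 2))).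
Lemma m2F4E {R : comNzRingType} (s a b c : R) : m2F4 s a b c = peval (env4 s a b c) m2e4.
Proof. by []. Qed.
Lemma m2F4_nz (C : numClosedFieldType) (t : C) : t ^+ 2 = -3 ->
  m2F4 (FracField.tofrac (t%:P%:P%:P) : ratfun3 C) (indet1 C) (indet2 C) (indet3 C) != 0.
Proof.
move=> ht; rewrite m2F4E; apply: nz_via; rewrite -m2F4E.
rewrite (_ : m2F4 t 0 0 0 = (-2)%:~R + (0)%:~R * t); last by rewrite /m2F4; ring.
exact: nz_lin.
Qed.
Definition m2F5 {R : comNzRingType} (s x1 x2 x3 : R) : R :=
  (s * x1 * x2 * x3 - s * x1 * x3 - s * x1 - s * x2 * x3 - 2 * s * x2 + s + x1 * x2 * x3 + 2 * x1 * x2 + x1 * x3 - x1 + 2 * x2 ^+ 2 + x2 * x3 - 2 * x2 - 2 * x3 - 1).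
Definition m2e5 : pexpr := (PA (PA (PA (PA (PA (PA (PA (PA (PA (PA (PA (PA (PA (PA (PM (PM (PM (PV 0) (PV 1)) (PV 2)) (PV 3)) (PN (PM (PM (PV 0) (PV 1)) (PV 3)))) (PN (PM (PV 0) (PV 1)))) (PN (PM (PM (PV 0) (PV 2)) (PV 3)))) (PN (PM (PM (PC 2) (PV 0)) (PV 2)))) (PV 0)) (PM (PM (PV 1) (PV 2)) (PV 3))) (PM (PM (PC 2) (PV 1)) (PV 2))) (PM (PV 1) (PV 3))) (PN (PV 1))) (PM (PC 2) (PX (PV 2) 2))) (PM (PV 2) (PV 3))) (PN (PM (PC 2) (PV 2)))) (PN (PM (PC 2) (PV 3)))) (PN P1)).
Lemma m2F5E {R : comNzRingType} (s a b c : R) : m2F5 s a b c = peval (env4 s a b c) m2e5.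
Proof. by []. Qed.
Lemma m2F5_nz (C : numClosedFieldType) (t : C) : t ^+ 2 = -3 ->
  m2F5 (FracField.tofrac (t%:P%:P%:P) : ratfun3 C) (indet1 C) (indet2 C) (indet3 C) != 0.
Proof.
move=> ht; rewrite m2F5E; apply: nz_via; rewrite -m2F5E.
rewrite (_ : m2F5 t 0 0 0 = (-1)%:~R + (1)%:~R * t); last by rewrite /m2F5; ring.
exact: nz_lin.
Qed.
Definition m2F6 {R : comNzRingType} (s x1 x2 x3 : R) : R :=
  (s * x1 * x2 * x3 - s * x1 * x2 - 2 * s * x1 * x3 + s * x2 ^+ 2 * x3 - s * x2 ^+ 2 - 3 * s * x2 * x3 - s * x3 ^+ 2 + s * x3 + s + x1 * x2 * x3 + x1 * x2 + 2 * x1 * x3 ^+ 2 - 2 * x1 + x2 ^+ 2 * x3 + x2 ^+ 2 + 2 * x2 * x3 ^+ 2 + x2 * x3 - 4 * x2 - x3 ^+ 2 - 3 * x3 + 1).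
Definition m2e6 : pexpr := (PA (PA (PA (PA (PA (PA (PA (PA (PA (PA (PA (PA (PA (PA (PA (PA (PA (PA (PA (PA (PM (PM (PM (PV 0) (PV 1)) (PV 2)) (PV 3)) (PN (PM (PM (PV 0) (PV 1)) (PV 2)))) (PN (PM (PM (PM (PC 2) (PV 0)) (PV 1)) (PV 3)))) (PM (PM (PV 0) (PX (PV 2) 2)) (PV 3))) (PN (PM (PV 0) (PX (PV 2) 2)))) (PN (PM (PM (PM (PC 3) (PV 0)) (PV 2)) (PV 3)))) (PN (PM (PV 0) (PX (PV 3) 2)))) (PM (PV 0) (PV 3))) (PV 0)) (PM (PM (PV 1) (PV 2)) (PV 3))) (PM (PV 1) (PV 2))) (PM (PM (PC 2) (PV 1)) (PX (PV 3) 2))) (PN (PM (PC 2) (PV 1)))) (PM (PX (PV 2) 2) (PV 3))) (PX (PV 2) 2)) (PM (PM (PC 2) (PV 2)) (PX (PV 3) 2))) (PM (PV 2) (PV 3))) (PN (PM (PC 4) (PV 2)))) (PN (PX (PV 3) 2))) (PN (PM (PC 3) (PV 3)))) P1).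
Lemma m2F6E {R : comNzRingType} (s a b c : R) : m2F6 s a b c = peval (env4 s a b c) m2e6.
Proof. by []. Qed.
Lemma m2F6_nz (C : numClosedFieldType) (t : C) : t ^+ 2 = -3 ->
  m2F6 (FracField.tofrac (t%:P%:P%:P) : ratfun3 C) (indet1 C) (indet2 C) (indet3 C) != 0.
Proof.
move=> ht; rewrite m2F6E; apply: nz_via; rewrite -m2F6E.
rewrite (_ : m2F6 t 0 0 0 = (1)%:~R + (1)%:~R * t); last by rewrite /m2F6; ring.
exact: nz_lin.
Qed.
Definition m2F7 {R : comNzRingType} (s x1 x2 x3 : R) : R :=
  (s * x1 * x2 ^+ 2 * x3 + s * x1 * x2 * x3 ^+ 2 - 3 * s * x1 * x2 * x3 - 2 * s * x1 * x2 - 3 * s * x1 * x3 ^+ 2 - s * x1 * x3 + s * x1 - 2 * s * x2 ^+ 2 * x3 - 3 * s * x2 ^+ 2 - 3 * s * x2 * x3 ^+ 2 - 2 * s * x2 * x3 + 3 * s * x2 - s * x3 ^+ 3 + s * x3 ^+ 2 + 3 * s * x3 + x1 * x2 ^+ 2 * x3 + 2 * x1 * x2 ^+ 2 + 3 * x1 * x2 * x3 ^+ 2 + 5 * x1 * x2 * x3 - 2 * x1 * x2 + 2 * x1 * x3 ^+ 3 + x1 * x3 ^+ 2 - 5 * x1 * x3 - x1 + 2 * x2 ^+ 3 + 4 * x2 ^+ 2 * x3 - 3 * x2 ^+ 2 + x2 * x3 ^+ 2 - 10 * x2 * x3 - 3 * x2 - x3 ^+ 3 - 5 * x3 ^+ 2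 + x3 + 2).
Definition m2e7 : pexpr := (PA (PA (PA (PA (PA (PA (PA (PA (PA (PA (PA (PA (PA (PA (PA (PA (PA (PA (PA (PA (PA (PA (PA (PA (PA (PA (PA (PA (PA (PA (PA (PA (PA (PM (PM (PM (PV 0) (PV 1)) (PX (PV 2) 2)) (PV 3)) (PM (PM (PM (PV 0) (PV 1)) (PV 2)) (PX (PV 3) 2))) (PN (PM (PM (PM (PM (PC 3) (PV 0)) (PV 1)) (PV 2)) (PV 3)))) (PN (PM (PM (PM (PC 2) (PV 0)) (PV 1)) (PV 2)))) (PN (PM (PM (PM (PC 3) (PV 0)) (PV 1)) (PX (PV 3) 2)))) (PN (PM (PM (PV 0) (PV 1)) (PV 3)))) (PM (PV 0) (PV 1))) (PN (PM (PM (PM (PC 2) (PV 0)) (PX (PV 2) 2)) (PV 3)))) (PN (PM (PM (PC 3) (PV 0)) (PX (PV 2) 2)))) (PN (PM (PM (PM (PC 3) (PV 0)) (PV 2)) (PX (PV 3) 2)))) (PN (PM (PM (PM (PC 2) (PV 0)) (PV 2)) (PV 3)))) (PM (PM (PC 3) (PV 0)) (PV 2))) (PN (PM (PV 0) (PX (PV 3) 3)))) (PM (PV 0) (PX (PV 3) 2))) (PM (PM (PC 3) (PV 0)) (PV 3))) (PM (PM (PV 1) (PX (PV 2) 2)) (PV 3))) (PM (PM (PC 2) (PV 1)) (PX (PV 2) 2))) (PM (PM (PM (PC 3) (PV 1)) (PV 2)) (PX (PV 3) 2))) (PM (PM (PM (PC 5) (PV 1)) (PV 2)) (PV 3))) (PN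 (PM (PM (PC 2) (PV 1)) (PV 2)))) (PM (PM (PC 2) (PV 1)) (PX (PV 3) 3))) (PM (PV 1) (PX (PV 3) 2))) (PN (PM (PM (PC 5) (PV 1)) (PV 3)))) (PN (PV 1))) (PM (PC 2) (PX (PV 2) 3))) (PM (PM (PC 4) (PX (PV 2) 2)) (PV 3))) (PN (PM (PC 3) (PX (PV 2) 2)))) (PM (PV 2) (PX (PV 3) 2))) (PN (PM (PM (PC 10) (PV 2)) (PV 3)))) (PN (PM (PC 3) (PV 2)))) (PN (PX (PV 3) 3))) (PN (PM (PC 5) (PX (PV 3) 2)))) (PV 3)) (PC 2)).
Lemma m2F7E {R : comNzRingType} (s a b c : R) : m2F7 s a b c = peval (env4 s a b c) m2e7.
Proof. by []. Qed.
Lemma m2F7_nz (C : numClosedFieldType) (t : C) : t ^+ 2 = -3 ->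
  m2F7 (FracField.tofrac (t%:P%:P%:P) : ratfun3 C) (indet1 C) (indet2 C) (indet3 C) != 0.
Proof.
move=> ht; rewrite m2F7E; apply: nz_via; rewrite -m2F7E.
rewrite (_ : m2F7 t 0 0 0 = (2)%:~R + (0)%:~R * t); last by rewrite /m2F7; ring.
exact: nz_lin.
Qed.
Definition m2F8 {R : comNzRingType} (s x1 x2 x3 : R) : R :=
  (s * x1 ^+ 3 * x2 * x3 ^+ 2 - 2 * s * x1 ^+ 3 * x3 ^+ 2 - s * x1 ^+ 3 * x3 + s * x1 ^+ 2 * x2 ^+ 2 * x3 ^+ 2 + s * x1 ^+ 2 * x2 ^+ 2 * x3 - 5 * s * x1 ^+ 2 * x2 * x3 ^+ 2 - 8 * s * x1 ^+ 2 * x2 * x3 - 2 * s * x1 ^+ 2 * x2 - 3 * s * x1 ^+ 2 * x3 ^+ 3 - 3 * s * x1 ^+ 2 * x3 ^+ 2 + 2 * s * x1 ^+ 2 * x3 + s * x1 ^+ 2 + s * x1 * x2 ^+ 3 * x3 - 2 * s * x1 * x2 ^+ 2 * x3 ^+ 2 - 11 * s * x1 * x2 ^+ 2 * x3 - 6 * s * x1 * x2 ^+ 2 - 2 * s * x1 * x2 * x3 ^+ 3 - 8 * s * x1 * x2 * x3 ^+ 2 + 3 * s * x1 * x2 * x3 + 6 * s * x1 * x2 + s * x1 * x3 ^+ 3 + 8 * s * x1 * x3 ^+ 2 + 6 * s * x1 * x3 - 3 * s * x2 ^+ 3 * x3 - 4 * s * x2 ^+ 3 - 3 * s * x2 ^+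 2 * x3 ^+ 2 + 6 * s * x2 ^+ 2 + 6 * s * x2 * x3 ^+ 2 + 9 * s * x2 * x3 + s * x3 ^+ 3 - 3 * s * x3 - s + x1 ^+ 3 * x2 * x3 ^+ 2 + 2 * x1 ^+ 3 * x2 * x3 + 2 * x1 ^+ 3 * x3 ^+ 3 + 2 * x1 ^+ 3 * x3 ^+ 2 - x1 ^+ 3 * x3 + x1 ^+ 2 * x2 ^+ 2 * x3 ^+ 2 + 5 * x1 ^+ 2 * x2 ^+ 2 * x3 + 2 * x1 ^+ 2 * x2 ^+ 2 + 2 * x1 ^+ 2 * x2 * x3 ^+ 3 + 9 * x1 ^+ 2 * x2 * x3 ^+ 2 - 2 * x1 ^+ 2 * x2 - x1 ^+ 2 * x3 ^+ 3 - 11 * x1 ^+ 2 * x3 ^+ 2 - 8 * x1 ^+ 2 * x3 - x1 ^+ 2 + 3 * x1 * x2 ^+ 3 * x3 + 4 * x1 * x2 ^+ 3 + 6 * x1 * x2 ^+ 2 * x3 ^+ 2 + 5 * x1 * x2 ^+ 2 * x3 - 6 * x1 * x2 ^+ 2 - 16 * x1 * x2 * x3 ^+ 2 - 29 * x1 * x2 * x3 - 6 * x1 * x2 - 5 * x1 * x3 ^+ 3 - 4 * x1 * x3 ^+ 2 + 8 * x1 * x3 + 4 * x1 + 2 * x2 ^+ 4 + 3 * x2 ^+ 3 * x3 - 4 * x2 ^+ 3 - 3 * x2 ^+ 2 * x3 ^+ 2 - 18 * x2 ^+ 2 * x3 - 6 * x2 ^+ 2 - 2 * x2 * x3 ^+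 3 - 6 * x2 * x3 ^+ 2 + 9 * x2 * x3 + 8 * x2 + x3 ^+ 3 + 6 * x3 ^+ 2 + 3 * x3 - 1).
Definition m2e8 : pexpr := (PA (PA (PA (PA (PA (PA (PA (PA (PA (PA (PA (PA (PA (PA (PA (PA (PA (PA (PA (PA (PA (PA (PA (PA (PA (PA (PA (PA (PA (PA (PA (PA (PA (PA (PA (PA (PA (PA (PA (PA (PA (PA (PA (PA (PA (PA (PA (PA (PA (PA (PA (PA (PA (PA (PA (PA (PA (PA (PA (PA (PA (PA (PA (PA (PA (PA (PA (PA (PA (PA (PA (PA (PM (PM (PM (PV 0) (PX (PV 1) 3)) (PV 2)) (PX (PV 3) 2)) (PN (PM (PM (PM (PC 2) (PV 0)) (PX (PV 1) 3)) (PX (PV 3) 2)))) (PN (PM (PM (PV 0) (PX (PV 1) 3)) (PV 3)))) (PM (PM (PM (PV 0) (PX (PV 1) 2)) (PX (PV 2) 2)) (PX (PV 3) 2))) (PM (PM (PM (PV 0) (PX (PV 1) 2)) (PX (PV 2) 2)) (PV 3))) (PN (PM (PM (PM (PM (PC 5) (PV 0)) (PX (PV 1) 2)) (PV 2)) (PX (PV 3) 2)))) (PN (PM (PM (PM (PM (PC 8) (PV 0)) (PX (PV 1) 2)) (PV 2)) (PV 3)))) (PN (PM (PM (PM (PC 2) (PV 0)) (PX (PV 1) 2)) (PV 2)))) (PN (PM (PM (PM (PC 3) (PV 0)) (PX (PV 1) 2)) (PX (PV 3) 3)))) (PN (PM (PM (PM (PC 3) (PV 0)) (PX (PV 1) 2))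 (PX (PV 3) 2)))) (PM (PM (PM (PC 2) (PV 0)) (PX (PV 1) 2)) (PV 3))) (PM (PV 0) (PX (PV 1) 2))) (PM (PM (PM (PV 0) (PV 1)) (PX (PV 2) 3)) (PV 3))) (PN (PM (PM (PM (PM (PC 2) (PV 0)) (PV 1)) (PX (PV 2) 2)) (PX (PV 3) 2)))) (PN (PM (PM (PM (PM (PC 11) (PV 0)) (PV 1)) (PX (PV 2) 2)) (PV 3)))) (PN (PM (PM (PM (PC 6) (PV 0)) (PV 1)) (PX (PV 2) 2)))) (PN (PM (PM (PM (PM (PC 2) (PV 0)) (PV 1)) (PV 2)) (PX (PV 3) 3)))) (PN (PM (PM (PM (PM (PC 8) (PV 0)) (PV 1)) (PV 2)) (PX (PV 3) 2)))) (PM (PM (PM (PM (PC 3) (PV 0)) (PV 1)) (PV 2)) (PV 3))) (PM (PM (PM (PC 6) (PV 0)) (PV 1)) (PV 2))) (PM (PM (PV 0) (PV 1)) (PX (PV 3) 3))) (PM (PM (PM (PC 8) (PV 0)) (PV 1)) (PX (PV 3) 2))) (PM (PM (PM (PC 6) (PV 0)) (PV 1)) (PV 3))) (PN (PM (PM (PM (PC 3) (PV 0)) (PX (PV 2) 3)) (PV 3)))) (PN (PM (PM (PC 4) (PV 0)) (PX (PV 2) 3)))) (PN (PM (PM (PM (PC 3) (PV 0)) (PX (PV 2) 2)) (PX (PV 3) 2)))) (PM (PM (PC 6) (PV 0)) (PX (PV 2) 2))) (PM (PM (PM (PC 6) (PV 0)) (PV 2)) (PX (PV 3) 2))) (PM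 (PM (PM (PC 9) (PV 0)) (PV 2)) (PV 3))) (PM (PV 0) (PX (PV 3) 3))) (PN (PM (PM (PC 3) (PV 0)) (PV 3)))) (PN (PV 0))) (PM (PM (PX (PV 1) 3) (PV 2)) (PX (PV 3) 2))) (PM (PM (PM (PC 2) (PX (PV 1) 3)) (PV 2)) (PV 3))) (PM (PM (PC 2) (PX (PV 1) 3)) (PX (PV 3) 3))) (PM (PM (PC 2) (PX (PV 1) 3)) (PX (PV 3) 2))) (PN (PM (PX (PV 1) 3) (PV 3)))) (PM (PM (PX (PV 1) 2) (PX (PV 2) 2)) (PX (PV 3) 2))) (PM (PM (PM (PC 5) (PX (PV 1) 2)) (PX (PV 2) 2)) (PV 3))) (PM (PM (PC 2) (PX (PV 1) 2)) (PX (PV 2) 2))) (PM (PM (PM (PC 2) (PX (PV 1) 2)) (PV 2)) (PX (PV 3) 3))) (PM (PM (PM (PC 9) (PX (PV 1) 2)) (PV 2)) (PX (PV 3) 2))) (PN (PM (PM (PC 2) (PX (PV 1) 2)) (PV 2)))) (PN (PM (PX (PV 1) 2) (PX (PV 3) 3)))) (PN (PM (PM (PC 11) (PX (PV 1) 2)) (PX (PV 3) 2)))) (PN (PM (PM (PC 8) (PX (PV 1) 2)) (PV 3)))) (PN (PX (PV 1) 2))) (PM (PM (PM (PC 3) (PV 1)) (PX (PV 2) 3)) (PV 3))) (PM (PM (PC 4) (PV 1)) (PX (PV 2) 3))) (PM (PM (PM (PC 6) (PV 1)) (PX (PV 2) 2)) (PX (PV 3) 2))) (PM (PM (PM (PC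 5) (PV 1)) (PX (PV 2) 2)) (PV 3))) (PN (PM (PM (PC 6) (PV 1)) (PX (PV 2) 2)))) (PN (PM (PM (PM (PC 16) (PV 1)) (PV 2)) (PX (PV 3) 2)))) (PN (PM (PM (PM (PC 29) (PV 1)) (PV 2)) (PV 3)))) (PN (PM (PM (PC 6) (PV 1)) (PV 2)))) (PN (PM (PM (PC 5) (PV 1)) (PX (PV 3) 3)))) (PN (PM (PM (PC 4) (PV 1)) (PX (PV 3) 2)))) (PM (PM (PC 8) (PV 1)) (PV 3))) (PM (PC 4) (PV 1))) (PM (PC 2) (PX (PV 2) 4))) (PM (PM (PC 3) (PX (PV 2) 3)) (PV 3))) (PN (PM (PC 4) (PX (PV 2) 3)))) (PN (PM (PM (PC 3) (PX (PV 2) 2)) (PX (PV 3) 2)))) (PN (PM (PM (PC 18) (PX (PV 2) 2)) (PV 3)))) (PN (PM (PC 6) (PX (PV 2) 2)))) (PN (PM (PM (PC 2) (PV 2)) (PX (PV 3) 3)))) (PN (PM (PM (PC 6) (PV 2)) (PX (PV 3) 2)))) (PM (PM (PC 9) (PV 2)) (PV 3))) (PM (PC 8) (PV 2))) (PX (PV 3) 3)) (PM (PC 6) (PX (PV 3) 2))) (PM (PC 3) (PV 3))) (PN P1)).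
Lemma m2F8E {R : comNzRingType} (s a b c : R) : m2F8 s a b c = peval (env4 s a b c) m2e8.
Proof. by []. Qed.
Lemma m2F8_nz (C : numClosedFieldType) (t : C) : t ^+ 2 = -3 ->
  m2F8 (FracField.tofrac (t%:P%:P%:P) : ratfun3 C) (indet1 C) (indet2 C) (indet3 C) != 0.
Proof.
move=> ht; rewrite m2F8E; apply: nz_via; rewrite -m2F8E.
rewrite (_ : m2F8 t 0 0 0 = (-1)%:~R + (-1)%:~R * t); last by rewrite /m2F8; ring.
exact: nz_lin.
Qed.
Definition m2F9 {R : comNzRingType} (s x1 x2 x3 : R) : R :=
  (s * x1 ^+ 2 * x2 - s * x1 ^+ 2 + s * x1 * x2 ^+ 2 - s * x1 * x2 * x3 - 4 * s * x1 * x2 - 2 * s * x1 * x3 - s * x2 ^+ 2 * x3 - 3 * s * x2 ^+ 2 - s * x2 * x3 + s * x2 + s * x3 + s + x1 ^+ 2 * x2 + 2 * x1 ^+ 2 * x3 + x1 ^+ 2 + 3 * x1 * x2 ^+ 2 + 3 * x1 * x2 * x3 + 2 * x1 * x2 - 2 * x1 * x3 - 4 * x1 + 2 * x2 ^+ 3 + x2 ^+ 2 * x3 - x2 ^+ 2 - 3 * x2 * x3 - 5 * x2 - x3 + 1).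
Definition m2e9 : pexpr := (PA (PA (PA (PA (PA (PA (PA (PA (PA (PA (PA (PA (PA (PA (PA (PA (PA (PA (PA (PA (PA (PA (PA (PA (PA (PA (PM (PM (PV 0) (PX (PV 1) 2)) (PV 2)) (PN (PM (PV 0) (PX (PV 1) 2)))) (PM (PM (PV 0) (PV 1)) (PX (PV 2) 2))) (PN (PM (PM (PM (PV 0) (PV 1)) (PV 2)) (PV 3)))) (PN (PM (PM (PM (PC 4) (PV 0)) (PV 1)) (PV 2)))) (PN (PM (PM (PM (PC 2) (PV 0)) (PV 1)) (PV 3)))) (PN (PM (PM (PV 0) (PX (PV 2) 2)) (PV 3)))) (PN (PM (PM (PC 3) (PV 0)) (PX (PV 2) 2)))) (PN (PM (PM (PV 0) (PV 2)) (PV 3)))) (PM (PV 0) (PV 2))) (PM (PV 0) (PV 3))) (PV 0)) (PM (PX (PV 1) 2) (PV 2))) (PM (PM (PC 2) (PX (PV 1) 2)) (PV 3))) (PX (PV 1) 2)) (PM (PM (PC 3) (PV 1)) (PX (PV 2) 2))) (PM (PM (PM (PC 3) (PV 1)) (PV 2)) (PV 3))) (PM (PM (PC 2) (PV 1)) (PV 2))) (PN (PM (PM (PC 2) (PV 1)) (PV 3)))) (PN (PM (PC 4) (PV 1)))) (PM (PC 2) (PX (PV 2) 3))) (PM (PX (PV 2) 2) (PV 3))) (PN (PX (PV 2) 2))) (PN (PM (PM (PC 3) (PV 2)) (PV 3)))) (PN (PM (PC 5) (PV 2)))) (PN (PV 3))) P1).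
Lemma m2F9E {R : comNzRingType} (s a b c : R) : m2F9 s a b c = peval (env4 s a b c) m2e9.
Proof. by []. Qed.
Lemma m2F9_nz (C : numClosedFieldType) (t : C) : t ^+ 2 = -3 ->
  m2F9 (FracField.tofrac (t%:P%:P%:P) : ratfun3 C) (indet1 C) (indet2 C) (indet3 C) != 0.
Proof.
move=> ht; rewrite m2F9E; apply: nz_via; rewrite -m2F9E.
rewrite (_ : m2F9 t 0 0 0 = (1)%:~R + (1)%:~R * t); last by rewrite /m2F9; ring.
exact: nz_lin.
Qed.
Ltac nzr2 hn h3 h4 h5 h6 h7 h8 h9 := repeat (apply/andP; split);
  repeat first [ assumption | (apply: (neq0_ring h3); ring) | (apply: (neq0_ring h4); ring) | (apply: (neq0_ring h5); ring) | (apply: (neq0_ring h6); ring) | (apply: (neq0_ring h7); ring) | (apply: (neq0_ring h8); ring) | (apply: (neq0_ring h9); ring) | apply: mulf_neq0 | apply: invr_neq0 | apply: hn | apply: expf_neq0 ].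
Definition m2wb {K : fieldType} (s x1 x2 x3 : K) (n : nat) : K :=
  match n with
  | 0%N => x1
  | 1%N => x2
  | 2%N => x3
  | 3%N => (m2F3 s x1 x2 x3) / (2 * x1)
  | 4%N => (m2F4 s x1 x2 x3) / (2 * x1 * x2)
  | 5%N => (m2F5 s x1 x2 x3) / (2 * x1 * x2 * x3)
  | 6%N => (m2F6 s x1 x2 x3) / (x2 * x3 * (m2F3 s x1 x2 x3))
  | 7%N => 2 * (m2F7 s x1 x2 x3) / (x3 * (m2F3 s x1 x2 x3) * (m2F4 s x1 x2 x3))
  | 8%N => 4 * (m2F8 s x1 x2 x3) / ((m2F3 s x1 x2 x3) * (m2F4 s x1 x2 x3) * (m2F5 s x1 x2 x3))
  | 9%N => 2 * (m2F7 s x1 x2 x3) * (m2F9 s x1 x2 x3) / ((m2F4 s x1 x2 x3) * (m2F5 s x1 x2 x3) * (m2F6 s x1 x2 x3))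
  | 10%N => 2 * (m2F8 s x1 x2 x3) / ((m2F5 s x1 x2 x3) * (m2F6 s x1 x2 x3))
  | 11%N => (m2F9 s x1 x2 x3) / ((m2F6 s x1 x2 x3))
  | 12%N => x1 | 13%N => x2 | 14%N => x3 | _ => 0 end.

Lemma m2_gen (K : fieldType) (N D : K -> K -> K -> K) (s x1 x2 x3 : K) :
  s ^+ 2 = -3 -> (forall n : nat, (n.+1)%:R != 0 :> K) ->
  x1 != 0 -> x2 != 0 -> x3 != 0 -> (m2F3 s x1 x2 x3) != 0 -> (m2F4 s x1 x2 x3) != 0 -> (m2F5 s x1 x2 x3) != 0 -> (m2F6 s x1 x2 x3) != 0 -> (m2F7 s x1 x2 x3) != 0 -> (m2F8 s x1 x2 x3) != 0 -> (m2F9 s x1 x2 x3) != 0 ->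
  (forall a b c, N a b c = (1 + s) * a + 2 * b + (1 - s) * c + (-1 - s)) ->
  (forall a b c, D a b c = 2 * a) -> periodic3 N D x1 x2 x3 12.
Proof.
move=> hs hn h0 h1 h2 h3 h4 h5 h6 h7 h8 h9 hN hD.
apply: (@periodic_from_w _ N D x1 x2 x3 (m2wb s x1 x2 x3)) => //.
  move=> m hm; do 12 (case: m hm => [_|m hm]; first by rewrite /=; nzt hn).
  done.
move: h3 h4 h5 h6 h7 h8 h9; rewrite /m2F3 /m2F4 /m2F5 /m2F6 /m2F7 /m2F8 /m2F9 => h3 h4 h5 h6 h7 h8 h9.
move=> m hm; rewrite hN.
case: m hm => [|[|[|[|[|[|[|[|[|[|[|[|m]]]]]]]]]]]] hm //.
- rewrite /=.
  refine (@eq_via _ s _ _ (0) (2) hs _).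
  by rewrite /m2F3 /m2F4 /m2F5 /m2F6 /m2F7 /m2F8 /m2F9; field; nzr2 hn h3 h4 h5 h6 h7 h8 h9.
- rewrite /=.
  refine (@eq_via _ s _ _ ((x1 - x3 - 1)) (4 * x1 * x2) hs _).
  by rewrite /m2F3 /m2F4 /m2F5 /m2F6 /m2F7 /m2F8 /m2F9; field; nzr2 hn h3 h4 h5 h6 h7 h8 h9.
- rewrite /=.
  refine (@eq_via _ s _ _ ((x1 * x2 - x1 - x2 - x3)) (4 * x1 * x2 * x3) hs _).
  by rewrite /m2F3 /m2F4 /m2F5 /m2F6 /m2F7 /m2F8 /m2F9; field; nzr2 hn h3 h4 h5 h6 h7 h8 h9.
- rewrite /=.
  refine (@eq_via _ s _ _ ((- x1 * x3 - x1 + x2 * x3 ^+ 2 - 2 * x2 + 1)) (2 * x2 * x3 * (m2F3 s x1 x2 x3)) hs _).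
  by rewrite /m2F3 /m2F4 /m2F5 /m2F6 /m2F7 /m2F8 /m2F9; field; nzr2 hn h3 h4 h5 h6 h7 h8 h9.
- rewrite /=.
  refine (@eq_via _ s _ _ ((- s * x1 ^+ 2 * x2 * x3 + s * x1 ^+ 2 * x3 + s * x1 * x2 * x3 ^+ 2 + 2 * s * x1 * x2 * x3 - s * x1 * x3 - s * x2 * x3 ^+ 2 - s * x2 * x3 - s * x3 ^+ 3 - s * x3 ^+ 2 - x1 ^+ 2 * x2 * x3 - 2 * x1 ^+ 2 * x2 - 2 * x1 ^+ 2 * x3 ^+ 2 - x1 ^+ 2 * x3 + 2 * x1 ^+ 2 - 2 * x1 * x2 ^+ 2 + x1 * x2 * x3 ^+ 2 + 2 * x1 * x2 * x3 + 4 * x1 * x2 + 2 * x1 * x3 ^+ 3 + 2 * x1 * x3 ^+ 2 - x1 * x3 - 2 * x1 + 2 * x2 ^+ 2 * x3 + x2 * x3 ^+ 2 - 7 * x2 * x3 - 4 * x2 - x3 ^+ 3 - 5 * x3 ^+ 2 + 2)) (2 * x3 * (m2F3 s x1 x2 x3) * (m2F4 s x1 x2 x3)) hs _).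
  by rewrite /m2F3 /m2F4 /m2F5 /m2F6 /m2F7 /m2F8 /m2F9; field; nzr2 hn h3 h4 h5 h6 h7 h8 h9.
- rewrite /=.
  refine (@eq_via _ s _ _ ((- s ^+ 2 * x1 ^+ 3 * x2 ^+ 2 * x3 + 2 * s ^+ 2 * x1 ^+ 3 * x2 * x3 + s ^+ 2 * x1 ^+ 3 * x2 - s ^+ 2 * x1 ^+ 3 * x3 - s ^+ 2 * x1 ^+ 3 + s ^+ 2 * x1 ^+ 2 * x2 ^+ 2 * x3 ^+ 2 + 3 * s ^+ 2 * x1 ^+ 2 * x2 ^+ 2 * x3 + 2 * s ^+ 2 * x1 ^+ 2 * x2 ^+ 2 - s ^+ 2 * x1 ^+ 2 * x2 * x3 ^+ 2 - 5 * s ^+ 2 * x1 ^+ 2 * x2 * x3 - 5 * s ^+ 2 * x1 ^+ 2 * x2 + s ^+ 2 * x1 ^+ 2 * x3 + 2 * s ^+ 2 * x1 ^+ 2 - 2 * s ^+ 2 * x1 * x2 ^+ 2 * x3 ^+ 2 - 5 * s ^+ 2 * x1 * x2 ^+ 2 * x3 - 4 * s ^+ 2 * x1 * x2 ^+ 2 - s ^+ 2 * x1 * x2 * x3 ^+ 3 + 4 * s ^+ 2 * x1 * x2 * x3 + 5 * s ^+ 2 * x1 * x2 + s ^+ 2 * x1 * x3 ^+ 3 + 2 * s ^+ 2 * x1 * x3 ^+ 2 + s ^+ 2 * x1 * x3 - s ^+ 2 * x1 + s ^+ 2 * x2 ^+ 2 * x3 ^+ 2 + 3 * s ^+ 2 *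 x2 ^+ 2 * x3 + 2 * s ^+ 2 * x2 ^+ 2 + s ^+ 2 * x2 * x3 ^+ 3 + 3 * s ^+ 2 * x2 * x3 ^+ 2 + s ^+ 2 * x2 * x3 - s ^+ 2 * x2 - s ^+ 2 * x3 ^+ 2 - s ^+ 2 * x3 - 2 * s * x1 ^+ 3 * x2 ^+ 2 * x3 - 2 * s * x1 ^+ 3 * x2 ^+ 2 - 2 * s * x1 ^+ 3 * x2 * x3 ^+ 2 + 2 * s * x1 ^+ 3 * x2 * x3 + 6 * s * x1 ^+ 3 * x2 + 2 * s * x1 ^+ 3 * x3 ^+ 2 + 2 * s * x1 ^+ 3 * x3 - 2 * s * x1 ^+ 3 - 2 * s * x1 ^+ 2 * x2 ^+ 3 * x3 - 2 * s * x1 ^+ 2 * x2 ^+ 3 + 10 * s * x1 ^+ 2 * x2 ^+ 2 * x3 + 16 * s * x1 ^+ 2 * x2 ^+ 2 + 2 * s * x1 ^+ 2 * x2 * x3 ^+ 3 + 8 * s * x1 ^+ 2 * x2 * x3 ^+ 2 + 2 * s * x1 ^+ 2 * x2 * x3 - 16 * s * x1 ^+ 2 * x2 - 2 * s * x1 ^+ 2 * x3 ^+ 3 - 8 * s * x1 ^+ 2 * x3 ^+ 2 - 12 * s * x1 ^+ 2 * x3 + 6 * s * x1 * x2 ^+ 3 * x3 + 8 * s * x1 * x2 ^+ 3 + 4 * s * x1 * x2 ^+ 2 * x3 ^+ 2 - 12 * s * x1 * x2 ^+ 2 * x3 - 24 * s * x1 * x2 ^+ 2 - 2 * s * x1 *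 x2 * x3 ^+ 3 - 22 * s * x1 * x2 * x3 ^+ 2 - 24 * s * x1 * x2 * x3 + 6 * s * x1 * x2 + 8 * s * x1 * x3 ^+ 2 + 16 * s * x1 * x3 + 4 * s * x1 - 4 * s * x2 ^+ 3 * x3 - 6 * s * x2 ^+ 3 - 6 * s * x2 ^+ 2 * x3 ^+ 2 - 6 * s * x2 ^+ 2 * x3 + 6 * s * x2 ^+ 2 + 10 * s * x2 * x3 ^+ 2 + 20 * s * x2 * x3 + 4 * s * x2 + 2 * s * x3 ^+ 3 + 2 * s * x3 ^+ 2 - 4 * s * x3 - 2 * s - x1 ^+ 3 * x2 ^+ 2 * x3 - 2 * x1 ^+ 3 * x2 ^+ 2 - 2 * x1 ^+ 3 * x2 * x3 ^+ 2 + x1 ^+ 3 * x2 + 2 * x1 ^+ 3 * x3 ^+ 2 + 3 * x1 ^+ 3 * x3 + 3 * x1 ^+ 3 - 2 * x1 ^+ 2 * x2 ^+ 3 * x3 - 6 * x1 ^+ 2 * x2 ^+ 3 - 5 * x1 ^+ 2 * x2 ^+ 2 * x3 ^+ 2 - 5 * x1 ^+ 2 * x2 ^+ 2 * x3 + 10 * x1 ^+ 2 * x2 ^+ 2 - 2 * x1 ^+ 2 * x2 * x3 ^+ 3 + 13 * x1 ^+ 2 * x2 * x3 ^+ 2 + 27 * x1 ^+ 2 * x2 * x3 + 9 * x1 ^+ 2 * x2 + 2 * x1 ^+ 2 * x3 ^+ 3 - 12 * x1 ^+ 2 * x3 ^+ 2 - 21 * x1 ^+ 2 * x3 - 10 *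 x1 ^+ 2 - 4 * x1 * x2 ^+ 4 - 2 * x1 * x2 ^+ 3 * x3 + 12 * x1 * x2 ^+ 3 + 10 * x1 * x2 ^+ 2 * x3 ^+ 2 + 33 * x1 * x2 ^+ 2 * x3 + 4 * x1 * x2 ^+ 2 + 3 * x1 * x2 * x3 ^+ 3 - 22 * x1 * x2 * x3 ^+ 2 - 72 * x1 * x2 * x3 - 35 * x1 * x2 - 13 * x1 * x3 ^+ 3 - 18 * x1 * x3 ^+ 2 + 11 * x1 * x3 + 13 * x1 + 4 * x2 ^+ 4 + 8 * x2 ^+ 3 * x3 - 6 * x2 ^+ 3 - 7 * x2 ^+ 2 * x3 ^+ 2 - 45 * x2 ^+ 2 * x3 - 20 * x2 ^+ 2 - 5 * x2 * x3 ^+ 3 - 17 * x2 * x3 ^+ 2 + 19 * x2 * x3 + 21 * x2 + 2 * x3 ^+ 3 + 15 * x3 ^+ 2 + 9 * x3 - 2)) (2 * (m2F3 s x1 x2 x3) * (m2F4 s x1 x2 x3) * (m2F5 s x1 x2 x3)) hs _).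
  by rewrite /m2F3 /m2F4 /m2F5 /m2F6 /m2F7 /m2F8 /m2F9; field; nzr2 hn h3 h4 h5 h6 h7 h8 h9.
- rewrite /=.
  refine (@eq_via _ s _ _ ((s ^+ 2 * x1 ^+ 3 * x2 ^+ 3 * x3 + 2 * s ^+ 2 * x1 ^+ 3 * x2 ^+ 2 * x3 ^+ 2 - 2 * s ^+ 2 * x1 ^+ 3 * x2 ^+ 2 * x3 - s ^+ 2 * x1 ^+ 3 * x2 ^+ 2 - 4 * s ^+ 2 * x1 ^+ 3 * x2 * x3 ^+ 2 - s ^+ 2 * x1 ^+ 3 * x2 * x3 + s ^+ 2 * x1 ^+ 3 * x2 + 2 * s ^+ 2 * x1 ^+ 3 * x3 ^+ 2 + 2 * s ^+ 2 * x1 ^+ 3 * x3 - s ^+ 2 * x1 ^+ 2 * x2 ^+ 4 * x3 ^+ 2 + s ^+ 2 * x1 ^+ 2 * x2 ^+ 4 * x3 - s ^+ 2 * x1 ^+ 2 * x2 ^+ 3 * x3 ^+ 3 + 4 * s ^+ 2 * x1 ^+ 2 * x2 ^+ 3 * x3 ^+ 2 - 3 * s ^+ 2 * x1 ^+ 2 * x2 ^+ 3 * x3 - 3 * s ^+ 2 * x1 ^+ 2 * x2 ^+ 3 + 3 * s ^+ 2 * x1 ^+ 2 * x2 ^+ 2 * x3 ^+ 3 - 10 * s ^+ 2 * x1 ^+ 2 * x2 ^+ 2 * x3 ^+ 2 - 5 * s ^+ 2 * x1 ^+ 2 * x2 ^+ 2 * x3 + 5 * s ^+ 2 * x1 ^+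 2 * x2 ^+ 2 - 5 * s ^+ 2 * x1 ^+ 2 * x2 * x3 ^+ 3 + 7 * s ^+ 2 * x1 ^+ 2 * x2 * x3 ^+ 2 + 14 * s ^+ 2 * x1 ^+ 2 * x2 * x3 + 3 * s ^+ 2 * x1 ^+ 2 * x3 ^+ 3 + 2 * s ^+ 2 * x1 ^+ 2 * x3 ^+ 2 - 4 * s ^+ 2 * x1 ^+ 2 * x3 - s ^+ 2 * x1 ^+ 2 + 2 * s ^+ 2 * x1 * x2 ^+ 4 * x3 ^+ 2 - 2 * s ^+ 2 * x1 * x2 ^+ 4 + 3 * s ^+ 2 * x1 * x2 ^+ 3 * x3 ^+ 3 - 5 * s ^+ 2 * x1 * x2 ^+ 3 * x3 ^+ 2 - 5 * s ^+ 2 * x1 * x2 ^+ 3 * x3 + 6 * s ^+ 2 * x1 * x2 ^+ 3 + s ^+ 2 * x1 * x2 ^+ 2 * x3 ^+ 4 - 7 * s ^+ 2 * x1 * x2 ^+ 2 * x3 ^+ 3 + 3 * s ^+ 2 * x1 * x2 ^+ 2 * x3 ^+ 2 + 20 * s ^+ 2 * x1 * x2 ^+ 2 * x3 - 2 * s ^+ 2 * x1 * x2 * x3 ^+ 4 + 6 * s ^+ 2 * x1 * x2 * x3 ^+ 3 + 10 * s ^+ 2 * x1 * x2 * x3 ^+ 2 - 11 * s ^+ 2 * x1 * x2 * x3 - 4 * s ^+ 2 * x1 * x2 + s ^+ 2 * x1 * x3 ^+ 4 - 5 * s ^+ 2 * x1 * x3 ^+ 2 + s ^+ 2 * x1 -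 s ^+ 2 * x2 ^+ 4 * x3 ^+ 2 - s ^+ 2 * x2 ^+ 4 * x3 + 2 * s ^+ 2 * x2 ^+ 4 - 2 * s ^+ 2 * x2 ^+ 3 * x3 ^+ 3 - s ^+ 2 * x2 ^+ 3 * x3 ^+ 2 + 7 * s ^+ 2 * x2 ^+ 3 * x3 - s ^+ 2 * x2 ^+ 3 - s ^+ 2 * x2 ^+ 2 * x3 ^+ 4 + s ^+ 2 * x2 ^+ 2 * x3 ^+ 3 + 7 * s ^+ 2 * x2 ^+ 2 * x3 ^+ 2 - 6 * s ^+ 2 * x2 ^+ 2 * x3 - 2 * s ^+ 2 * x2 ^+ 2 + s ^+ 2 * x2 * x3 ^+ 4 + 2 * s ^+ 2 * x2 * x3 ^+ 3 - 6 * s ^+ 2 * x2 * x3 ^+ 2 - s ^+ 2 * x2 * x3 + s ^+ 2 * x2 - s ^+ 2 * x3 ^+ 3 + s ^+ 2 * x3 ^+ 2 + s ^+ 2 * x3 + 2 * s * x1 ^+ 3 * x2 ^+ 3 * x3 + 2 * s * x1 ^+ 3 * x2 ^+ 3 - 2 * s * x1 ^+ 3 * x2 ^+ 2 * x3 ^+ 3 + 8 * s * x1 ^+ 3 * x2 ^+ 2 * x3 ^+ 2 + 6 * s * x1 ^+ 3 * x2 ^+ 2 * x3 - 4 * s * x1 ^+ 3 * x2 ^+ 2 + 8 * s * x1 ^+ 3 * x2 * x3 ^+ 3 - 4 * s * x1 ^+ 3 * x2 * x3 ^+ 2 - 18 * s * x1 ^+ 3 * x2 * x3 - 2 * s * x1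 ^+ 3 * x2 - 6 * s * x1 ^+ 3 * x3 ^+ 3 - 8 * s * x1 ^+ 3 * x3 ^+ 2 + 4 * s * x1 ^+ 3 * x3 + 2 * s * x1 ^+ 3 - 2 * s * x1 ^+ 2 * x2 ^+ 4 * x3 ^+ 2 + 4 * s * x1 ^+ 2 * x2 ^+ 4 - 6 * s * x1 ^+ 2 * x2 ^+ 3 * x3 ^+ 3 + 4 * s * x1 ^+ 2 * x2 ^+ 3 * x3 ^+ 2 + 16 * s * x1 ^+ 2 * x2 ^+ 3 * x3 - 12 * s * x1 ^+ 2 * x2 ^+ 3 - 2 * s * x1 ^+ 2 * x2 ^+ 2 * x3 ^+ 4 + 18 * s * x1 ^+ 2 * x2 ^+ 2 * x3 ^+ 3 + 6 * s * x1 ^+ 2 * x2 ^+ 2 * x3 ^+ 2 - 64 * s * x1 ^+ 2 * x2 ^+ 2 * x3 - 10 * s * x1 ^+ 2 * x2 ^+ 2 + 6 * s * x1 ^+ 2 * x2 * x3 ^+ 4 - 22 * s * x1 ^+ 2 * x2 * x3 ^+ 3 - 56 * s * x1 ^+ 2 * x2 * x3 ^+ 2 + 30 * s * x1 ^+ 2 * x2 * x3 + 22 * s * x1 ^+ 2 * x2 - 4 * s * x1 ^+ 2 * x3 ^+ 4 + 32 * s * x1 ^+ 2 * x3 ^+ 2 + 12 * s * x1 ^+ 2 * x3 - 4 * s * x1 ^+ 2 - 2 * s * x1 * x2 ^+ 5 * x3 + 2 * s * x1 * x2 ^+ 5 - 2 * s * x1 * x2 ^+ 4 * x3 ^+ 2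 + 12 * s * x1 * x2 ^+ 4 * x3 - 10 * s * x1 * x2 ^+ 4 + 8 * s * x1 * x2 ^+ 3 * x3 ^+ 3 + 24 * s * x1 * x2 ^+ 3 * x3 ^+ 2 - 48 * s * x1 * x2 ^+ 3 * x3 - 10 * s * x1 * x2 ^+ 3 + 6 * s * x1 * x2 ^+ 2 * x3 ^+ 4 - 4 * s * x1 * x2 ^+ 2 * x3 ^+ 3 - 74 * s * x1 * x2 ^+ 2 * x3 ^+ 2 + 34 * s * x1 * x2 ^+ 2 * x3 + 42 * s * x1 * x2 ^+ 2 - 10 * s * x1 * x2 * x3 ^+ 4 - 20 * s * x1 * x2 * x3 ^+ 3 + 76 * s * x1 * x2 * x3 ^+ 2 + 44 * s * x1 * x2 * x3 - 16 * s * x1 * x2 + 2 * s * x1 * x3 ^+ 4 + 18 * s * x1 * x3 ^+ 3 - 8 * s * x1 * x3 ^+ 2 - 22 * s * x1 * x3 - 2 * s * x1 + 2 * s * x2 ^+ 5 * x3 - 2 * s * x2 ^+ 5 + 6 * s * x2 ^+ 4 * x3 ^+ 2 - 8 * s * x2 ^+ 4 * x3 + 2 * s * x2 ^+ 3 * x3 ^+ 3 - 22 * s * x2 ^+ 3 * x3 ^+ 2 + 8 * s * x2 ^+ 3 * x3 + 16 * s * x2 ^+ 3 - 2 * s * x2 ^+ 2 * x3 ^+ 4 - 16 * s * x2 ^+ 2 * x3 ^+ 3 + 28 * s * x2 ^+ 2 * x3 ^+ 2 + 28 * s * x2 ^+ 2 * x3 - 10 * s * x2 ^+ 2 + 20 *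 s * x2 * x3 ^+ 3 - 28 * s * x2 * x3 - 4 * s * x2 + 2 * s * x3 ^+ 4 - 4 * s * x3 ^+ 3 - 6 * s * x3 ^+ 2 + 4 * s * x3 + 2 * s + x1 ^+ 3 * x2 ^+ 3 * x3 + 2 * x1 ^+ 3 * x2 ^+ 3 - 2 * x1 ^+ 3 * x2 ^+ 2 * x3 ^+ 3 + 2 * x1 ^+ 3 * x2 ^+ 2 * x3 ^+ 2 + 12 * x1 ^+ 3 * x2 ^+ 2 * x3 + x1 ^+ 3 * x2 ^+ 2 - 4 * x1 ^+ 3 * x2 * x3 ^+ 4 + 4 * x1 ^+ 3 * x2 * x3 ^+ 3 + 20 * x1 ^+ 3 * x2 * x3 ^+ 2 - x1 ^+ 3 * x2 * x3 - 3 * x1 ^+ 3 * x2 + 4 * x1 ^+ 3 * x3 ^+ 4 + 6 * x1 ^+ 3 * x3 ^+ 3 - 10 * x1 ^+ 3 * x3 ^+ 2 - 10 * x1 ^+ 3 * x3 - 2 * x1 ^+ 3 - x1 ^+ 2 * x2 ^+ 4 * x3 ^+ 2 - x1 ^+ 2 * x2 ^+ 4 * x3 + 4 * x1 ^+ 2 * x2 ^+ 4 - 5 * x1 ^+ 2 * x2 ^+ 3 * x3 ^+ 3 - 8 * x1 ^+ 2 * x2 ^+ 3 * x3 ^+ 2 + 23 * x1 ^+ 2 * x2 ^+ 3 * x3 + 7 * x1 ^+ 2 * x2 ^+ 3 - 6 * x1 ^+ 2 * x2 ^+ 2 * x3 ^+ 4 - 9 * x1 ^+ 2 * x2 ^+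 2 * x3 ^+ 3 + 40 * x1 ^+ 2 * x2 ^+ 2 * x3 ^+ 2 + x1 ^+ 2 * x2 ^+ 2 * x3 - 23 * x1 ^+ 2 * x2 ^+ 2 + 6 * x1 ^+ 2 * x2 * x3 ^+ 4 + 27 * x1 ^+ 2 * x2 * x3 ^+ 3 - 43 * x1 ^+ 2 * x2 * x3 ^+ 2 - 68 * x1 ^+ 2 * x2 * x3 - 2 * x1 ^+ 2 * x2 - 4 * x1 ^+ 2 * x3 ^+ 4 - 23 * x1 ^+ 2 * x3 ^+ 3 - 2 * x1 ^+ 2 * x3 ^+ 2 + 32 * x1 ^+ 2 * x3 + 9 * x1 ^+ 2 - 2 * x1 * x2 ^+ 5 * x3 + 2 * x1 * x2 ^+ 5 - 8 * x1 * x2 ^+ 4 * x3 ^+ 2 + 8 * x1 * x2 ^+ 4 * x3 + 8 * x1 * x2 ^+ 4 - 11 * x1 * x2 ^+ 3 * x3 ^+ 3 + 13 * x1 * x2 ^+ 3 * x3 ^+ 2 + 9 * x1 * x2 ^+ 3 * x3 - 32 * x1 * x2 ^+ 3 + x1 * x2 ^+ 2 * x3 ^+ 4 + 31 * x1 * x2 ^+ 2 * x3 ^+ 3 - 5 * x1 * x2 ^+ 2 * x3 ^+ 2 - 90 * x1 * x2 ^+ 2 * x3 + 2 * x1 * x2 ^+ 2 + 4 * x1 * x2 * x3 ^+ 4 - 26 * x1 * x2 * x3 ^+ 3 - 26 * x1 * x2 * x3 ^+ 2 + 87 * x1 * x2 * x3 + 32 * x1 * x2 - 3 * x1 * x3 ^+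 4 + 10 * x1 * x3 ^+ 3 + 29 * x1 * x3 ^+ 2 - 10 * x1 * x3 - 11 * x1 - 2 * x2 ^+ 5 * x3 + 2 * x2 ^+ 5 - 5 * x2 ^+ 4 * x3 ^+ 2 + 5 * x2 ^+ 4 * x3 - 10 * x2 ^+ 4 + 4 * x2 ^+ 3 * x3 ^+ 3 + 23 * x2 ^+ 3 * x3 ^+ 2 - 19 * x2 ^+ 3 * x3 + 5 * x2 ^+ 3 + 3 * x2 ^+ 2 * x3 ^+ 4 + 7 * x2 ^+ 2 * x3 ^+ 3 - 19 * x2 ^+ 2 * x3 ^+ 2 + 46 * x2 ^+ 2 * x3 + 20 * x2 ^+ 2 - x2 * x3 ^+ 4 - 2 * x2 * x3 ^+ 3 + 34 * x2 * x3 ^+ 2 - 7 * x2 * x3 - 13 * x2 + 2 * x3 ^+ 4 + 9 * x3 ^+ 3 - 3 * x3 ^+ 2 - x3 + 2)) (2 * (m2F4 s x1 x2 x3) * (m2F5 s x1 x2 x3) * (m2F6 s x1 x2 x3)) hs _).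
  by rewrite /m2F3 /m2F4 /m2F5 /m2F6 /m2F7 /m2F8 /m2F9; field; nzr2 hn h3 h4 h5 h6 h7 h8 h9.
- rewrite /=.
  refine (@eq_via _ s _ _ ((s ^+ 3 * x1 ^+ 4 * x2 ^+ 3 * x3 ^+ 3 - s ^+ 3 * x1 ^+ 4 * x2 ^+ 3 * x3 ^+ 2 - 4 * s ^+ 3 * x1 ^+ 4 * x2 ^+ 2 * x3 ^+ 3 + s ^+ 3 * x1 ^+ 4 * x2 ^+ 2 * x3 ^+ 2 + s ^+ 3 * x1 ^+ 4 * x2 ^+ 2 * x3 + 5 * s ^+ 3 * x1 ^+ 4 * x2 * x3 ^+ 3 + 2 * s ^+ 3 * x1 ^+ 4 * x2 * x3 ^+ 2 - s ^+ 3 * x1 ^+ 4 * x2 * x3 - 2 * s ^+ 3 * x1 ^+ 4 * x3 ^+ 3 - 2 * s ^+ 3 * x1 ^+ 4 * x3 ^+ 2 + s ^+ 3 * x1 ^+ 3 * x2 ^+ 4 * x3 ^+ 3 - s ^+ 3 * x1 ^+ 3 * x2 ^+ 4 * x3 ^+ 2 - s ^+ 3 * x1 ^+ 3 * x2 ^+ 3 * x3 ^+ 4 - 7 * s ^+ 3 * x1 ^+ 3 * x2 ^+ 3 * x3 ^+ 3 + 2 * s ^+ 3 * x1 ^+ 3 * x2 ^+ 3 * x3 ^+ 2 + 3 * s ^+ 3 * x1 ^+ 3 * x2 ^+ 3 * x3 + 2 * s ^+ 3 * x1 ^+ 3 * x2 ^+ 2 * x3 ^+ 4 + 18 * s ^+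 3 * x1 ^+ 3 * x2 ^+ 2 * x3 ^+ 3 + 8 * s ^+ 3 * x1 ^+ 3 * x2 ^+ 2 * x3 ^+ 2 - 6 * s ^+ 3 * x1 ^+ 3 * x2 ^+ 2 * x3 - 15 * s ^+ 3 * x1 ^+ 3 * x2 * x3 ^+ 3 - 17 * s ^+ 3 * x1 ^+ 3 * x2 * x3 ^+ 2 + s ^+ 3 * x1 ^+ 3 * x2 * x3 - s ^+ 3 * x1 ^+ 3 * x3 ^+ 4 + 2 * s ^+ 3 * x1 ^+ 3 * x3 ^+ 3 + 6 * s ^+ 3 * x1 ^+ 3 * x3 ^+ 2 + s ^+ 3 * x1 ^+ 3 * x3 - s ^+ 3 * x1 ^+ 2 * x2 ^+ 4 * x3 ^+ 4 - 2 * s ^+ 3 * x1 ^+ 2 * x2 ^+ 4 * x3 ^+ 3 + s ^+ 3 * x1 ^+ 2 * x2 ^+ 4 * x3 ^+ 2 + 2 * s ^+ 3 * x1 ^+ 2 * x2 ^+ 4 * x3 + 6 * s ^+ 3 * x1 ^+ 2 * x2 ^+ 3 * x3 ^+ 4 + 16 * s ^+ 3 * x1 ^+ 2 * x2 ^+ 3 * x3 ^+ 3 + 5 * s ^+ 3 * x1 ^+ 2 * x2 ^+ 3 * x3 ^+ 2 - 9 * s ^+ 3 * x1 ^+ 2 * x2 ^+ 3 * x3 + 2 * s ^+ 3 * x1 ^+ 2 * x2 ^+ 2 * x3 ^+ 5 - 6 * s ^+ 3 * x1 ^+ 2 * x2 ^+ 2 * x3 ^+ 4 - 32 * s ^+ 3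 * x1 ^+ 2 * x2 ^+ 2 * x3 ^+ 3 - 30 * s ^+ 3 * x1 ^+ 2 * x2 ^+ 2 * x3 ^+ 2 + 5 * s ^+ 3 * x1 ^+ 2 * x2 ^+ 2 * x3 - 4 * s ^+ 3 * x1 ^+ 2 * x2 * x3 ^+ 5 - 5 * s ^+ 3 * x1 ^+ 2 * x2 * x3 ^+ 4 + 13 * s ^+ 3 * x1 ^+ 2 * x2 * x3 ^+ 3 + 28 * s ^+ 3 * x1 ^+ 2 * x2 * x3 ^+ 2 + 4 * s ^+ 3 * x1 ^+ 2 * x2 * x3 + 2 * s ^+ 3 * x1 ^+ 2 * x3 ^+ 5 + 5 * s ^+ 3 * x1 ^+ 2 * x3 ^+ 4 + 3 * s ^+ 3 * x1 ^+ 2 * x3 ^+ 3 - 5 * s ^+ 3 * x1 ^+ 2 * x3 ^+ 2 - 2 * s ^+ 3 * x1 ^+ 2 * x3 + 2 * s ^+ 3 * x1 * x2 ^+ 4 * x3 ^+ 4 + 3 * s ^+ 3 * x1 * x2 ^+ 4 * x3 ^+ 3 - s ^+ 3 * x1 * x2 ^+ 4 * x3 ^+ 2 - 4 * s ^+ 3 * x1 * x2 ^+ 4 * x3 + s ^+ 3 * x1 * x2 ^+ 3 * x3 ^+ 5 - 8 * s ^+ 3 * x1 * x2 ^+ 3 * x3 ^+ 4 - 21 * s ^+ 3 * x1 * x2 ^+ 3 * x3 ^+ 3 - 12 * s ^+ 3 * x1 * x2 ^+ 3 * x3 ^+ 2 + 7 * s ^+ 3 * x1 * x2 ^+ 3 *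 x3 - 7 * s ^+ 3 * x1 * x2 ^+ 2 * x3 ^+ 5 - 4 * s ^+ 3 * x1 * x2 ^+ 2 * x3 ^+ 4 + 24 * s ^+ 3 * x1 * x2 ^+ 2 * x3 ^+ 3 + 32 * s ^+ 3 * x1 * x2 ^+ 2 * x3 ^+ 2 + 2 * s ^+ 3 * x1 * x2 ^+ 2 * x3 - s ^+ 3 * x1 * x2 * x3 ^+ 6 + 6 * s ^+ 3 * x1 * x2 * x3 ^+ 5 + 18 * s ^+ 3 * x1 * x2 * x3 ^+ 4 + 6 * s ^+ 3 * x1 * x2 * x3 ^+ 3 - 15 * s ^+ 3 * x1 * x2 * x3 ^+ 2 - 5 * s ^+ 3 * x1 * x2 * x3 + s ^+ 3 * x1 * x3 ^+ 6 + s ^+ 3 * x1 * x3 ^+ 5 - 4 * s ^+ 3 * x1 * x3 ^+ 4 - 6 * s ^+ 3 * x1 * x3 ^+ 3 + s ^+ 3 * x1 * x3 - s ^+ 3 * x2 ^+ 4 * x3 ^+ 4 - 2 * s ^+ 3 * x2 ^+ 4 * x3 ^+ 3 + s ^+ 3 * x2 ^+ 4 * x3 ^+ 2 + 2 * s ^+ 3 * x2 ^+ 4 * x3 - s ^+ 3 * x2 ^+ 3 * x3 ^+ 5 + s ^+ 3 * x2 ^+ 3 * x3 ^+ 4 + 11 * s ^+ 3 * x2 ^+ 3 * x3 ^+ 3 + 8 * s ^+ 3 * x2 ^+ 3 * x3 ^+ 2 - s ^+ 3 * x2 ^+ 3 * x3 + 4 * s ^+ 3 * x2 ^+ 2 *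 x3 ^+ 5 + 12 * s ^+ 3 * x2 ^+ 2 * x3 ^+ 4 + s ^+ 3 * x2 ^+ 2 * x3 ^+ 3 - 9 * s ^+ 3 * x2 ^+ 2 * x3 ^+ 2 - 2 * s ^+ 3 * x2 ^+ 2 * x3 + s ^+ 3 * x2 * x3 ^+ 6 + 2 * s ^+ 3 * x2 * x3 ^+ 5 - 6 * s ^+ 3 * x2 * x3 ^+ 4 - 8 * s ^+ 3 * x2 * x3 ^+ 3 + s ^+ 3 * x2 * x3 - s ^+ 3 * x3 ^+ 5 + 2 * s ^+ 3 * x3 ^+ 3 + s ^+ 3 * x3 ^+ 2 + 5 * s ^+ 2 * x1 ^+ 4 * x2 ^+ 3 * x3 ^+ 3 + s ^+ 2 * x1 ^+ 4 * x2 ^+ 3 * x3 ^+ 2 - 2 * s ^+ 2 * x1 ^+ 4 * x2 ^+ 3 * x3 + 4 * s ^+ 2 * x1 ^+ 4 * x2 ^+ 2 * x3 ^+ 4 - 14 * s ^+ 2 * x1 ^+ 4 * x2 ^+ 2 * x3 ^+ 3 - 19 * s ^+ 2 * x1 ^+ 4 * x2 ^+ 2 * x3 ^+ 2 + s ^+ 2 * x1 ^+ 4 * x2 ^+ 2 * x3 - 10 * s ^+ 2 * x1 ^+ 4 * x2 * x3 ^+ 4 - s ^+ 2 * x1 ^+ 4 * x2 * x3 ^+ 3 + 26 * s ^+ 2 * x1 ^+ 4 * x2 * x3 ^+ 2 + 7 * s ^+ 2 * x1 ^+ 4 * x2 * x3 + 6 * s ^+ 2 * x1 ^+ 4 * x3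 ^+ 4 + 12 * s ^+ 2 * x1 ^+ 4 * x3 ^+ 3 - 4 * s ^+ 2 * x1 ^+ 4 * x3 ^+ 2 - 4 * s ^+ 2 * x1 ^+ 4 * x3 + 5 * s ^+ 2 * x1 ^+ 3 * x2 ^+ 4 * x3 ^+ 3 + 3 * s ^+ 2 * x1 ^+ 3 * x2 ^+ 4 * x3 ^+ 2 - 4 * s ^+ 2 * x1 ^+ 3 * x2 ^+ 4 * x3 - s ^+ 2 * x1 ^+ 3 * x2 ^+ 3 * x3 ^+ 4 - 27 * s ^+ 2 * x1 ^+ 3 * x2 ^+ 3 * x3 ^+ 3 - 48 * s ^+ 2 * x1 ^+ 3 * x2 ^+ 3 * x3 ^+ 2 + 3 * s ^+ 2 * x1 ^+ 3 * x2 ^+ 3 * x3 - 4 * s ^+ 2 * x1 ^+ 3 * x2 ^+ 2 * x3 ^+ 5 - 16 * s ^+ 2 * x1 ^+ 3 * x2 ^+ 2 * x3 ^+ 4 + 10 * s ^+ 2 * x1 ^+ 3 * x2 ^+ 2 * x3 ^+ 3 + 118 * s ^+ 2 * x1 ^+ 3 * x2 ^+ 2 * x3 ^+ 2 + 40 * s ^+ 2 * x1 ^+ 3 * x2 ^+ 2 * x3 + 4 * s ^+ 2 * x1 ^+ 3 * x2 ^+ 2 + 6 * s ^+ 2 * x1 ^+ 3 * x2 * x3 ^+ 5 + 34 * s ^+ 2 * x1 ^+ 3 * x2 * x3 ^+ 4 + 83 * s ^+ 2 * x1 ^+ 3 * x2 * x3 ^+ 3 - 29 * s ^+ 2 * x1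 ^+ 3 * x2 * x3 ^+ 2 - 33 * s ^+ 2 * x1 ^+ 3 * x2 * x3 - 2 * s ^+ 2 * x1 ^+ 3 * x2 - 2 * s ^+ 2 * x1 ^+ 3 * x3 ^+ 5 + s ^+ 2 * x1 ^+ 3 * x3 ^+ 4 - 28 * s ^+ 2 * x1 ^+ 3 * x3 ^+ 3 - 10 * s ^+ 2 * x1 ^+ 3 * x3 ^+ 2 + 5 * s ^+ 2 * x1 ^+ 3 * x3 + 2 * s ^+ 2 * x1 ^+ 2 * x2 ^+ 5 * x3 ^+ 2 - 2 * s ^+ 2 * x1 ^+ 2 * x2 ^+ 5 * x3 - 5 * s ^+ 2 * x1 ^+ 2 * x2 ^+ 4 * x3 ^+ 4 - 10 * s ^+ 2 * x1 ^+ 2 * x2 ^+ 4 * x3 ^+ 3 - 25 * s ^+ 2 * x1 ^+ 2 * x2 ^+ 4 * x3 ^+ 2 - 4 * s ^+ 2 * x1 ^+ 2 * x2 ^+ 3 * x3 ^+ 5 + 14 * s ^+ 2 * x1 ^+ 2 * x2 ^+ 3 * x3 ^+ 4 + 44 * s ^+ 2 * x1 ^+ 2 * x2 ^+ 3 * x3 ^+ 3 + 111 * s ^+ 2 * x1 ^+ 2 * x2 ^+ 3 * x3 ^+ 2 + 59 * s ^+ 2 * x1 ^+ 2 * x2 ^+ 3 * x3 + 18 * s ^+ 2 * x1 ^+ 2 * x2 ^+ 3 + 28 * s ^+ 2 * x1 ^+ 2 * x2 ^+ 2 * x3 ^+ 5 + 50 * s ^+ 2 * x1 ^+ 2 * x2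 ^+ 2 * x3 ^+ 4 + 46 * s ^+ 2 * x1 ^+ 2 * x2 ^+ 2 * x3 ^+ 3 - 62 * s ^+ 2 * x1 ^+ 2 * x2 ^+ 2 * x3 ^+ 2 - 55 * s ^+ 2 * x1 ^+ 2 * x2 ^+ 2 * x3 - 16 * s ^+ 2 * x1 ^+ 2 * x2 ^+ 2 + 4 * s ^+ 2 * x1 ^+ 2 * x2 * x3 ^+ 6 - 22 * s ^+ 2 * x1 ^+ 2 * x2 * x3 ^+ 5 - 75 * s ^+ 2 * x1 ^+ 2 * x2 * x3 ^+ 4 - 117 * s ^+ 2 * x1 ^+ 2 * x2 * x3 ^+ 3 - 48 * s ^+ 2 * x1 ^+ 2 * x2 * x3 ^+ 2 - 4 * s ^+ 2 * x1 ^+ 2 * x2 * x3 - 2 * s ^+ 2 * x1 ^+ 2 * x2 - 4 * s ^+ 2 * x1 ^+ 2 * x3 ^+ 6 - 10 * s ^+ 2 * x1 ^+ 2 * x3 ^+ 5 - 9 * s ^+ 2 * x1 ^+ 2 * x3 ^+ 4 + 9 * s ^+ 2 * x1 ^+ 2 * x3 ^+ 3 + 11 * s ^+ 2 * x1 ^+ 2 * x3 ^+ 2 + 4 * s ^+ 2 * x1 ^+ 2 * x3 + 2 * s ^+ 2 * x1 ^+ 2 + 2 * s ^+ 2 * x1 * x2 ^+ 5 * x3 ^+ 2 - 2 * s ^+ 2 * x1 * x2 ^+ 5 * x3 + 10 * s ^+ 2 * x1 * x2 ^+ 4 * x3 ^+ 4 + 29 * s ^+ 2 * x1 * x2 ^+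 4 * x3 ^+ 3 + 7 * s ^+ 2 * x1 * x2 ^+ 4 * x3 ^+ 2 + 20 * s ^+ 2 * x1 * x2 ^+ 4 * x3 + 26 * s ^+ 2 * x1 * x2 ^+ 4 + 13 * s ^+ 2 * x1 * x2 ^+ 3 * x3 ^+ 5 + 10 * s ^+ 2 * x1 * x2 ^+ 3 * x3 ^+ 4 - 81 * s ^+ 2 * x1 * x2 ^+ 3 * x3 ^+ 3 - 44 * s ^+ 2 * x1 * x2 ^+ 3 * x3 ^+ 2 + 15 * s ^+ 2 * x1 * x2 ^+ 3 * x3 - 32 * s ^+ 2 * x1 * x2 ^+ 3 + 2 * s ^+ 2 * x1 * x2 ^+ 2 * x3 ^+ 6 - 39 * s ^+ 2 * x1 * x2 ^+ 2 * x3 ^+ 5 - 154 * s ^+ 2 * x1 * x2 ^+ 2 * x3 ^+ 4 - 72 * s ^+ 2 * x1 * x2 ^+ 2 * x3 ^+ 3 + 20 * s ^+ 2 * x1 * x2 ^+ 2 * x3 ^+ 2 - 62 * s ^+ 2 * x1 * x2 ^+ 2 * x3 - 6 * s ^+ 2 * x1 * x2 ^+ 2 - 13 * s ^+ 2 * x1 * x2 * x3 ^+ 6 - 36 * s ^+ 2 * x1 * x2 * x3 ^+ 5 + 58 * s ^+ 2 * x1 * x2 * x3 ^+ 4 + 104 * s ^+ 2 * x1 * x2 * x3 ^+ 3 + 15 * s ^+ 2 * x1 * x2 * x3 ^+ 2 + 33 * s ^+ 2 * x1 * x2 * x3 + 14 * s ^+ 2 * x1 * x2 - s ^+ 2 *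 x1 * x3 ^+ 6 + 21 * s ^+ 2 * x1 * x3 ^+ 5 + 30 * s ^+ 2 * x1 * x3 ^+ 4 + 8 * s ^+ 2 * x1 * x3 ^+ 3 + 10 * s ^+ 2 * x1 * x3 ^+ 2 + s ^+ 2 * x1 * x3 - 2 * s ^+ 2 * x1 - 8 * s ^+ 2 * x2 ^+ 5 * x3 ^+ 2 - 4 * s ^+ 2 * x2 ^+ 5 * x3 + 12 * s ^+ 2 * x2 ^+ 5 - 5 * s ^+ 2 * x2 ^+ 4 * x3 ^+ 4 - 36 * s ^+ 2 * x2 ^+ 4 * x3 ^+ 3 - 11 * s ^+ 2 * x2 ^+ 4 * x3 ^+ 2 + 38 * s ^+ 2 * x2 ^+ 4 * x3 - 18 * s ^+ 2 * x2 ^+ 4 - 11 * s ^+ 2 * x2 ^+ 3 * x3 ^+ 5 - 53 * s ^+ 2 * x2 ^+ 3 * x3 ^+ 4 + 5 * s ^+ 2 * x2 ^+ 3 * x3 ^+ 3 + 58 * s ^+ 2 * x2 ^+ 3 * x3 ^+ 2 - 59 * s ^+ 2 * x2 ^+ 3 * x3 - 6 * s ^+ 2 * x2 ^+ 3 - 4 * s ^+ 2 * x2 ^+ 2 * x3 ^+ 6 - 14 * s ^+ 2 * x2 ^+ 2 * x3 ^+ 5 + 62 * s ^+ 2 * x2 ^+ 2 * x3 ^+ 4 + 89 * s ^+ 2 * x2 ^+ 2 * x3 ^+ 3 - 27 * s ^+ 2 * x2 ^+ 2 * x3 ^+ 2 + 30 * s ^+ 2 * x2 ^+ 2 * x3 +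 18 * s ^+ 2 * x2 ^+ 2 + s ^+ 2 * x2 * x3 ^+ 6 + 32 * s ^+ 2 * x2 * x3 ^+ 5 + 26 * s ^+ 2 * x2 * x3 ^+ 4 - 32 * s ^+ 2 * x2 * x3 ^+ 3 + 4 * s ^+ 2 * x2 * x3 ^+ 2 + s ^+ 2 * x2 * x3 - 6 * s ^+ 2 * x2 + 4 * s ^+ 2 * x3 ^+ 6 - s ^+ 2 * x3 ^+ 5 - 16 * s ^+ 2 * x3 ^+ 4 - 10 * s ^+ 2 * x3 ^+ 3 - 7 * s ^+ 2 * x3 ^+ 2 - 4 * s ^+ 2 * x3 + 7 * s * x1 ^+ 4 * x2 ^+ 3 * x3 ^+ 3 + 13 * s * x1 ^+ 4 * x2 ^+ 3 * x3 ^+ 2 + 16 * s * x1 ^+ 4 * x2 ^+ 2 * x3 ^+ 4 + 12 * s * x1 ^+ 4 * x2 ^+ 2 * x3 ^+ 3 - 41 * s * x1 ^+ 4 * x2 ^+ 2 * x3 ^+ 2 - 17 * s * x1 ^+ 4 * x2 ^+ 2 * x3 + 4 * s * x1 ^+ 4 * x2 * x3 ^+ 5 - 16 * s * x1 ^+ 4 * x2 * x3 ^+ 4 - 69 * s * x1 ^+ 4 * x2 * x3 ^+ 3 - 10 * s * x1 ^+ 4 * x2 * x3 ^+ 2 + 17 * s * x1 ^+ 4 * x2 * x3 - 4 * s * x1 ^+ 4 * x3 ^+ 5 - 16 * s * x1 ^+ 4 * x3 ^+ 4 + 18 * s * x1 ^+ 4 * x3 ^+ 3 + 22 * s * x1 ^+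 4 * x3 ^+ 2 + 7 * s * x1 ^+ 3 * x2 ^+ 4 * x3 ^+ 3 + 25 * s * x1 ^+ 3 * x2 ^+ 4 * x3 ^+ 2 + 4 * s * x1 ^+ 3 * x2 ^+ 4 * x3 + 9 * s * x1 ^+ 3 * x2 ^+ 3 * x3 ^+ 4 + 19 * s * x1 ^+ 3 * x2 ^+ 3 * x3 ^+ 3 - 106 * s * x1 ^+ 3 * x2 ^+ 3 * x3 ^+ 2 - 79 * s * x1 ^+ 3 * x2 ^+ 3 * x3 - 12 * s * x1 ^+ 3 * x2 ^+ 3 - 12 * s * x1 ^+ 3 * x2 ^+ 2 * x3 ^+ 5 - 54 * s * x1 ^+ 3 * x2 ^+ 2 * x3 ^+ 4 - 234 * s * x1 ^+ 3 * x2 ^+ 2 * x3 ^+ 3 - 92 * s * x1 ^+ 3 * x2 ^+ 2 * x3 ^+ 2 + 66 * s * x1 ^+ 3 * x2 ^+ 2 * x3 + 12 * s * x1 ^+ 3 * x2 ^+ 2 - 4 * s * x1 ^+ 3 * x2 * x3 ^+ 6 - 8 * s * x1 ^+ 3 * x2 * x3 ^+ 5 - 44 * s * x1 ^+ 3 * x2 * x3 ^+ 4 + 147 * s * x1 ^+ 3 * x2 * x3 ^+ 3 + 229 * s * x1 ^+ 3 * x2 * x3 ^+ 2 + 51 * s * x1 ^+ 3 * x2 * x3 + 8 * s * x1 ^+ 3 * x2 + 4 * s * x1 ^+ 3 * x3 ^+ 6 + 8 * s * x1 ^+ 3 * x3 ^+ 5 + 61 * s * x1 ^+ 3 * x3 ^+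 4 + 54 * s * x1 ^+ 3 * x3 ^+ 3 - 30 * s * x1 ^+ 3 * x3 ^+ 2 - 21 * s * x1 ^+ 3 * x3 - 4 * s * x1 ^+ 3 + 8 * s * x1 ^+ 2 * x2 ^+ 5 * x3 ^+ 2 + 8 * s * x1 ^+ 2 * x2 ^+ 5 * x3 - 7 * s * x1 ^+ 2 * x2 ^+ 4 * x3 ^+ 4 - 10 * s * x1 ^+ 2 * x2 ^+ 4 * x3 ^+ 3 - 49 * s * x1 ^+ 2 * x2 ^+ 4 * x3 ^+ 2 - 98 * s * x1 ^+ 2 * x2 ^+ 4 * x3 - 44 * s * x1 ^+ 2 * x2 ^+ 4 - 16 * s * x1 ^+ 2 * x2 ^+ 3 * x3 ^+ 5 - 42 * s * x1 ^+ 2 * x2 ^+ 3 * x3 ^+ 4 - 104 * s * x1 ^+ 2 * x2 ^+ 3 * x3 ^+ 3 - 149 * s * x1 ^+ 2 * x2 ^+ 3 * x3 ^+ 2 + 9 * s * x1 ^+ 2 * x2 ^+ 3 * x3 + 60 * s * x1 ^+ 2 * x2 ^+ 3 - 4 * s * x1 ^+ 2 * x2 ^+ 2 * x3 ^+ 6 + 38 * s * x1 ^+ 2 * x2 ^+ 2 * x3 ^+ 5 + 146 * s * x1 ^+ 2 * x2 ^+ 2 * x3 ^+ 4 + 268 * s * x1 ^+ 2 * x2 ^+ 2 * x3 ^+ 3 + 442 * s * x1 ^+ 2 * x2 ^+ 2 * x3 ^+ 2 + 323 * s * x1 ^+ 2 * x2 ^+ 2 * x3 + 56 * s * x1 ^+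 2 * x2 ^+ 2 + 28 * s * x1 ^+ 2 * x2 * x3 ^+ 6 + 92 * s * x1 ^+ 2 * x2 * x3 ^+ 5 + 129 * s * x1 ^+ 2 * x2 * x3 ^+ 4 + 131 * s * x1 ^+ 2 * x2 * x3 ^+ 3 - 24 * s * x1 ^+ 2 * x2 * x3 ^+ 2 - 160 * s * x1 ^+ 2 * x2 * x3 - 64 * s * x1 ^+ 2 * x2 + 4 * s * x1 ^+ 2 * x3 ^+ 6 - 2 * s * x1 ^+ 2 * x3 ^+ 5 - 29 * s * x1 ^+ 2 * x3 ^+ 4 - 79 * s * x1 ^+ 2 * x3 ^+ 3 - 83 * s * x1 ^+ 2 * x3 ^+ 2 - 14 * s * x1 ^+ 2 * x3 + 8 * s * x1 ^+ 2 - 4 * s * x1 * x2 ^+ 6 * x3 ^+ 2 + 4 * s * x1 * x2 ^+ 6 * x3 - 16 * s * x1 * x2 ^+ 5 * x3 ^+ 3 + 20 * s * x1 * x2 ^+ 5 * x3 ^+ 2 - 24 * s * x1 * x2 ^+ 5 * x3 - 52 * s * x1 * x2 ^+ 5 - 14 * s * x1 * x2 ^+ 4 * x3 ^+ 4 + 85 * s * x1 * x2 ^+ 4 * x3 ^+ 3 - 27 * s * x1 * x2 ^+ 4 * x3 ^+ 2 - 128 * s * x1 * x2 ^+ 4 * x3 + 88 * s * x1 * x2 ^+ 4 + 23 * s * x1 * x2 ^+ 3 * x3 ^+ 5 + 224 * s * x1 * x2 ^+ 3 * x3 ^+ 4 + 161 * s * x1 * x2 ^+ 3 * x3 ^+ 3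 + 96 * s * x1 * x2 ^+ 3 * x3 ^+ 2 + 513 * s * x1 * x2 ^+ 3 * x3 + 112 * s * x1 * x2 ^+ 3 + 16 * s * x1 * x2 ^+ 2 * x3 ^+ 6 + 103 * s * x1 * x2 ^+ 2 * x3 ^+ 5 - 56 * s * x1 * x2 ^+ 2 * x3 ^+ 4 - 172 * s * x1 * x2 ^+ 2 * x3 ^+ 3 + 188 * s * x1 * x2 ^+ 2 * x3 ^+ 2 - 274 * s * x1 * x2 ^+ 2 * x3 - 196 * s * x1 * x2 ^+ 2 - 7 * s * x1 * x2 * x3 ^+ 6 - 122 * s * x1 * x2 * x3 ^+ 5 - 194 * s * x1 * x2 * x3 ^+ 4 - 46 * s * x1 * x2 * x3 ^+ 3 - 281 * s * x1 * x2 * x3 ^+ 2 - 115 * s * x1 * x2 * x3 + 52 * s * x1 * x2 - 13 * s * x1 * x3 ^+ 6 - 25 * s * x1 * x3 ^+ 5 + 8 * s * x1 * x3 ^+ 4 - 14 * s * x1 * x3 ^+ 3 + 44 * s * x1 * x3 ^+ 2 + 55 * s * x1 * x3 + 4 * s * x1 + 8 * s * x2 ^+ 6 * x3 ^+ 2 + 12 * s * x2 ^+ 6 * x3 - 20 * s * x2 ^+ 6 + 32 * s * x2 ^+ 5 * x3 ^+ 3 + 36 * s * x2 ^+ 5 * x3 ^+ 2 - 80 * s * x2 ^+ 5 * x3 + 40 * s * x2 ^+ 5 + 57 * s * x2 ^+ 4 * x3 ^+ 4 + 54 * s * x2 ^+ 4 * x3 ^+ 3 - 105 * s * x2 ^+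 4 * x3 ^+ 2 + 222 * s * x2 ^+ 4 * x3 + 68 * s * x2 ^+ 4 + 29 * s * x2 ^+ 3 * x3 ^+ 5 - 45 * s * x2 ^+ 3 * x3 ^+ 4 - 211 * s * x2 ^+ 3 * x3 ^+ 3 + 184 * s * x2 ^+ 3 * x3 ^+ 2 - 99 * s * x2 ^+ 3 * x3 - 156 * s * x2 ^+ 3 - 68 * s * x2 ^+ 2 * x3 ^+ 5 - 136 * s * x2 ^+ 2 * x3 ^+ 4 + 135 * s * x2 ^+ 2 * x3 ^+ 3 - 143 * s * x2 ^+ 2 * x3 ^+ 2 - 146 * s * x2 ^+ 2 * x3 + 64 * s * x2 ^+ 2 - 9 * s * x2 * x3 ^+ 6 + 2 * s * x2 * x3 ^+ 5 + 114 * s * x2 * x3 ^+ 4 + 4 * s * x2 * x3 ^+ 3 + 32 * s * x2 * x3 ^+ 2 + 111 * s * x2 * x3 + 8 * s * x2 + 4 * s * x3 ^+ 6 + 25 * s * x3 ^+ 5 + 12 * s * x3 ^+ 4 + 14 * s * x3 ^+ 3 + 15 * s * x3 ^+ 2 - 12 * s * x3 - 4 * s + 3 * x1 ^+ 4 * x2 ^+ 3 * x3 ^+ 3 + 11 * x1 ^+ 4 * x2 ^+ 3 * x3 ^+ 2 + 10 * x1 ^+ 4 * x2 ^+ 3 * x3 + 12 * x1 ^+ 4 * x2 ^+ 2 * x3 ^+ 4 + 38 * x1 ^+ 4 * x2 ^+ 2 * x3 ^+ 3 + 19 * x1 ^+ 4 * x2 ^+ 2 * x3 ^+ 2 - 17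 * x1 ^+ 4 * x2 ^+ 2 * x3 + 12 * x1 ^+ 4 * x2 * x3 ^+ 5 + 34 * x1 ^+ 4 * x2 * x3 ^+ 4 - 7 * x1 ^+ 4 * x2 * x3 ^+ 3 - 42 * x1 ^+ 4 * x2 * x3 ^+ 2 + x1 ^+ 4 * x2 * x3 + 4 * x1 ^+ 4 * x3 ^+ 5 - 14 * x1 ^+ 4 * x3 ^+ 4 - 20 * x1 ^+ 4 * x3 ^+ 3 + 8 * x1 ^+ 4 * x3 ^+ 2 + 4 * x1 ^+ 4 * x3 + 3 * x1 ^+ 3 * x2 ^+ 4 * x3 ^+ 3 + 21 * x1 ^+ 3 * x2 ^+ 4 * x3 ^+ 2 + 32 * x1 ^+ 3 * x2 ^+ 4 * x3 + 8 * x1 ^+ 3 * x2 ^+ 4 + 9 * x1 ^+ 3 * x2 ^+ 3 * x3 ^+ 4 + 71 * x1 ^+ 3 * x2 ^+ 3 * x3 ^+ 3 + 80 * x1 ^+ 3 * x2 ^+ 3 * x3 ^+ 2 - 31 * x1 ^+ 3 * x2 ^+ 3 * x3 - 12 * x1 ^+ 3 * x2 ^+ 3 + 44 * x1 ^+ 3 * x2 ^+ 2 * x3 ^+ 4 - 18 * x1 ^+ 3 * x2 ^+ 2 * x3 ^+ 3 - 202 * x1 ^+ 3 * x2 ^+ 2 * x3 ^+ 2 - 68 * x1 ^+ 3 * x2 ^+ 2 * x3 - 8 * x1 ^+ 3 * x2 ^+ 2 - 12 * x1 ^+ 3 * x2 * x3 ^+ 6 - 30 * x1 ^+ 3 * x2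 * x3 ^+ 5 - 118 * x1 ^+ 3 * x2 * x3 ^+ 4 - 215 * x1 ^+ 3 * x2 * x3 ^+ 3 - 7 * x1 ^+ 3 * x2 * x3 ^+ 2 + 45 * x1 ^+ 3 * x2 * x3 + 10 * x1 ^+ 3 * x2 - 4 * x1 ^+ 3 * x3 ^+ 6 - 14 * x1 ^+ 3 * x3 ^+ 5 - 5 * x1 ^+ 3 * x3 ^+ 4 + 84 * x1 ^+ 3 * x3 ^+ 3 + 74 * x1 ^+ 3 * x3 ^+ 2 + 23 * x1 ^+ 3 * x3 + 4 * x1 ^+ 3 + 6 * x1 ^+ 2 * x2 ^+ 5 * x3 ^+ 2 + 26 * x1 ^+ 2 * x2 ^+ 5 * x3 + 24 * x1 ^+ 2 * x2 ^+ 5 - 3 * x1 ^+ 2 * x2 ^+ 4 * x3 ^+ 4 + 6 * x1 ^+ 2 * x2 ^+ 4 * x3 ^+ 3 + 73 * x1 ^+ 2 * x2 ^+ 4 * x3 ^+ 2 + 32 * x1 ^+ 2 * x2 ^+ 4 * x3 - 44 * x1 ^+ 2 * x2 ^+ 4 - 12 * x1 ^+ 2 * x2 ^+ 3 * x3 ^+ 5 - 50 * x1 ^+ 2 * x2 ^+ 3 * x3 ^+ 4 - 28 * x1 ^+ 2 * x2 ^+ 3 * x3 ^+ 3 - 223 * x1 ^+ 2 * x2 ^+ 3 * x3 ^+ 2 - 291 * x1 ^+ 2 * x2 ^+ 3 * x3 - 54 * x1 ^+ 2 * x2 ^+ 3 - 12 * x1 ^+ 2 * x2 ^+ 2 * x3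 ^+ 6 - 76 * x1 ^+ 2 * x2 ^+ 2 * x3 ^+ 5 - 118 * x1 ^+ 2 * x2 ^+ 2 * x3 ^+ 4 - 330 * x1 ^+ 2 * x2 ^+ 2 * x3 ^+ 3 - 230 * x1 ^+ 2 * x2 ^+ 2 * x3 ^+ 2 + 127 * x1 ^+ 2 * x2 ^+ 2 * x3 + 96 * x1 ^+ 2 * x2 ^+ 2 + 46 * x1 ^+ 2 * x2 * x3 ^+ 5 + 55 * x1 ^+ 2 * x2 * x3 ^+ 4 + 237 * x1 ^+ 2 * x2 * x3 ^+ 3 + 420 * x1 ^+ 2 * x2 * x3 ^+ 2 + 216 * x1 ^+ 2 * x2 * x3 + 10 * x1 ^+ 2 * x2 + 8 * x1 ^+ 2 * x3 ^+ 6 + 18 * x1 ^+ 2 * x3 ^+ 5 + 49 * x1 ^+ 2 * x3 ^+ 4 + 43 * x1 ^+ 2 * x3 ^+ 3 - 51 * x1 ^+ 2 * x3 ^+ 2 - 76 * x1 ^+ 2 * x3 - 18 * x1 ^+ 2 - 4 * x1 * x2 ^+ 6 * x3 ^+ 2 - 4 * x1 * x2 ^+ 6 * x3 + 24 * x1 * x2 ^+ 6 - 24 * x1 * x2 ^+ 5 * x3 ^+ 3 - 22 * x1 * x2 ^+ 5 * x3 ^+ 2 + 90 * x1 * x2 ^+ 5 * x3 - 52 * x1 * x2 ^+ 5 - 54 * x1 * x2 ^+ 4 * x3 ^+ 4 - 61 * x1 * x2 ^+ 4 * x3 ^+ 3 + 45 * x1 * x2 ^+ 4 * x3 ^+ 2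 - 344 * x1 * x2 ^+ 4 * x3 - 90 * x1 * x2 ^+ 4 - 45 * x1 * x2 ^+ 3 * x3 ^+ 5 - 10 * x1 * x2 ^+ 3 * x3 ^+ 4 + 53 * x1 * x2 ^+ 3 * x3 ^+ 3 - 360 * x1 * x2 ^+ 3 * x3 ^+ 2 + 121 * x1 * x2 ^+ 3 * x3 + 208 * x1 * x2 ^+ 3 - 2 * x1 * x2 ^+ 2 * x3 ^+ 6 + 119 * x1 * x2 ^+ 2 * x3 ^+ 5 + 246 * x1 * x2 ^+ 2 * x3 ^+ 4 + 116 * x1 * x2 ^+ 2 * x3 ^+ 3 + 576 * x1 * x2 ^+ 2 * x3 ^+ 2 + 510 * x1 * x2 ^+ 2 * x3 + 2 * x1 * x2 ^+ 2 + 37 * x1 * x2 * x3 ^+ 6 + 56 * x1 * x2 * x3 ^+ 5 + 14 * x1 * x2 * x3 ^+ 4 + 152 * x1 * x2 * x3 ^+ 3 - 7 * x1 * x2 * x3 ^+ 2 - 305 * x1 * x2 * x3 - 90 * x1 * x2 - 3 * x1 * x3 ^+ 6 - 5 * x1 * x3 ^+ 5 + 6 * x1 * x3 ^+ 4 - 36 * x1 * x3 ^+ 3 - 70 * x1 * x3 ^+ 2 + 23 * x1 * x3 + 22 * x1 - 8 * x2 ^+ 7 * x3 + 8 * x2 ^+ 7 - 32 * x2 ^+ 6 * x3 ^+ 2 + 44 * x2 ^+ 6 * x3 - 20 * x2 ^+ 6 - 48 * x2 ^+ 5 * x3 ^+ 3 + 100 * x2 ^+ 5 * x3 ^+ 2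 - 116 * x2 ^+ 5 * x3 - 44 * x2 ^+ 5 - 19 * x2 ^+ 4 * x3 ^+ 4 + 160 * x2 ^+ 4 * x3 ^+ 3 - 149 * x2 ^+ 4 * x3 ^+ 2 + 26 * x2 ^+ 4 * x3 + 126 * x2 ^+ 4 + 23 * x2 ^+ 3 * x3 ^+ 5 + 169 * x2 ^+ 3 * x3 ^+ 4 - 61 * x2 ^+ 3 * x3 ^+ 3 + 174 * x2 ^+ 3 * x3 ^+ 2 + 303 * x2 ^+ 3 * x3 - 6 * x2 ^+ 3 + 12 * x2 ^+ 2 * x3 ^+ 6 + 38 * x2 ^+ 2 * x3 ^+ 5 - 106 * x2 ^+ 2 * x3 ^+ 4 + 23 * x2 ^+ 2 * x3 ^+ 3 + 67 * x2 ^+ 2 * x3 ^+ 2 - 242 * x2 ^+ 2 * x3 - 98 * x2 ^+ 2 - 9 * x2 * x3 ^+ 6 - 52 * x2 * x3 ^+ 5 - 22 * x2 * x3 ^+ 4 - 28 * x2 * x3 ^+ 3 - 140 * x2 * x3 ^+ 2 + 7 * x2 * x3 + 46 * x2 + x3 ^+ 5 - 4 * x3 ^+ 4 - 14 * x3 ^+ 3 + 23 * x3 ^+ 2 + 16 * x3 - 4)) (4 * (m2F5 s x1 x2 x3) * (m2F6 s x1 x2 x3) * (m2F7 s x1 x2 x3)) hs _).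
  by rewrite /m2F3 /m2F4 /m2F5 /m2F6 /m2F7 /m2F8 /m2F9; field; nzr2 hn h3 h4 h5 h6 h7 h8 h9.
- rewrite /=.
  refine (@eq_via _ s _ _ ((s ^+ 3 * x1 ^+ 4 * x2 ^+ 3 * x3 ^+ 2 - s ^+ 3 * x1 ^+ 4 * x2 ^+ 3 * x3 - 4 * s ^+ 3 * x1 ^+ 4 * x2 ^+ 2 * x3 ^+ 2 + s ^+ 3 * x1 ^+ 4 * x2 ^+ 2 * x3 + s ^+ 3 * x1 ^+ 4 * x2 ^+ 2 + 5 * s ^+ 3 * x1 ^+ 4 * x2 * x3 ^+ 2 + 2 * s ^+ 3 * x1 ^+ 4 * x2 * x3 - s ^+ 3 * x1 ^+ 4 * x2 - 2 * s ^+ 3 * x1 ^+ 4 * x3 ^+ 2 - 2 * s ^+ 3 * x1 ^+ 4 * x3 + s ^+ 3 * x1 ^+ 3 * x2 ^+ 4 * x3 ^+ 2 - s ^+ 3 * x1 ^+ 3 * x2 ^+ 4 * x3 - s ^+ 3 * x1 ^+ 3 * x2 ^+ 3 * x3 ^+ 3 - 7 * s ^+ 3 * x1 ^+ 3 * x2 ^+ 3 * x3 ^+ 2 + 2 * s ^+ 3 * x1 ^+ 3 * x2 ^+ 3 * x3 + 3 * s ^+ 3 * x1 ^+ 3 * x2 ^+ 3 + 2 * s ^+ 3 * x1 ^+ 3 * x2 ^+ 2 * x3 ^+ 3 + 18 * s ^+ 3 * x1 ^+ 3 * x2 ^+ 2 * x3 ^+ 2 + 8 * s ^+ 3 * x1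 ^+ 3 * x2 ^+ 2 * x3 - 6 * s ^+ 3 * x1 ^+ 3 * x2 ^+ 2 - 15 * s ^+ 3 * x1 ^+ 3 * x2 * x3 ^+ 2 - 17 * s ^+ 3 * x1 ^+ 3 * x2 * x3 + s ^+ 3 * x1 ^+ 3 * x2 - s ^+ 3 * x1 ^+ 3 * x3 ^+ 3 + 2 * s ^+ 3 * x1 ^+ 3 * x3 ^+ 2 + 6 * s ^+ 3 * x1 ^+ 3 * x3 + s ^+ 3 * x1 ^+ 3 - s ^+ 3 * x1 ^+ 2 * x2 ^+ 4 * x3 ^+ 3 - 2 * s ^+ 3 * x1 ^+ 2 * x2 ^+ 4 * x3 ^+ 2 + s ^+ 3 * x1 ^+ 2 * x2 ^+ 4 * x3 + 2 * s ^+ 3 * x1 ^+ 2 * x2 ^+ 4 + 6 * s ^+ 3 * x1 ^+ 2 * x2 ^+ 3 * x3 ^+ 3 + 16 * s ^+ 3 * x1 ^+ 2 * x2 ^+ 3 * x3 ^+ 2 + 5 * s ^+ 3 * x1 ^+ 2 * x2 ^+ 3 * x3 - 9 * s ^+ 3 * x1 ^+ 2 * x2 ^+ 3 + 2 * s ^+ 3 * x1 ^+ 2 * x2 ^+ 2 * x3 ^+ 4 - 6 * s ^+ 3 * x1 ^+ 2 * x2 ^+ 2 * x3 ^+ 3 - 32 * s ^+ 3 * x1 ^+ 2 * x2 ^+ 2 * x3 ^+ 2 - 30 * s ^+ 3 * x1 ^+ 2 * x2 ^+ 2 * x3 + 5 * s ^+ 3 * x1 ^+ 2 * x2 ^+ 2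 - 4 * s ^+ 3 * x1 ^+ 2 * x2 * x3 ^+ 4 - 5 * s ^+ 3 * x1 ^+ 2 * x2 * x3 ^+ 3 + 13 * s ^+ 3 * x1 ^+ 2 * x2 * x3 ^+ 2 + 28 * s ^+ 3 * x1 ^+ 2 * x2 * x3 + 4 * s ^+ 3 * x1 ^+ 2 * x2 + 2 * s ^+ 3 * x1 ^+ 2 * x3 ^+ 4 + 5 * s ^+ 3 * x1 ^+ 2 * x3 ^+ 3 + 3 * s ^+ 3 * x1 ^+ 2 * x3 ^+ 2 - 5 * s ^+ 3 * x1 ^+ 2 * x3 - 2 * s ^+ 3 * x1 ^+ 2 + 2 * s ^+ 3 * x1 * x2 ^+ 4 * x3 ^+ 3 + 3 * s ^+ 3 * x1 * x2 ^+ 4 * x3 ^+ 2 - s ^+ 3 * x1 * x2 ^+ 4 * x3 - 4 * s ^+ 3 * x1 * x2 ^+ 4 + s ^+ 3 * x1 * x2 ^+ 3 * x3 ^+ 4 - 8 * s ^+ 3 * x1 * x2 ^+ 3 * x3 ^+ 3 - 21 * s ^+ 3 * x1 * x2 ^+ 3 * x3 ^+ 2 - 12 * s ^+ 3 * x1 * x2 ^+ 3 * x3 + 7 * s ^+ 3 * x1 * x2 ^+ 3 - 7 * s ^+ 3 * x1 * x2 ^+ 2 * x3 ^+ 4 - 4 * s ^+ 3 * x1 * x2 ^+ 2 * x3 ^+ 3 + 24 * s ^+ 3 * x1 * x2 ^+ 2 * x3 ^+ 2 + 32 * s ^+ 3 * x1 * x2 ^+ 2 * x3 + 2 * s ^+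 3 * x1 * x2 ^+ 2 - s ^+ 3 * x1 * x2 * x3 ^+ 5 + 6 * s ^+ 3 * x1 * x2 * x3 ^+ 4 + 18 * s ^+ 3 * x1 * x2 * x3 ^+ 3 + 6 * s ^+ 3 * x1 * x2 * x3 ^+ 2 - 15 * s ^+ 3 * x1 * x2 * x3 - 5 * s ^+ 3 * x1 * x2 + s ^+ 3 * x1 * x3 ^+ 5 + s ^+ 3 * x1 * x3 ^+ 4 - 4 * s ^+ 3 * x1 * x3 ^+ 3 - 6 * s ^+ 3 * x1 * x3 ^+ 2 + s ^+ 3 * x1 - s ^+ 3 * x2 ^+ 4 * x3 ^+ 3 - 2 * s ^+ 3 * x2 ^+ 4 * x3 ^+ 2 + s ^+ 3 * x2 ^+ 4 * x3 + 2 * s ^+ 3 * x2 ^+ 4 - s ^+ 3 * x2 ^+ 3 * x3 ^+ 4 + s ^+ 3 * x2 ^+ 3 * x3 ^+ 3 + 11 * s ^+ 3 * x2 ^+ 3 * x3 ^+ 2 + 8 * s ^+ 3 * x2 ^+ 3 * x3 - s ^+ 3 * x2 ^+ 3 + 4 * s ^+ 3 * x2 ^+ 2 * x3 ^+ 4 + 12 * s ^+ 3 * x2 ^+ 2 * x3 ^+ 3 + s ^+ 3 * x2 ^+ 2 * x3 ^+ 2 - 9 * s ^+ 3 * x2 ^+ 2 * x3 - 2 * s ^+ 3 * x2 ^+ 2 + s ^+ 3 * x2 * x3 ^+ 5 + 2 * s ^+ 3 * x2 * x3 ^+ 4 - 6 * s ^+ 3 * x2 * x3 ^+ 3 - 8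 * s ^+ 3 * x2 * x3 ^+ 2 + s ^+ 3 * x2 - s ^+ 3 * x3 ^+ 4 + 2 * s ^+ 3 * x3 ^+ 2 + s ^+ 3 * x3 + 2 * s ^+ 2 * x1 ^+ 5 * x2 ^+ 2 * x3 ^+ 2 - 6 * s ^+ 2 * x1 ^+ 5 * x2 * x3 ^+ 2 - 2 * s ^+ 2 * x1 ^+ 5 * x2 * x3 + 4 * s ^+ 2 * x1 ^+ 5 * x3 ^+ 2 + 2 * s ^+ 2 * x1 ^+ 5 * x3 + 7 * s ^+ 2 * x1 ^+ 4 * x2 ^+ 3 * x3 ^+ 2 + s ^+ 2 * x1 ^+ 4 * x2 ^+ 3 * x3 - 2 * s ^+ 2 * x1 ^+ 4 * x2 ^+ 3 + 2 * s ^+ 2 * x1 ^+ 4 * x2 ^+ 2 * x3 ^+ 3 - 32 * s ^+ 2 * x1 ^+ 4 * x2 ^+ 2 * x3 ^+ 2 - 29 * s ^+ 2 * x1 ^+ 4 * x2 ^+ 2 * x3 + s ^+ 2 * x1 ^+ 4 * x2 ^+ 2 - 12 * s ^+ 2 * x1 ^+ 4 * x2 * x3 ^+ 3 + 23 * s ^+ 2 * x1 ^+ 4 * x2 * x3 ^+ 2 + 46 * s ^+ 2 * x1 ^+ 4 * x2 * x3 + 7 * s ^+ 2 * x1 ^+ 4 * x2 + 12 * s ^+ 2 * x1 ^+ 4 * x3 ^+ 3 + 8 * s ^+ 2 * x1 ^+ 4 * x3 ^+ 2 - 12 * s ^+ 2 * x1 ^+ 4 * x3 - 4 * s ^+ 2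 * x1 ^+ 4 + 7 * s ^+ 2 * x1 ^+ 3 * x2 ^+ 4 * x3 ^+ 2 + s ^+ 2 * x1 ^+ 3 * x2 ^+ 4 * x3 - 4 * s ^+ 2 * x1 ^+ 3 * x2 ^+ 4 - s ^+ 2 * x1 ^+ 3 * x2 ^+ 3 * x3 ^+ 3 - 49 * s ^+ 2 * x1 ^+ 3 * x2 ^+ 3 * x3 ^+ 2 - 54 * s ^+ 2 * x1 ^+ 3 * x2 ^+ 3 * x3 + 7 * s ^+ 2 * x1 ^+ 3 * x2 ^+ 3 - 4 * s ^+ 2 * x1 ^+ 3 * x2 ^+ 2 * x3 ^+ 4 - 16 * s ^+ 2 * x1 ^+ 3 * x2 ^+ 2 * x3 ^+ 3 + 76 * s ^+ 2 * x1 ^+ 3 * x2 ^+ 2 * x3 ^+ 2 + 168 * s ^+ 2 * x1 ^+ 3 * x2 ^+ 2 * x3 + 30 * s ^+ 2 * x1 ^+ 3 * x2 ^+ 2 + 14 * s ^+ 2 * x1 ^+ 3 * x2 * x3 ^+ 4 + 70 * s ^+ 2 * x1 ^+ 3 * x2 * x3 ^+ 3 + 55 * s ^+ 2 * x1 ^+ 3 * x2 * x3 ^+ 2 - 97 * s ^+ 2 * x1 ^+ 3 * x2 * x3 - 43 * s ^+ 2 * x1 ^+ 3 * x2 - 6 * s ^+ 2 * x1 ^+ 3 * x3 ^+ 4 - 33 * s ^+ 2 * x1 ^+ 3 * x3 ^+ 3 - 62 * s ^+ 2 * x1 ^+ 3 * x3 ^+ 2 - 8 * s ^+ 2 * x1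 ^+ 3 * x3 + 9 * s ^+ 2 * x1 ^+ 3 + 2 * s ^+ 2 * x1 ^+ 2 * x2 ^+ 5 * x3 ^+ 2 - 2 * s ^+ 2 * x1 ^+ 2 * x2 ^+ 5 - 3 * s ^+ 2 * x1 ^+ 2 * x2 ^+ 4 * x3 ^+ 3 - 30 * s ^+ 2 * x1 ^+ 2 * x2 ^+ 4 * x3 ^+ 2 - 25 * s ^+ 2 * x1 ^+ 2 * x2 ^+ 4 * x3 + 14 * s ^+ 2 * x1 ^+ 2 * x2 ^+ 4 - 4 * s ^+ 2 * x1 ^+ 2 * x2 ^+ 3 * x3 ^+ 4 - 2 * s ^+ 2 * x1 ^+ 2 * x2 ^+ 3 * x3 ^+ 3 + 116 * s ^+ 2 * x1 ^+ 2 * x2 ^+ 3 * x3 ^+ 2 + 189 * s ^+ 2 * x1 ^+ 2 * x2 ^+ 3 * x3 + 23 * s ^+ 2 * x1 ^+ 2 * x2 ^+ 3 + 28 * s ^+ 2 * x1 ^+ 2 * x2 ^+ 2 * x3 ^+ 4 + 112 * s ^+ 2 * x1 ^+ 2 * x2 ^+ 2 * x3 ^+ 3 + 12 * s ^+ 2 * x1 ^+ 2 * x2 ^+ 2 * x3 ^+ 2 - 250 * s ^+ 2 * x1 ^+ 2 * x2 ^+ 2 * x3 - 99 * s ^+ 2 * x1 ^+ 2 * x2 ^+ 2 + 4 * s ^+ 2 * x1 ^+ 2 * x2 * x3 ^+ 5 - 28 * s ^+ 2 * x1 ^+ 2 * x2 * x3 ^+ 4 - 173 * s ^+ 2 * x1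 ^+ 2 * x2 * x3 ^+ 3 - 247 * s ^+ 2 * x1 ^+ 2 * x2 * x3 ^+ 2 + 56 * s ^+ 2 * x1 ^+ 2 * x2 - 10 * s ^+ 2 * x1 ^+ 2 * x3 ^+ 5 - 22 * s ^+ 2 * x1 ^+ 2 * x3 ^+ 4 + 13 * s ^+ 2 * x1 ^+ 2 * x3 ^+ 3 + 85 * s ^+ 2 * x1 ^+ 2 * x3 ^+ 2 + 47 * s ^+ 2 * x1 ^+ 2 * x3 - 2 * s ^+ 2 * x1 ^+ 2 - 6 * s ^+ 2 * x1 * x2 ^+ 5 * x3 ^+ 2 - 2 * s ^+ 2 * x1 * x2 ^+ 5 * x3 + 8 * s ^+ 2 * x1 * x2 ^+ 5 + 53 * s ^+ 2 * x1 * x2 ^+ 4 * x3 ^+ 2 + 67 * s ^+ 2 * x1 * x2 ^+ 4 * x3 - 10 * s ^+ 2 * x1 * x2 ^+ 4 + 9 * s ^+ 2 * x1 * x2 ^+ 3 * x3 ^+ 4 + 54 * s ^+ 2 * x1 * x2 ^+ 3 * x3 ^+ 3 - 63 * s ^+ 2 * x1 * x2 ^+ 3 * x3 ^+ 2 - 222 * s ^+ 2 * x1 * x2 ^+ 3 * x3 - 63 * s ^+ 2 * x1 * x2 ^+ 3 + 2 * s ^+ 2 * x1 * x2 ^+ 2 * x3 ^+ 5 - 23 * s ^+ 2 * x1 * x2 ^+ 2 * x3 ^+ 4 - 212 * s ^+ 2 * x1 * x2 ^+ 2 * x3 ^+ 3 - 246 * s ^+ 2 * x1 * x2 ^+ 2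 * x3 ^+ 2 + 76 * s ^+ 2 * x1 * x2 ^+ 2 * x3 + 86 * s ^+ 2 * x1 * x2 ^+ 2 - 13 * s ^+ 2 * x1 * x2 * x3 ^+ 5 - 56 * s ^+ 2 * x1 * x2 * x3 ^+ 4 + 58 * s ^+ 2 * x1 * x2 * x3 ^+ 3 + 248 * s ^+ 2 * x1 * x2 * x3 ^+ 2 + 111 * s ^+ 2 * x1 * x2 * x3 - 15 * s ^+ 2 * x1 * x2 + 3 * s ^+ 2 * x1 * x3 ^+ 5 + 37 * s ^+ 2 * x1 * x3 ^+ 4 + 50 * s ^+ 2 * x1 * x3 ^+ 3 - 18 * s ^+ 2 * x1 * x3 ^+ 2 - 36 * s ^+ 2 * x1 * x3 - 5 * s ^+ 2 * x1 + 4 * s ^+ 2 * x2 ^+ 5 * x3 ^+ 2 + 2 * s ^+ 2 * x2 ^+ 5 * x3 - 6 * s ^+ 2 * x2 ^+ 5 + 5 * s ^+ 2 * x2 ^+ 4 * x3 ^+ 3 - 22 * s ^+ 2 * x2 ^+ 4 * x3 ^+ 2 - 49 * s ^+ 2 * x2 ^+ 4 * x3 - 4 * s ^+ 2 * x2 ^+ 4 - 3 * s ^+ 2 * x2 ^+ 3 * x3 ^+ 4 - 55 * s ^+ 2 * x2 ^+ 3 * x3 ^+ 3 - 57 * s ^+ 2 * x2 ^+ 3 * x3 ^+ 2 + 58 * s ^+ 2 * x2 ^+ 3 * x3 + 31 * s ^+ 2 * x2 ^+ 3 - 2 * s ^+ 2 * x2 ^+ 2 * x3 ^+ 5 - 20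 * s ^+ 2 * x2 ^+ 2 * x3 ^+ 4 + 42 * s ^+ 2 * x2 ^+ 2 * x3 ^+ 3 + 151 * s ^+ 2 * x2 ^+ 2 * x3 ^+ 2 + 49 * s ^+ 2 * x2 ^+ 2 * x3 - 14 * s ^+ 2 * x2 ^+ 2 + s ^+ 2 * x2 * x3 ^+ 5 + 38 * s ^+ 2 * x2 * x3 ^+ 4 + 60 * s ^+ 2 * x2 * x3 ^+ 3 - 30 * s ^+ 2 * x2 * x3 ^+ 2 - 46 * s ^+ 2 * x2 * x3 - 5 * s ^+ 2 * x2 + 4 * s ^+ 2 * x3 ^+ 5 + s ^+ 2 * x3 ^+ 4 - 18 * s ^+ 2 * x3 ^+ 3 - 10 * s ^+ 2 * x3 ^+ 2 + 5 * s ^+ 2 * x3 + 2 * s ^+ 2 + 4 * s * x1 ^+ 5 * x2 ^+ 2 * x3 ^+ 2 + 4 * s * x1 ^+ 5 * x2 ^+ 2 * x3 + 8 * s * x1 ^+ 5 * x2 * x3 ^+ 3 - 8 * s * x1 ^+ 5 * x2 * x3 - 12 * s * x1 ^+ 5 * x3 ^+ 3 - 12 * s * x1 ^+ 5 * x3 ^+ 2 + 15 * s * x1 ^+ 4 * x2 ^+ 3 * x3 ^+ 2 + 17 * s * x1 ^+ 4 * x2 ^+ 3 * x3 + 20 * s * x1 ^+ 4 * x2 ^+ 2 * x3 ^+ 3 - 8 * s * x1 ^+ 4 * x2 ^+ 2 * x3 ^+ 2 - 65 * s * x1 ^+ 4 * x2 ^+ 2 * x3 - 9 * s * x1 ^+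 4 * x2 ^+ 2 - 4 * s * x1 ^+ 4 * x2 * x3 ^+ 4 - 68 * s * x1 ^+ 4 * x2 * x3 ^+ 3 - 129 * s * x1 ^+ 4 * x2 * x3 ^+ 2 - 10 * s * x1 ^+ 4 * x2 * x3 + 5 * s * x1 ^+ 4 * x2 - 8 * s * x1 ^+ 4 * x3 ^+ 4 + 62 * s * x1 ^+ 4 * x3 ^+ 2 + 34 * s * x1 ^+ 4 * x3 + 4 * s * x1 ^+ 4 + 19 * s * x1 ^+ 3 * x2 ^+ 4 * x3 ^+ 2 + 25 * s * x1 ^+ 3 * x2 ^+ 4 * x3 - 4 * s * x1 ^+ 3 * x2 ^+ 4 + 17 * s * x1 ^+ 3 * x2 ^+ 3 * x3 ^+ 3 - 49 * s * x1 ^+ 3 * x2 ^+ 3 * x3 ^+ 2 - 170 * s * x1 ^+ 3 * x2 ^+ 3 * x3 - 31 * s * x1 ^+ 3 * x2 ^+ 3 - 12 * s * x1 ^+ 3 * x2 ^+ 2 * x3 ^+ 4 - 142 * s * x1 ^+ 3 * x2 ^+ 2 * x3 ^+ 3 - 270 * s * x1 ^+ 3 * x2 ^+ 2 * x3 ^+ 2 + 28 * s * x1 ^+ 3 * x2 ^+ 2 * x3 + 42 * s * x1 ^+ 3 * x2 ^+ 2 - 4 * s * x1 ^+ 3 * x2 * x3 ^+ 5 + 4 * s * x1 ^+ 3 * x2 * x3 ^+ 4 + 108 * s * x1 ^+ 3 * x2 * x3 ^+ 3 + 387 * s * x1 ^+ 3 * x2 * x3 ^+ 2 + 233 * s * x1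 ^+ 3 * x2 * x3 + 19 * s * x1 ^+ 3 * x2 + 20 * s * x1 ^+ 3 * x3 ^+ 5 + 56 * s * x1 ^+ 3 * x3 ^+ 4 + 81 * s * x1 ^+ 3 * x3 ^+ 3 - 34 * s * x1 ^+ 3 * x3 ^+ 2 - 90 * s * x1 ^+ 3 * x3 - 21 * s * x1 ^+ 3 + 8 * s * x1 ^+ 2 * x2 ^+ 5 * x3 ^+ 2 + 16 * s * x1 ^+ 2 * x2 ^+ 5 * x3 - 8 * s * x1 ^+ 2 * x2 ^+ 5 + 5 * s * x1 ^+ 2 * x2 ^+ 4 * x3 ^+ 3 - 58 * s * x1 ^+ 2 * x2 ^+ 4 * x3 ^+ 2 - 177 * s * x1 ^+ 2 * x2 ^+ 4 * x3 - 26 * s * x1 ^+ 2 * x2 ^+ 4 - 8 * s * x1 ^+ 2 * x2 ^+ 3 * x3 ^+ 4 - 126 * s * x1 ^+ 2 * x2 ^+ 3 * x3 ^+ 3 - 172 * s * x1 ^+ 2 * x2 ^+ 3 * x3 ^+ 2 + 199 * s * x1 ^+ 2 * x2 ^+ 3 * x3 + 89 * s * x1 ^+ 2 * x2 ^+ 3 - 4 * s * x1 ^+ 2 * x2 ^+ 2 * x3 ^+ 5 + 6 * s * x1 ^+ 2 * x2 ^+ 2 * x3 ^+ 4 + 326 * s * x1 ^+ 2 * x2 ^+ 2 * x3 ^+ 3 + 804 * s * x1 ^+ 2 * x2 ^+ 2 * x3 ^+ 2 + 366 * s * x1 ^+ 2 * x2 ^+ 2 * x3 + 3 * s * x1 ^+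 2 * x2 ^+ 2 + 28 * s * x1 ^+ 2 * x2 * x3 ^+ 5 + 180 * s * x1 ^+ 2 * x2 * x3 ^+ 4 + 165 * s * x1 ^+ 2 * x2 * x3 ^+ 3 - 341 * s * x1 ^+ 2 * x2 * x3 ^+ 2 - 408 * s * x1 ^+ 2 * x2 * x3 - 84 * s * x1 ^+ 2 * x2 - 12 * s * x1 ^+ 2 * x3 ^+ 5 - 98 * s * x1 ^+ 2 * x3 ^+ 4 - 197 * s * x1 ^+ 2 * x3 ^+ 3 - 87 * s * x1 ^+ 2 * x3 ^+ 2 + 53 * s * x1 ^+ 2 * x3 + 26 * s * x1 ^+ 2 + 4 * s * x1 * x2 ^+ 6 * x3 - 4 * s * x1 * x2 ^+ 6 - 16 * s * x1 * x2 ^+ 5 * x3 ^+ 2 - 68 * s * x1 * x2 ^+ 5 * x3 - 34 * s * x1 * x2 ^+ 4 * x3 ^+ 3 - 23 * s * x1 * x2 ^+ 4 * x3 ^+ 2 + 209 * s * x1 * x2 ^+ 4 * x3 + 56 * s * x1 * x2 ^+ 4 - s * x1 * x2 ^+ 3 * x3 ^+ 4 + 232 * s * x1 * x2 ^+ 3 * x3 ^+ 3 + 613 * s * x1 * x2 ^+ 3 * x3 ^+ 2 + 140 * s * x1 * x2 ^+ 3 * x3 - 43 * s * x1 * x2 ^+ 3 + 8 * s * x1 * x2 ^+ 2 * x3 ^+ 5 + 147 * s * x1 * x2 ^+ 2 * x3 ^+ 4 + 100 * s * x1 * x2 ^+ 2 * x3 ^+ 3 - 664 * s * x1 * x2 ^+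 2 * x3 ^+ 2 - 568 * s * x1 * x2 ^+ 2 * x3 - 82 * s * x1 * x2 ^+ 2 + s * x1 * x2 * x3 ^+ 5 - 174 * s * x1 * x2 * x3 ^+ 4 - 506 * s * x1 * x2 * x3 ^+ 3 - 138 * s * x1 * x2 * x3 ^+ 2 + 219 * s * x1 * x2 * x3 + 69 * s * x1 * x2 - 17 * s * x1 * x3 ^+ 5 - 17 * s * x1 * x3 ^+ 4 + 104 * s * x1 * x3 ^+ 3 + 106 * s * x1 * x3 ^+ 2 - 8 * s * x1 * x3 - 13 * s * x1 - 4 * s * x2 ^+ 6 * x3 + 4 * s * x2 ^+ 6 + 8 * s * x2 ^+ 5 * x3 ^+ 2 + 56 * s * x2 ^+ 5 * x3 + 4 * s * x2 ^+ 5 + 41 * s * x2 ^+ 4 * x3 ^+ 3 + 142 * s * x2 ^+ 4 * x3 ^+ 2 - 9 * s * x2 ^+ 4 * x3 - 18 * s * x2 ^+ 4 + 29 * s * x2 ^+ 3 * x3 ^+ 4 + 31 * s * x2 ^+ 3 * x3 ^+ 3 - 283 * s * x2 ^+ 3 * x3 ^+ 2 - 216 * s * x2 ^+ 3 * x3 - 19 * s * x2 ^+ 3 + 4 * s * x2 ^+ 2 * x3 ^+ 5 - 48 * s * x2 ^+ 2 * x3 ^+ 4 - 248 * s * x2 ^+ 2 * x3 ^+ 3 - 21 * s * x2 ^+ 2 * x3 ^+ 2 + 189 * s * x2 ^+ 2 * x3 + 46 * s * x2 ^+ 2 - 9 * s * x2 * x3 ^+ 5 - 18 * s * x2 * x3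 ^+ 4 + 150 * s * x2 * x3 ^+ 3 + 168 * s * x2 * x3 ^+ 2 - 16 * s * x2 * x3 - 21 * s * x2 + 4 * s * x3 ^+ 5 + 33 * s * x3 ^+ 4 + 20 * s * x3 ^+ 3 - 18 * s * x3 ^+ 2 - s * x3 + 4 * s + 2 * x1 ^+ 5 * x2 ^+ 2 * x3 ^+ 2 + 4 * x1 ^+ 5 * x2 ^+ 2 * x3 + 8 * x1 ^+ 5 * x2 * x3 ^+ 3 + 14 * x1 ^+ 5 * x2 * x3 ^+ 2 + 2 * x1 ^+ 5 * x2 * x3 + 8 * x1 ^+ 5 * x3 ^+ 4 + 12 * x1 ^+ 5 * x3 ^+ 3 - 2 * x1 ^+ 5 * x3 + 9 * x1 ^+ 4 * x2 ^+ 3 * x3 ^+ 2 + 23 * x1 ^+ 4 * x2 ^+ 3 * x3 + 2 * x1 ^+ 4 * x2 ^+ 3 + 26 * x1 ^+ 4 * x2 ^+ 2 * x3 ^+ 3 + 60 * x1 ^+ 4 * x2 ^+ 2 * x3 ^+ 2 + 5 * x1 ^+ 4 * x2 ^+ 2 * x3 - x1 ^+ 4 * x2 ^+ 2 + 12 * x1 ^+ 4 * x2 * x3 ^+ 4 + 32 * x1 ^+ 4 * x2 * x3 ^+ 3 - 35 * x1 ^+ 4 * x2 * x3 ^+ 2 - 38 * x1 ^+ 4 * x2 * x3 - 3 * x1 ^+ 4 * x2 - 8 * x1 ^+ 4 * x3 ^+ 5 - 24 * x1 ^+ 4 * x3 ^+ 4 - 68 * x1 ^+ 4 * x3 ^+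 3 - 52 * x1 ^+ 4 * x3 ^+ 2 - 4 * x1 ^+ 4 * x3 + 13 * x1 ^+ 3 * x2 ^+ 4 * x3 ^+ 2 + 47 * x1 ^+ 3 * x2 ^+ 4 * x3 + 8 * x1 ^+ 3 * x2 ^+ 4 + 33 * x1 ^+ 3 * x2 ^+ 3 * x3 ^+ 3 + 97 * x1 ^+ 3 * x2 ^+ 3 * x3 ^+ 2 - 26 * x1 ^+ 3 * x2 ^+ 3 * x3 - 11 * x1 ^+ 3 * x2 ^+ 3 + 8 * x1 ^+ 3 * x2 ^+ 2 * x3 ^+ 4 - 20 * x1 ^+ 3 * x2 ^+ 2 * x3 ^+ 3 - 208 * x1 ^+ 3 * x2 ^+ 2 * x3 ^+ 2 - 140 * x1 ^+ 3 * x2 ^+ 2 * x3 - 18 * x1 ^+ 3 * x2 ^+ 2 - 12 * x1 ^+ 3 * x2 * x3 ^+ 5 - 90 * x1 ^+ 3 * x2 * x3 ^+ 4 - 218 * x1 ^+ 3 * x2 * x3 ^+ 3 - 155 * x1 ^+ 3 * x2 * x3 ^+ 2 + 9 * x1 ^+ 3 * x2 * x3 + 7 * x1 ^+ 3 * x2 + 4 * x1 ^+ 3 * x3 ^+ 5 + 38 * x1 ^+ 3 * x3 ^+ 4 + 97 * x1 ^+ 3 * x3 ^+ 3 + 126 * x1 ^+ 3 * x3 ^+ 2 + 44 * x1 ^+ 3 * x3 + 3 * x1 ^+ 3 + 6 * x1 ^+ 2 * x2 ^+ 5 * x3 ^+ 2 + 40 * x1 ^+ 2 * x2 ^+ 5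 * x3 + 10 * x1 ^+ 2 * x2 ^+ 5 + 15 * x1 ^+ 2 * x2 ^+ 4 * x3 ^+ 3 + 74 * x1 ^+ 2 * x2 ^+ 4 * x3 ^+ 2 - 71 * x1 ^+ 2 * x2 ^+ 4 * x3 - 30 * x1 ^+ 2 * x2 ^+ 4 + 4 * x1 ^+ 2 * x2 ^+ 3 * x3 ^+ 4 - 54 * x1 ^+ 2 * x2 ^+ 3 * x3 ^+ 3 - 392 * x1 ^+ 2 * x2 ^+ 3 * x3 ^+ 2 - 217 * x1 ^+ 2 * x2 ^+ 3 * x3 - 23 * x1 ^+ 2 * x2 ^+ 3 - 4 * x1 ^+ 2 * x2 ^+ 2 * x3 ^+ 5 - 92 * x1 ^+ 2 * x2 ^+ 2 * x3 ^+ 4 - 288 * x1 ^+ 2 * x2 ^+ 2 * x3 ^+ 3 + 16 * x1 ^+ 2 * x2 ^+ 2 * x3 ^+ 2 + 178 * x1 ^+ 2 * x2 ^+ 2 * x3 + 27 * x1 ^+ 2 * x2 ^+ 2 + 108 * x1 ^+ 2 * x2 * x3 ^+ 4 + 429 * x1 ^+ 2 * x2 * x3 ^+ 3 + 415 * x1 ^+ 2 * x2 * x3 ^+ 2 + 100 * x1 ^+ 2 * x2 * x3 + 16 * x1 ^+ 2 * x2 + 22 * x1 ^+ 2 * x3 ^+ 5 + 38 * x1 ^+ 2 * x3 ^+ 4 - 29 * x1 ^+ 2 * x3 ^+ 3 - 81 * x1 ^+ 2 * x3 ^+ 2 - 31 * x1 ^+ 2 * x3 - 6 * x1 ^+ 2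 + 12 * x1 * x2 ^+ 6 * x3 + 4 * x1 * x2 ^+ 6 + 22 * x1 * x2 ^+ 5 * x3 ^+ 2 - 50 * x1 * x2 ^+ 5 * x3 - 24 * x1 * x2 ^+ 5 - 16 * x1 * x2 ^+ 4 * x3 ^+ 3 - 241 * x1 * x2 ^+ 4 * x3 ^+ 2 - 147 * x1 * x2 ^+ 4 * x3 - 10 * x1 * x2 ^+ 4 - 25 * x1 * x2 ^+ 3 * x3 ^+ 4 - 150 * x1 * x2 ^+ 3 * x3 ^+ 3 + 191 * x1 * x2 ^+ 3 * x3 ^+ 2 + 342 * x1 * x2 ^+ 3 * x3 + 51 * x1 * x2 ^+ 3 - 2 * x1 * x2 ^+ 2 * x3 ^+ 5 + 75 * x1 * x2 ^+ 2 * x3 ^+ 4 + 508 * x1 * x2 ^+ 2 * x3 ^+ 3 + 494 * x1 * x2 ^+ 2 * x3 ^+ 2 - 36 * x1 * x2 ^+ 2 * x3 - 6 * x1 * x2 ^+ 2 + 29 * x1 * x2 * x3 ^+ 5 + 96 * x1 * x2 * x3 ^+ 4 - 114 * x1 * x2 * x3 ^+ 3 - 340 * x1 * x2 * x3 ^+ 2 - 59 * x1 * x2 * x3 - x1 * x2 - 11 * x1 * x3 ^+ 5 - 61 * x1 * x3 ^+ 4 - 62 * x1 * x3 ^+ 3 + 22 * x1 * x3 ^+ 2 - 4 * x1 * x3 - 7 * x1 - 12 * x2 ^+ 6 * x3 - 4 * x2 ^+ 6 - 44 * x2 ^+ 5 * x3 ^+ 2 - 26 * x2 ^+ 5 * x3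 - 6 * x2 ^+ 5 - 29 * x2 ^+ 4 * x3 ^+ 3 + 74 * x2 ^+ 4 * x3 ^+ 2 + 137 * x2 ^+ 4 * x3 + 36 * x2 ^+ 4 + 7 * x2 ^+ 3 * x3 ^+ 4 + 143 * x2 ^+ 3 * x3 ^+ 3 + 169 * x2 ^+ 3 * x3 ^+ 2 - 74 * x2 ^+ 3 * x3 - 35 * x2 ^+ 3 + 6 * x2 ^+ 2 * x3 ^+ 5 + 32 * x2 ^+ 2 * x3 ^+ 4 - 78 * x2 ^+ 2 * x3 ^+ 3 - 283 * x2 ^+ 2 * x3 ^+ 2 - 53 * x2 ^+ 2 * x3 + 18 * x2 ^+ 2 - 9 * x2 * x3 ^+ 5 - 62 * x2 * x3 ^+ 4 - 100 * x2 * x3 ^+ 3 + 46 * x2 * x3 ^+ 2 + 14 * x2 * x3 - 15 * x2 + 7 * x3 ^+ 4 + 30 * x3 ^+ 3 + 2 * x3 ^+ 2 - 5 * x3 + 2)) (8 * (m2F6 s x1 x2 x3) * (m2F8 s x1 x2 x3)) hs _).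
  by rewrite /m2F3 /m2F4 /m2F5 /m2F6 /m2F7 /m2F8 /m2F9; field; nzr2 hn h3 h4 h5 h6 h7 h8 h9.
- rewrite /=.
  refine (@eq_via _ s _ _ ((s ^+ 2 * x1 ^+ 4 * x2 ^+ 3 * x3 - 3 * s ^+ 2 * x1 ^+ 4 * x2 ^+ 2 * x3 - s ^+ 2 * x1 ^+ 4 * x2 ^+ 2 + 3 * s ^+ 2 * x1 ^+ 4 * x2 * x3 + 2 * s ^+ 2 * x1 ^+ 4 * x2 - s ^+ 2 * x1 ^+ 4 * x3 - s ^+ 2 * x1 ^+ 4 + s ^+ 2 * x1 ^+ 3 * x2 ^+ 4 * x3 - 9 * s ^+ 2 * x1 ^+ 3 * x2 ^+ 3 * x3 - 3 * s ^+ 2 * x1 ^+ 3 * x2 ^+ 3 - 5 * s ^+ 2 * x1 ^+ 3 * x2 ^+ 2 * x3 ^+ 2 + 15 * s ^+ 2 * x1 ^+ 3 * x2 ^+ 2 * x3 + 12 * s ^+ 2 * x1 ^+ 3 * x2 ^+ 2 + 10 * s ^+ 2 * x1 ^+ 3 * x2 * x3 ^+ 2 - 2 * s ^+ 2 * x1 ^+ 3 * x2 * x3 - 10 * s ^+ 2 * x1 ^+ 3 * x2 - 5 * s ^+ 2 * x1 ^+ 3 * x3 ^+ 2 - 5 * s ^+ 2 * x1 ^+ 3 * x3 + s ^+ 2 * x1 ^+ 3 - 6 * s ^+ 2 * x1 ^+ 2 * x2 ^+ 4 * x3 - 2 * s ^+ 2 * x1 ^+ 2 * x2 ^+ 4 -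 5 * s ^+ 2 * x1 ^+ 2 * x2 ^+ 3 * x3 ^+ 2 + 22 * s ^+ 2 * x1 ^+ 2 * x2 ^+ 3 * x3 + 20 * s ^+ 2 * x1 ^+ 2 * x2 ^+ 3 - s ^+ 2 * x1 ^+ 2 * x2 ^+ 2 * x3 ^+ 3 + 25 * s ^+ 2 * x1 ^+ 2 * x2 ^+ 2 * x3 ^+ 2 - 29 * s ^+ 2 * x1 ^+ 2 * x2 ^+ 2 + 6 * s ^+ 2 * x1 ^+ 2 * x2 * x3 ^+ 3 - 21 * s ^+ 2 * x1 ^+ 2 * x2 * x3 ^+ 2 - 33 * s ^+ 2 * x1 ^+ 2 * x2 * x3 + 5 * s ^+ 2 * x1 ^+ 2 * x2 - 5 * s ^+ 2 * x1 ^+ 2 * x3 ^+ 3 - 3 * s ^+ 2 * x1 ^+ 2 * x3 ^+ 2 + 9 * s ^+ 2 * x1 ^+ 2 * x3 + 2 * s ^+ 2 * x1 ^+ 2 + 9 * s ^+ 2 * x1 * x2 ^+ 4 * x3 + 10 * s ^+ 2 * x1 * x2 ^+ 4 + 13 * s ^+ 2 * x1 * x2 ^+ 3 * x3 ^+ 2 - 5 * s ^+ 2 * x1 * x2 ^+ 3 * x3 - 29 * s ^+ 2 * x1 * x2 ^+ 3 + 6 * s ^+ 2 * x1 * x2 ^+ 2 * x3 ^+ 3 - 24 * s ^+ 2 * x1 * x2 ^+ 2 * x3 ^+ 2 - 45 * s ^+ 2 * x1 * x2 ^+ 2 * x3 + 9 * s ^+ 2 * x1 * x2 ^+ 2 +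 s ^+ 2 * x1 * x2 * x3 ^+ 4 - 12 * s ^+ 2 * x1 * x2 * x3 ^+ 3 - 13 * s ^+ 2 * x1 * x2 * x3 ^+ 2 + 26 * s ^+ 2 * x1 * x2 * x3 + 7 * s ^+ 2 * x1 * x2 - s ^+ 2 * x1 * x3 ^+ 4 + s ^+ 2 * x1 * x3 ^+ 3 + 9 * s ^+ 2 * x1 * x3 ^+ 2 - 2 * s ^+ 2 * x1 - 4 * s ^+ 2 * x2 ^+ 4 * x3 - 8 * s ^+ 2 * x2 ^+ 4 - 8 * s ^+ 2 * x2 ^+ 3 * x3 ^+ 2 - 15 * s ^+ 2 * x2 ^+ 3 * x3 + 6 * s ^+ 2 * x2 ^+ 3 - 5 * s ^+ 2 * x2 ^+ 2 * x3 ^+ 3 - 7 * s ^+ 2 * x2 ^+ 2 * x3 ^+ 2 + 16 * s ^+ 2 * x2 ^+ 2 * x3 + 3 * s ^+ 2 * x2 ^+ 2 - s ^+ 2 * x2 * x3 ^+ 4 + 11 * s ^+ 2 * x2 * x3 ^+ 2 + s ^+ 2 * x2 * x3 - 2 * s ^+ 2 * x2 + s ^+ 2 * x3 ^+ 3 - 2 * s ^+ 2 * x3 ^+ 2 - 2 * s ^+ 2 * x3 + 2 * s * x1 ^+ 4 * x2 ^+ 3 * x3 + 2 * s * x1 ^+ 4 * x2 ^+ 3 + 4 * s * x1 ^+ 4 * x2 ^+ 2 * x3 ^+ 2 - 6 * s * x1 ^+ 4 * x2 ^+ 2 - 8 * s * x1 ^+ 4 * x2 * x3 ^+ 2 - 10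 * s * x1 ^+ 4 * x2 * x3 + 2 * s * x1 ^+ 4 * x2 + 4 * s * x1 ^+ 4 * x3 ^+ 2 + 8 * s * x1 ^+ 4 * x3 + 2 * s * x1 ^+ 4 + 4 * s * x1 ^+ 3 * x2 ^+ 4 * x3 + 4 * s * x1 ^+ 3 * x2 ^+ 4 + 8 * s * x1 ^+ 3 * x2 ^+ 3 * x3 ^+ 2 - 10 * s * x1 ^+ 3 * x2 ^+ 3 * x3 - 26 * s * x1 ^+ 3 * x2 ^+ 3 + 2 * s * x1 ^+ 3 * x2 ^+ 2 * x3 ^+ 3 - 44 * s * x1 ^+ 3 * x2 ^+ 2 * x3 ^+ 2 - 48 * s * x1 ^+ 3 * x2 ^+ 2 * x3 + 24 * s * x1 ^+ 3 * x2 ^+ 2 - 14 * s * x1 ^+ 3 * x2 * x3 ^+ 3 + 32 * s * x1 ^+ 3 * x2 * x3 ^+ 2 + 92 * s * x1 ^+ 3 * x2 * x3 + 18 * s * x1 ^+ 3 * x2 + 12 * s * x1 ^+ 3 * x3 ^+ 3 + 14 * s * x1 ^+ 3 * x3 ^+ 2 - 18 * s * x1 ^+ 3 * x3 - 10 * s * x1 ^+ 3 + 2 * s * x1 ^+ 2 * x2 ^+ 5 * x3 + 2 * s * x1 ^+ 2 * x2 ^+ 5 + 4 * s * x1 ^+ 2 * x2 ^+ 4 * x3 ^+ 2 - 16 * s * x1 ^+ 2 * x2 ^+ 4 * x3 - 34 * s * x1 ^+ 2 * x2 ^+ 4 + 2 * s * x1 ^+ 2 * x2 ^+ 3 * x3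 ^+ 3 - 46 * s * x1 ^+ 2 * x2 ^+ 3 * x3 ^+ 2 - 50 * s * x1 ^+ 2 * x2 ^+ 3 * x3 + 66 * s * x1 ^+ 2 * x2 ^+ 3 - 24 * s * x1 ^+ 2 * x2 ^+ 2 * x3 ^+ 3 + 66 * s * x1 ^+ 2 * x2 ^+ 2 * x3 ^+ 2 + 228 * s * x1 ^+ 2 * x2 ^+ 2 * x3 + 30 * s * x1 ^+ 2 * x2 ^+ 2 - 4 * s * x1 ^+ 2 * x2 * x3 ^+ 4 + 48 * s * x1 ^+ 2 * x2 * x3 ^+ 3 + 70 * s * x1 ^+ 2 * x2 * x3 ^+ 2 - 116 * s * x1 ^+ 2 * x2 * x3 - 66 * s * x1 ^+ 2 * x2 + 4 * s * x1 ^+ 2 * x3 ^+ 4 - 16 * s * x1 ^+ 2 * x3 ^+ 3 - 66 * s * x1 ^+ 2 * x3 ^+ 2 - 22 * s * x1 ^+ 2 * x3 + 10 * s * x1 ^+ 2 - 4 * s * x1 * x2 ^+ 5 * x3 - 14 * s * x1 * x2 ^+ 5 - 8 * s * x1 * x2 ^+ 4 * x3 ^+ 2 - 8 * s * x1 * x2 ^+ 4 * x3 + 58 * s * x1 * x2 ^+ 4 - 6 * s * x1 * x2 ^+ 3 * x3 ^+ 3 + 38 * s * x1 * x2 ^+ 3 * x3 ^+ 2 + 158 * s * x1 * x2 ^+ 3 * x3 - 4 * s * x1 * x2 ^+ 3 - 2 * s * x1 * x2 ^+ 2 * x3 ^+ 4 + 32 * s * x1 * x2 ^+ 2 * x3 ^+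 3 + 58 * s * x1 * x2 ^+ 2 * x3 ^+ 2 - 174 * s * x1 * x2 ^+ 2 * x3 - 94 * s * x1 * x2 ^+ 2 + 8 * s * x1 * x2 * x3 ^+ 4 - 20 * s * x1 * x2 * x3 ^+ 3 - 148 * s * x1 * x2 * x3 ^+ 2 - 44 * s * x1 * x2 * x3 + 40 * s * x1 * x2 - 6 * s * x1 * x3 ^+ 4 - 14 * s * x1 * x3 ^+ 3 + 34 * s * x1 * x3 ^+ 2 + 44 * s * x1 * x3 + 4 * s * x1 + 2 * s * x2 ^+ 5 * x3 + 12 * s * x2 ^+ 5 + 2 * s * x2 ^+ 4 * x3 ^+ 2 + 20 * s * x2 ^+ 4 * x3 - 18 * s * x2 ^+ 4 + 2 * s * x2 ^+ 3 * x3 ^+ 2 - 68 * s * x2 ^+ 3 * x3 - 26 * s * x2 ^+ 3 - 8 * s * x2 ^+ 2 * x3 ^+ 3 - 62 * s * x2 ^+ 2 * x3 ^+ 2 - 10 * s * x2 ^+ 2 * x3 + 28 * s * x2 ^+ 2 - 4 * s * x2 * x3 ^+ 4 - 16 * s * x2 * x3 ^+ 3 + 26 * s * x2 * x3 ^+ 2 + 46 * s * x2 * x3 + 2 * s * x2 + 6 * s * x3 ^+ 3 + 2 * s * x3 ^+ 2 - 12 * s * x3 - 4 * s + x1 ^+ 4 * x2 ^+ 3 * x3 + 2 * x1 ^+ 4 * x2 ^+ 3 + 4 * x1 ^+ 4 * x2 ^+ 2 * x3 ^+ 2 + 7 * x1 ^+ 4 * x2 ^+ 2 * x3 - x1 ^+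 4 * x2 ^+ 2 + 4 * x1 ^+ 4 * x2 * x3 ^+ 3 + 4 * x1 ^+ 4 * x2 * x3 ^+ 2 - 9 * x1 ^+ 4 * x2 * x3 - 4 * x1 ^+ 4 * x2 - 4 * x1 ^+ 4 * x3 ^+ 3 - 12 * x1 ^+ 4 * x3 ^+ 2 - 7 * x1 ^+ 4 * x3 - x1 ^+ 4 + 3 * x1 ^+ 3 * x2 ^+ 4 * x3 + 8 * x1 ^+ 3 * x2 ^+ 4 + 12 * x1 ^+ 3 * x2 ^+ 3 * x3 ^+ 2 + 23 * x1 ^+ 3 * x2 ^+ 3 * x3 - 11 * x1 ^+ 3 * x2 ^+ 3 + 14 * x1 ^+ 3 * x2 ^+ 2 * x3 ^+ 3 + x1 ^+ 3 * x2 ^+ 2 * x3 ^+ 2 - 63 * x1 ^+ 3 * x2 ^+ 2 * x3 - 24 * x1 ^+ 3 * x2 ^+ 2 + 4 * x1 ^+ 3 * x2 * x3 ^+ 4 - 26 * x1 ^+ 3 * x2 * x3 ^+ 3 - 70 * x1 ^+ 3 * x2 * x3 ^+ 2 - 18 * x1 ^+ 3 * x2 * x3 + 16 * x1 ^+ 3 * x2 - 4 * x1 ^+ 3 * x3 ^+ 4 + 12 * x1 ^+ 3 * x3 ^+ 3 + 55 * x1 ^+ 3 * x3 ^+ 2 + 51 * x1 ^+ 3 * x3 + 9 * x1 ^+ 3 + 2 * x1 ^+ 2 * x2 ^+ 5 * x3 + 10 * x1 ^+ 2 * x2 ^+ 5 + 8 * x1 ^+ 2 * x2 ^+ 4 *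 x3 ^+ 2 + 22 * x1 ^+ 2 * x2 ^+ 4 * x3 - 28 * x1 ^+ 2 * x2 ^+ 4 + 10 * x1 ^+ 2 * x2 ^+ 3 * x3 ^+ 3 - 5 * x1 ^+ 2 * x2 ^+ 3 * x3 ^+ 2 - 120 * x1 ^+ 2 * x2 ^+ 3 * x3 - 30 * x1 ^+ 2 * x2 ^+ 3 + 4 * x1 ^+ 2 * x2 ^+ 2 * x3 ^+ 4 - 31 * x1 ^+ 2 * x2 ^+ 2 * x3 ^+ 3 - 115 * x1 ^+ 2 * x2 ^+ 2 * x3 ^+ 2 + 40 * x1 ^+ 2 * x2 ^+ 2 * x3 + 75 * x1 ^+ 2 * x2 ^+ 2 - 12 * x1 ^+ 2 * x2 * x3 ^+ 4 + 18 * x1 ^+ 2 * x2 * x3 ^+ 3 + 195 * x1 ^+ 2 * x2 * x3 ^+ 2 + 185 * x1 ^+ 2 * x2 * x3 + 13 * x1 ^+ 2 * x2 + 12 * x1 ^+ 2 * x3 ^+ 4 + 25 * x1 ^+ 2 * x3 ^+ 3 - 35 * x1 ^+ 2 * x3 ^+ 2 - 83 * x1 ^+ 2 * x3 - 24 * x1 ^+ 2 + 4 * x1 * x2 ^+ 6 + 8 * x1 * x2 ^+ 5 * x3 - 22 * x1 * x2 ^+ 5 + 4 * x1 * x2 ^+ 4 * x3 ^+ 2 - 65 * x1 * x2 ^+ 4 * x3 - 2 * x1 * x2 ^+ 3 * x3 ^+ 3 - 47 * x1 * x2 ^+ 3 * x3 ^+ 2 + 83 * x1 * x2 ^+ 3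 * x3 + 81 * x1 * x2 ^+ 3 - 2 * x1 * x2 ^+ 2 * x3 ^+ 4 + 10 * x1 * x2 ^+ 2 * x3 ^+ 3 + 170 * x1 * x2 ^+ 2 * x3 ^+ 2 + 167 * x1 * x2 ^+ 2 * x3 - 23 * x1 * x2 ^+ 2 + 11 * x1 * x2 * x3 ^+ 4 + 40 * x1 * x2 * x3 ^+ 3 - 71 * x1 * x2 * x3 ^+ 2 - 214 * x1 * x2 * x3 - 59 * x1 * x2 - 5 * x1 * x3 ^+ 4 - 31 * x1 * x3 ^+ 3 - 31 * x1 * x3 ^+ 2 + 36 * x1 * x3 + 22 * x1 - 4 * x2 ^+ 6 - 6 * x2 ^+ 5 * x3 + 8 * x2 ^+ 5 - 2 * x2 ^+ 4 * x3 ^+ 2 + 24 * x2 ^+ 4 * x3 + 14 * x2 ^+ 4 + 22 * x2 ^+ 3 * x3 ^+ 2 + 15 * x2 ^+ 3 * x3 - 20 * x2 ^+ 3 + x2 ^+ 2 * x3 ^+ 3 - 39 * x2 ^+ 2 * x3 ^+ 2 - 102 * x2 ^+ 2 * x3 - 31 * x2 ^+ 2 - 3 * x2 * x3 ^+ 4 - 20 * x2 * x3 ^+ 3 - 25 * x2 * x3 ^+ 2 + 45 * x2 * x3 + 32 * x2 + 5 * x3 ^+ 3 + 20 * x3 ^+ 2 + 6 * x3 - 4)) (4 * (m2F7 s x1 x2 x3) * (m2F9 s x1 x2 x3)) hs _).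
  by rewrite /m2F3 /m2F4 /m2F5 /m2F6 /m2F7 /m2F8 /m2F9; field; nzr2 hn h3 h4 h5 h6 h7 h8 h9.
- rewrite /=.
  refine (@eq_via _ s _ _ ((s * x1 ^+ 3 * x2 ^+ 2 * x3 ^+ 2 - s * x1 ^+ 3 * x2 ^+ 2 * x3 - 3 * s * x1 ^+ 3 * x2 * x3 ^+ 2 + s * x1 ^+ 3 * x2 + 2 * s * x1 ^+ 3 * x3 ^+ 2 + 2 * s * x1 ^+ 3 * x3 + s * x1 ^+ 2 * x2 ^+ 3 * x3 ^+ 2 - s * x1 ^+ 2 * x2 ^+ 3 * x3 - 4 * s * x1 ^+ 2 * x2 ^+ 2 * x3 ^+ 2 - 2 * s * x1 ^+ 2 * x2 ^+ 2 * x3 + 3 * s * x1 ^+ 2 * x2 ^+ 2 - s * x1 ^+ 2 * x2 * x3 ^+ 3 + 3 * s * x1 ^+ 2 * x2 * x3 ^+ 2 + 9 * s * x1 ^+ 2 * x2 * x3 + s * x1 ^+ 2 * x3 ^+ 3 + 2 * s * x1 ^+ 2 * x3 ^+ 2 - 2 * s * x1 ^+ 2 * x3 - s * x1 ^+ 2 - 2 * s * x1 * x2 ^+ 3 * x3 + 2 * s * x1 * x2 ^+ 3 - 2 * s * x1 * x2 ^+ 2 * x3 ^+ 2 + 6 * s * x1 * x2 ^+ 2 * x3 + 2 * s * x1 * x2 ^+ 2 + 7 * s * x1 * x2 * x3 ^+ 2 + 3 * s * x1 * x2 * x3 - 3 * s * x1 * x2 + s * x1 * x3 ^+ 3 - s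 * x1 * x3 ^+ 2 - 3 * s * x1 * x3 - s * x2 ^+ 3 * x3 ^+ 2 - s * x2 ^+ 3 * x3 + 2 * s * x2 ^+ 3 + 3 * s * x2 ^+ 2 * x3 ^+ 2 + 7 * s * x2 ^+ 2 * x3 - s * x2 ^+ 2 + s * x2 * x3 ^+ 3 + s * x2 * x3 ^+ 2 - 6 * s * x2 * x3 - 2 * s * x2 - s * x3 ^+ 2 + s * x3 + s + x1 ^+ 3 * x2 ^+ 2 * x3 ^+ 2 + x1 ^+ 3 * x2 ^+ 2 * x3 - 2 * x1 ^+ 3 * x2 ^+ 2 + 2 * x1 ^+ 3 * x2 * x3 ^+ 3 - x1 ^+ 3 * x2 * x3 ^+ 2 - 6 * x1 ^+ 3 * x2 * x3 + x1 ^+ 3 * x2 - 2 * x1 ^+ 3 * x3 ^+ 3 - 2 * x1 ^+ 3 * x3 ^+ 2 + 2 * x1 ^+ 3 * x3 + x1 ^+ 2 * x2 ^+ 3 * x3 ^+ 2 + 3 * x1 ^+ 2 * x2 ^+ 3 * x3 - 4 * x1 ^+ 2 * x2 ^+ 3 + 2 * x1 ^+ 2 * x2 ^+ 2 * x3 ^+ 3 + 6 * x1 ^+ 2 * x2 ^+ 2 * x3 ^+ 2 - 12 * x1 ^+ 2 * x2 ^+ 2 * x3 + x1 ^+ 2 * x2 ^+ 2 - 3 * x1 ^+ 2 * x2 * x3 ^+ 3 - 17 * x1 ^+ 2 * x2 * x3 ^+ 2 + 3 * x1 ^+ 2 * x2 * x3 + 4 * x1 ^+ 2 * x2 + 3 *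 x1 ^+ 2 * x3 ^+ 3 + 12 * x1 ^+ 2 * x3 ^+ 2 + 6 * x1 ^+ 2 * x3 - x1 ^+ 2 + 2 * x1 * x2 ^+ 4 * x3 - 2 * x1 * x2 ^+ 4 + 6 * x1 * x2 ^+ 3 * x3 ^+ 2 - 2 * x1 * x2 ^+ 3 * x3 - 2 * x1 * x2 ^+ 3 - 20 * x1 * x2 ^+ 2 * x3 ^+ 2 - 20 * x1 * x2 ^+ 2 * x3 + 4 * x1 * x2 ^+ 2 - 4 * x1 * x2 * x3 ^+ 3 + 11 * x1 * x2 * x3 ^+ 2 + 27 * x1 * x2 * x3 + 3 * x1 * x2 + x1 * x3 ^+ 3 - 3 * x1 * x3 ^+ 2 - 11 * x1 * x3 - 4 * x1 + 2 * x2 ^+ 4 * x3 - 2 * x2 ^+ 4 - 3 * x2 ^+ 3 * x3 ^+ 2 - 17 * x2 ^+ 3 * x3 - 2 * x2 ^+ 3 - 2 * x2 ^+ 2 * x3 ^+ 3 - 5 * x2 ^+ 2 * x3 ^+ 2 + 19 * x2 ^+ 2 * x3 + 9 * x2 ^+ 2 + x2 * x3 ^+ 3 + 7 * x2 * x3 ^+ 2 - 8 * x2 * x3 - 8 * x2 - 3 * x3 ^+ 2 - x3 + 1)) (4 * (m2F8 s x1 x2 x3)) hs _).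
  by rewrite /m2F3 /m2F4 /m2F5 /m2F6 /m2F7 /m2F8 /m2F9; field; nzr2 hn h3 h4 h5 h6 h7 h8 h9.
- rewrite /=.
  refine (@eq_via _ s _ _ ((- x1 ^+ 2 * x2 + x1 ^+ 2 + x1 * x2 ^+ 2 * x3 - 2 * x1 * x2 ^+ 2 + 3 * x1 * x2 + x2 ^+ 3 * x3 - x2 ^+ 3 - x2 ^+ 2 * x3 + 2 * x2 ^+ 2 - x2 * x3 ^+ 2 - x2 * x3 - x3 ^+ 2)) (2 * (m2F9 s x1 x2 x3)) hs _).
  by rewrite /m2F3 /m2F4 /m2F5 /m2F6 /m2F7 /m2F8 /m2F9; field; nzr2 hn h3 h4 h5 h6 h7 h8 h9.
Qed.

Theorem mainTheorem3 (C : numClosedFieldType) :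
  let K := ratfun3 C in
  let c (x : C) : K := FracField.tofrac (x%:P%:P%:P) in
  let s : C := sqrtC 3 * 'i in
  [/\ rec3_periodic
        (fun a b c0 : K => -1 - 2 * a + 2 * b - 2 * c0) (fun a _ _ : K => 2 * a) 12,
      rec3_periodic
        (fun a b c0 : K => c (1 + s) * a + 2 * b + c (1 - s) * c0 + c (-1 - s))
        (fun a _ _ : K => 2 * a) 12 &
      rec3_periodic
        (fun a b c0 : K => c (1 - s) * a + 2 * b + c (1 + s) * c0 + c (-1 + s))
        (fun a _ _ : K => 2 * a) 12].
Proof.
move=> K c s.
have hs : s ^+ 2 = -3 by rewrite /s exprMn sqrtCK sqrCi mulrN1.
have hsn : (- s) ^+ 2 = -3 by rewrite sqrrN.
have hn := @natnz C.
have liftsq (t : C) : t ^+ 2 = -3 -> (c t) ^+ 2 = -3.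
  by move=> ht; rewrite -!rmorphXn ht !rmorphN !rmorph_nat.
have cD x y : c (x + y) = c x + c y by rewrite /c !polyCD; exact: rmorphD.
have cN x : c (- x) = - c x by rewrite /c !polyCN; exact: rmorphN.
have c1 : c 1 = 1 by rewrite /c !polyC1; exact: rmorph1.
split.
- exact: (@m1_gen _ _ _ _ _ _ hn (indet1_nz C) (indet2_nz C) (indet3_nz C)
    (m1F3_nz C) (m1F4_nz C) (m1F5_nz C) (m1F6_nz C) (m1F7_nz C) (m1F8_nz C)
    (m1F9_nz C) (m1F10_nz C) (m1F11_nz C)).
- apply: (@m2_gen _ _ _ _ _ _ _ (liftsq s hs) hn (indet1_nz C) (indet2_nz C) (indet3_nz C)
    (@m2F3_nz C s hs) (@m2F4_nz C s hs) (@m2F5_nz C s hs) (@m2F6_nz C s hs) (@m2F7_nz C s hs) (@m2F8_nz C s hs)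
    (@m2F9_nz C s hs)) => [a b c0|]; last by [].
  by rewrite !cD !cN c1.
- apply: (@m2_gen _ _ _ _ _ _ _ (liftsq (- s) hsn) hn (indet1_nz C) (indet2_nz C) (indet3_nz C)
    (@m2F3_nz C (- s) hsn) (@m2F4_nz C (- s) hsn) (@m2F5_nz C (- s) hsn) (@m2F6_nz C (- s) hsn) (@m2F7_nz C (- s) hsn) (@m2F8_nz C (- s) hsn)
    (@m2F9_nz C (- s) hsn)) => [a b c0|]; last by [].
  by rewrite !cD !cN c1 !opprK.
Qed.
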